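(* Let $1<p<\infty$, $N\ge1$, $0\le R_1<R_2<\infty$, and let $f$ satisfy: $(f_{\mathrm{reg}})$ $f\in C([0,\infty))\cap C^1((0,\infty))$; $(f_{\mathrm{eq}})$ $f(0)=f(1)=0$, $f(s)<0$ for $0<s<1$, $f(s)>0$ for $s>1$; $(f_0)$ there exists $C_0\in[0,\infty)$ with $\lim_{s\to0^+}f(s)/s^{p-1}=-C_0$; $(f_1)$ there exists $C_1\in[0,\infty]$ with $\lim_{s\to1}\frac{f(s)}{|s-1|^{p-2}(s-1)}=C_1$. Let $\hat f(s)=f(s)$ for $s\ge0$, $\hat f(s)=0$ for $s<0$, $\varphi_p(s)=|s|^{p-2}s$, and for $d\in[0,1]$ consider the Cauchy problem $$u'=\varphi_p^{-1}\Big(\frac{v}{r^{N-1}}\Big),\qquad v'=-r^{N-1}\hat f(u),\qquad u(R_1)=1-d,\ v(R_1)=0.$$ Then for every $d\in[0,1]$ the solution $(u_d,v_d)$ of this problem is unique and can be defined on the whole interval $[R_1,R_2]$; moreover, if $(d_n)\subset(0,1)$ and $d_n\to d\in[0,1]$, then $(u_{d_n}(r),v_{d_n}(r))\to(u_d(r),v_d(r))$ uniformly in $r\in[R_1,R_2]$.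
   Context: $\varphi_p^{-1}=\varphi_{p'}$ with $1/p+1/p'=1$. When $R_1=0$ the system is singular at $r=0$; a solution on an interval $[R_1,r^* )$ is then a pair $(u,v)$ such that $u$ and $v=r^{N-1}\varphi_p(u')$ are $C^1$, satisfy the equations for $r>0$ and the initial conditions (so that $u'(R_1)=0$). Uniqueness means uniqueness as long as the solution is defined. *)

(* Defs.v *)
From Stdlib Require Import Reals Lra.
From Coquelicot Require Import Coquelicot.
Open Scope R_scope.

(* varphi_p(s) = |s|^(p-2) s = sign(s) |s|^(p-1) *)
Definition phi_p (p s : R) : R :=
  if Rlt_dec 0 s then Rpower s (p - 1)
  else if Rlt_dec s 0 then - Rpower (- s) (p - 1)
  else 0.

(* conjugate exponent p' with 1/p + 1/p' = 1; varphi_p^{-1} = varphi_{p'} *)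
Definition conj_exp (p : R) : R := p / (p - 1).
Definition phi_p_inv (p s : R) : R := phi_p (conj_exp p) s.

Definition fhat (f : R -> R) (s : R) : R :=
  if Rle_dec 0 s then f s else 0.

(* (f_reg): f in C([0,oo)) /\ C^1((0,oo)) *)
Definition f_reg (f : R -> R) : Prop :=
  filterlim f (at_right 0) (locally (f 0)) /\
  (forall s, 0 < s -> ex_derive f s /\ continuous (Derive f) s).

Definition f_eq (f : R -> R) : Prop :=
  f 0 = 0 /\ f 1 = 0 /\
  (forall s, 0 < s < 1 -> f s < 0) /\
  (forall s, 1 < s -> 0 < f s).

Definition f_0 (p : R) (f : R -> R) : Prop :=
  exists C0 : R, 0 <= C0 /\
    filterlim (fun s => f s / Rpower s (p - 1)) (at_right 0) (locally (- C0)).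

Definition f_1 (p : R) (f : R -> R) : Prop :=
  exists C1 : Rbar, Rbar_le (Finite 0) C1 /\
    is_lim (fun s => f s / phi_p p (s - 1)) 1 C1.

Definition C1_on_Ico (g : R -> R) (a b : R) : Prop :=
  exists g' : R -> R,
    (forall r, a < r < b -> is_derive g r (g' r) /\ continuous g' r) /\
    filterlim (fun h => (g (a + h) - g a) / h) (at_right 0) (locally (g' a)) /\
    filterlim g' (at_right a) (locally (g' a)).

Definition is_solution (p : R) (N : nat) (f : R -> R) (R1 d : R)
    (u v : R -> R) (rs : R) : Prop :=
  R1 < rs /\
  C1_on_Ico u R1 rs /\ C1_on_Ico v R1 rs /\
  u R1 = 1 - d /\ v R1 = 0 /\
  (forall r, R1 < r < rs -> 0 < r ->
     is_derive u r (phi_p_inv p (v r / r ^ (N - 1))) /\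
     is_derive v r (- (r ^ (N - 1) * fhat f (u r)))).

(* Main.v *)
Require Import Defs.
From Stdlib Require Import Reals.
From Coquelicot Require Import Coquelicot.
From Stdlib Require Import Lra Lia ZArith List.
From Stdlib Require Import ClassicalEpsilon.
Open Scope R_scope.

Open Scope R_scope.

Lemma ballR (x e y : R) : ball x e y <-> Rabs (y - x) < e.
Proof. reflexivity. Qed.

Lemma cont_eps (f : R -> R) x :
  (forall eps, 0 < eps -> exists d, 0 < d /\ forall y, Rabs (y - x) < d -> Rabs (f y - f x) < eps) ->
  continuous f x.
Proof.
  intros H. apply (proj2 (filterlim_locally f (f x))). intros [e he].
  destruct (H e he) as [d [hd Hd]]. exists (mkposreal d hd). intros y Hy. apply Hd. apply Hy.
Qed.

Lemma eps_cont (f : R -> R) x : continuous f x ->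
  forall eps, 0 < eps -> exists d, 0 < d /\ forall y, Rabs (y - x) < d -> Rabs (f y - f x) < eps.
Proof.
  intros H eps he. destruct (proj1 (filterlim_locally f (f x)) H (mkposreal eps he)) as [[d hd] Hd].
  exists d; split; [auto|]. intros y Hy. apply (Hd y Hy).
Qed.

Definition rcont (g : R -> R) a := forall eps, 0 < eps -> exists d, 0 < d /\
  forall x, a <= x < a + d -> Rabs (g x - g a) < eps.

Lemma cont_rcont g a : continuous g a -> rcont g a.
Proof.
  intros H eps he. destruct (eps_cont g a H eps he) as [d [hd Hd]].
  exists d; split; auto. intros x Hx. apply Hd. rewrite Rabs_right; lra.
Qed.

Lemma filterlim_rcont g a : filterlim g (at_right a) (locally (g a)) -> rcont g a.
Proof.
  intros H eps he. destruct (proj1 (filterlim_locally g (g a)) H (mkposreal eps he)) as [[d hd] Hd].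
  exists d; split; auto. intros x Hx. destruct (Req_dec x a) as [->|Hne].
  - rewrite Rminus_eq_0, Rabs_R0; auto.
  - apply (Hd x). apply ballR. rewrite Rabs_right; simpl; lra. simpl; lra.
Qed.

Lemma rcont_filterlim g a : rcont g a -> filterlim g (at_right a) (locally (g a)).
Proof.
  intros H. apply (proj2 (filterlim_locally g (g a))). intros [e he].
  destruct (H e he) as [d [hd Hd]]. exists (mkposreal d hd). intros y Hy Hay.
  apply ballR. apply Hd. assert (Hy' : Rabs (y - a) < d) by exact Hy.
  rewrite Rabs_right in Hy'; lra.
Qed.

Lemma derive_cont (f : R -> R) x l : is_derive f x l -> continuous f x.
Proof. intros H. apply (ex_derive_continuous (K := R_AbsRing) (V := R_NormedModule)). exists l; auto. Qed.

Lemma mvt_right (g dg : R -> R) a b : a < b ->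
  (forall x, a < x < b -> is_derive g x (dg x)) -> rcont g a -> continuous g b ->
  exists c, a < c < b /\ g b - g a = dg c * (b - a).
Proof.
  intros hab Hd Hr Hb.
  set (h := fun x => g (Rmax a x)).
  assert (Hloc : forall x, a < x -> locally x (fun t => g t = h t)).
  { intros x hx. apply locally_interval with (a := Finite a) (b := p_infty); simpl; auto.
    intros y hy _. unfold h. rewrite Rmax_right; lra. }
  assert (Hdh : forall x, a < x < b -> derivable_pt_lim h x (dg x)).
  { intros x hx. apply is_derive_Reals. apply is_derive_ext_loc with g.
    apply Hloc; lra. apply Hd; auto. }
  assert (pr1 : forall c, a < c < b -> derivable_pt h c).
  { intros c hc. exists (dg c). apply Hdh; auto. }
  assert (pr2 : forall c, a < c < b -> derivable_pt id c).
  { intros c hc. apply derivable_pt_id. }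
  assert (Hch : forall c, a <= c <= b -> continuity_pt h c).
  { intros c hc. apply continuity_pt_filterlim.
    destruct (Req_dec c a) as [->|hne].
    - apply cont_eps. intros eps he. destruct (Hr eps he) as [d [hd Hd']].
      exists d; split; auto. intros y hy. unfold h. rewrite (Rmax_left a a) by lra.
      destruct (Rle_dec y a).
      + rewrite Rmax_left by lra. rewrite Rminus_eq_0, Rabs_R0; auto.
      + rewrite Rmax_right by lra. apply Hd'. apply Rabs_def2 in hy. lra.
    - assert (hc' : a < c) by lra.
      assert (continuous g c).
      { destruct (Req_dec c b) as [->|hcb]. auto. apply (derive_cont g c (dg c)). apply Hd; lra. }
      apply (filterlim_ext_loc g h). apply Hloc; auto.
      unfold h. rewrite Rmax_right by lra. auto. }
  destruct (MVT h id a b pr1 pr2 hab Hch) as [c [P HP]].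
  { intros c hc. apply derivable_continuous_pt. apply derivable_pt_id. }
  exists c. split; auto.
  rewrite (derive_pt_eq_0 h c (dg c) (pr1 c P)) in HP by (apply Hdh; auto).
  rewrite (derive_pt_eq_0 id c 1 (pr2 c P)) in HP by apply derivable_pt_lim_id.
  unfold h, id in HP. rewrite (Rmax_left a a) in HP by lra. rewrite (Rmax_right a b) in HP by lra. lra.
Qed.

Open Scope R_scope.

Lemma contR_minus (f g : R -> R) x : continuous f x -> continuous g x -> continuous (fun y => f y - g y) x.
Proof. intros. apply (continuous_minus f g x); auto. Qed.
Lemma contR_plus (f g : R -> R) x : continuous f x -> continuous g x -> continuous (fun y => f y + g y) x.
Proof. intros. apply (continuous_plus f g x); auto. Qed.
Lemma contR_mult (f g : R -> R) x : continuous f x -> continuous g x -> continuous (fun y => f y * g y) x.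
Proof. intros. apply (continuous_mult f g x); auto. Qed.
Lemma contR_opp (f : R -> R) x : continuous f x -> continuous (fun y => - f y) x.
Proof. intros. apply (continuous_opp f x); auto. Qed.
Lemma contR_const (c x : R) : continuous (fun _ : R => c) x.
Proof. apply continuous_const. Qed.
Lemma contR_id (x : R) : continuous (fun y : R => y) x.
Proof. apply continuous_id. Qed.
Lemma contR_comp (f g : R -> R) x : continuous f x -> continuous g (f x) -> continuous (fun y => g (f y)) x.
Proof. intros. apply (continuous_comp f g x); auto. Qed.
Lemma contR_abs (f : R -> R) x : continuous f x -> continuous (fun y => Rabs (f y)) x.
Proof. intros. apply continuous_Rabs_comp; auto. Qed.
Lemma contR_ext (f g : R -> R) x : (forall y, f y = g y) -> continuous f x -> continuous g x.
Proof. intros H Hf. apply (filterlim_ext f g); auto. rewrite <- H. auto. Qed.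
Lemma contR_ext_loc (f g : R -> R) x : locally x (fun y => f y = g y) -> continuous f x -> continuous g x.
Proof. intros H Hf. apply (filterlim_ext_loc f g); auto.
  destruct H as [e He]. rewrite <- He; auto. apply ball_center. Qed.
Lemma contR_pow (f : R -> R) n x : continuous f x -> continuous (fun y => f y ^ n) x.
Proof. intros H. induction n; simpl. apply contR_const. apply contR_mult; auto. Qed.
Lemma contR_inv (f : R -> R) x : continuous f x -> f x <> 0 -> continuous (fun y => / f y) x.
Proof. intros H Hn. apply contR_comp; auto. apply continuity_pt_filterlim.
  apply continuity_pt_inv; auto. apply continuity_pt_id. Qed.

Lemma isdR_plus (f g : R -> R) (x a b : R) : is_derive f x a -> is_derive g x b -> is_derive (fun y => f y + g y) x (a + b).
Proof. intros. apply (is_derive_plus f g x a b); auto. Qed.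
Lemma isdR_minus (f g : R -> R) (x a b : R) : is_derive f x a -> is_derive g x b -> is_derive (fun y => f y - g y) x (a - b).
Proof. intros. apply (is_derive_minus f g x a b); auto. Qed.
Lemma isdR_mult (f g : R -> R) (x a b : R) : is_derive f x a -> is_derive g x b -> is_derive (fun y => f y * g y) x (a * g x + f x * b).
Proof. intros. apply (is_derive_mult f g x a b); auto. intros; apply Rmult_comm. Qed.
Lemma isdR_opp (f : R -> R) (x a : R) : is_derive f x a -> is_derive (fun y => - f y) x (- a).
Proof. intros. apply (is_derive_opp f x a); auto. Qed.
Lemma isdR_comp (f g : R -> R) (x a b : R) : is_derive g x a -> is_derive f (g x) b -> is_derive (fun y => f (g y)) x (b * a).
Proof. intros H1 H2. assert (H := is_derive_comp f g x b a H2 H1). rewrite Rmult_comm. exact H. Qed.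
Lemma isdR_const (c x : R) : is_derive (fun _ => c) x 0.
Proof. apply (is_derive_const c x). Qed.
Lemma isdR_id (x : R) : is_derive (fun y => y) x 1.
Proof. apply (is_derive_id x). Qed.
Lemma isdR_ext (f g : R -> R) (x a b : R) : (forall y, f y = g y) -> a = b -> is_derive f x a -> is_derive g x b.
Proof. intros H -> Hf. apply (is_derive_ext f g); auto. Qed.
Lemma isdR_ext_loc (f g : R -> R) (x a : R) : locally x (fun y => f y = g y) -> is_derive f x a -> is_derive g x a.
Proof. intros H Hf. apply (is_derive_ext_loc f g); auto. Qed.
Lemma isdR_eq (f : R -> R) (x a b : R) : a = b -> is_derive f x a -> is_derive f x b.
Proof. intros ->; auto. Qed.

Lemma loc_pos (x : R) : 0 < x -> locally x (fun y => 0 < y).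
Proof. intros h. apply locally_interval with (a := Finite 0) (b := p_infty); simpl; auto. Qed.
Lemma loc_neg (x : R) : x < 0 -> locally x (fun y => y < 0).
Proof. intros h. apply locally_interval with (a := m_infty) (b := Finite 0); simpl; auto. Qed.
Lemma loc_gt (x c : R) : c < x -> locally x (fun y => c < y).
Proof. intros h. apply locally_interval with (a := Finite c) (b := p_infty); simpl; auto. Qed.
Lemma loc_lt (x c : R) : x < c -> locally x (fun y => y < c).
Proof. intros h. apply locally_interval with (a := m_infty) (b := Finite c); simpl; auto. Qed.
Lemma loc_impl (x : R) (P Q : R -> Prop) : locally x P -> (forall y, P y -> Q y) -> locally x Q.
Proof. intros [e He] H. exists e. intros y hy. apply H, He, hy. Qed.

Lemma Rpower_gt0 x e : 0 < Rpower x e.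
Proof. unfold Rpower. apply exp_pos. Qed.

Lemma Rpower_le_l x y e : 0 <= e -> 0 < x -> x <= y -> Rpower x e <= Rpower y e.
Proof. intros. apply Rle_Rpower_l; auto. Qed.

Lemma Rpower_between x m M e : 0 < m -> m <= x <= M -> Rpower x e <= Rpower m e + Rpower M e.
Proof.
  intros hm [h1 h2]. unfold Rpower.
  assert (ln m <= ln x) by (destruct (Req_dec m x) as [->|]; [lra| left; apply ln_increasing; lra]).
  assert (ln x <= ln M) by (destruct (Req_dec x M) as [->|]; [lra| left; apply ln_increasing; lra]).
  assert (0 < exp (e * ln m)) by apply exp_pos. assert (0 < exp (e * ln M)) by apply exp_pos.
  destruct (Rle_dec 0 e).
  - assert (exp (e * ln x) <= exp (e * ln M)).
    { destruct (Req_dec (e * ln x) (e * ln M)) as [E|]. rewrite E; lra. left; apply exp_increasing. nra. }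
    lra.
  - assert (exp (e * ln x) <= exp (e * ln m)).
    { destruct (Req_dec (e * ln x) (e * ln m)) as [E|]. rewrite E; lra. left; apply exp_increasing. nra. }
    lra.
Qed.

Lemma Rpower_small e : 0 < e -> forall eps, 0 < eps -> exists d, 0 < d /\ forall x, 0 < x < d -> Rpower x e < eps.
Proof.
  intros he eps heps. exists (Rpower eps (/ e)). split. apply Rpower_gt0.
  intros x [hx1 hx2].
  assert (E : Rpower (Rpower eps (/ e)) e = eps).
  { rewrite Rpower_mult. replace (/ e * e) with 1 by (field; lra). apply Rpower_1; auto. }
  apply Rlt_le_trans with (Rpower (Rpower eps (/ e)) e). apply Rlt_Rpower_l; auto. lra.
Qed.

Lemma Rpower_ge_self x e : 1 <= e -> 1 <= x -> x <= Rpower x e.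
Proof.
  intros he hx. rewrite <- (Rpower_1 x) at 1 by lra. destruct (Req_dec x 1) as [->|].
  unfold Rpower. rewrite ln_1. rewrite !Rmult_0_r. lra.
  apply Rle_Rpower; lra.
Qed.

Lemma phi_pos q s : 0 < s -> phi_p q s = Rpower s (q - 1).
Proof. intros h. unfold phi_p. destruct (Rlt_dec 0 s); [auto | lra]. Qed.
Lemma phi_neg q s : s < 0 -> phi_p q s = - Rpower (- s) (q - 1).
Proof. intros h. unfold phi_p. destruct (Rlt_dec 0 s); [lra|]. destruct (Rlt_dec s 0); [auto|lra]. Qed.
Lemma phi_zero q : phi_p q 0 = 0.
Proof. unfold phi_p. destruct (Rlt_dec 0 0); [lra|]. destruct (Rlt_dec 0 0); [lra|auto]. Qed.

Lemma phi_sign_pos q s : 0 < s -> 0 < phi_p q s.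
Proof. intros h. rewrite phi_pos; auto. apply Rpower_gt0. Qed.
Lemma phi_sign_neg q s : s < 0 -> phi_p q s < 0.
Proof. intros h. rewrite phi_neg; auto. assert (0 < Rpower (-s) (q-1)) by apply Rpower_gt0. lra. Qed.
Lemma phi_mul_nonneg q s : 0 <= s * phi_p q s.
Proof.
  destruct (Rtotal_order s 0) as [h|[h|h]].
  - assert (phi_p q s < 0) by (apply phi_sign_neg; auto). nra.
  - subst. lra.
  - assert (0 < phi_p q s) by (apply phi_sign_pos; auto). nra.
Qed.

Definition apow (x e : R) : R := if Rlt_dec 0 x then Rpower x e else 0.

Lemma apow_pos x e : 0 < x -> apow x e = Rpower x e.
Proof. intros h. unfold apow. destruct (Rlt_dec 0 x); [auto|lra]. Qed.
Lemma apow_zero e : apow 0 e = 0.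
Proof. unfold apow. destruct (Rlt_dec 0 0); [lra|auto]. Qed.
Lemma apow_ge0 x e : 0 <= apow x e.
Proof. unfold apow. destruct (Rlt_dec 0 x). left; apply Rpower_gt0. lra. Qed.

Lemma phi_abs q s : Rabs (phi_p q s) = apow (Rabs s) (q - 1).
Proof.
  destruct (Rtotal_order s 0) as [h|[h|h]].
  - rewrite phi_neg, apow_pos by (auto; apply Rabs_pos_lt; lra).
    rewrite Rabs_Ropp, Rabs_right by (left; apply Rpower_gt0). rewrite Rabs_left; auto.
  - subst. rewrite phi_zero, Rabs_R0, apow_zero. auto.
  - rewrite phi_pos, apow_pos by (auto; apply Rabs_pos_lt; lra).
    rewrite Rabs_right by (left; apply Rpower_gt0). rewrite Rabs_right; lra.
Qed.

Lemma apow_small e : 0 < e -> forall eps, 0 < eps -> exists d, 0 < d /\ forall x, Rabs x < d -> apow (Rabs x) e < eps.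
Proof.
  intros he eps heps. destruct (Rpower_small e he eps heps) as [d [hd Hd]]. exists d; split; auto.
  intros x hx. destruct (Req_dec x 0) as [->|hn]. rewrite Rabs_R0, apow_zero; auto.
  rewrite apow_pos by (apply Rabs_pos_lt; auto). apply Hd. split; auto. apply Rabs_pos_lt; auto.
Qed.

Lemma Rpower_cont e x : 0 < x -> continuous (fun y => Rpower y e) x.
Proof.
  intros hx. apply (derive_cont _ _ (e * Rpower x (e - 1))). apply is_derive_Reals.
  apply derivable_pt_lim_power; auto.
Qed.

Lemma phi_deriv q s : s <> 0 -> is_derive (phi_p q) s ((q - 1) * Rpower (Rabs s) (q - 2)).
Proof.
  intros hs. destruct (Rtotal_order s 0) as [h|[h|h]]; [|lra|].
  - apply isdR_ext_loc with (fun y => - Rpower (- y) (q - 1)).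
    { apply (loc_impl s (fun y => y < 0)). apply loc_neg; auto. intros y hy. rewrite phi_neg; auto. }
    rewrite Rabs_left by auto.
    apply isdR_eq with (- ((q - 1) * Rpower (- s) (q - 1 - 1) * (-1))).
    { replace (q - 1 - 1) with (q - 2) by ring. ring. }
    apply isdR_opp. apply (isdR_comp (fun y => Rpower y (q-1)) (fun y => - y)).
    apply isdR_eq with (- 1). ring. apply isdR_opp, isdR_id.
    apply is_derive_Reals. apply derivable_pt_lim_power. lra.
  - apply isdR_ext_loc with (fun y => Rpower y (q - 1)).
    { apply (loc_impl s (fun y => 0 < y)). apply loc_pos; auto. intros y hy. rewrite phi_pos; auto. }
    rewrite Rabs_right by lra.
    apply isdR_eq with ((q - 1) * Rpower s (q - 1 - 1)).
    { replace (q - 1 - 1) with (q - 2) by ring. ring. }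
    apply is_derive_Reals. apply derivable_pt_lim_power. lra.
Qed.

Lemma phi_cont q s : 1 < q -> continuous (phi_p q) s.
Proof.
  intros hq. destruct (Req_dec s 0) as [->|hs].
  - apply cont_eps. intros eps he. destruct (apow_small (q - 1) ltac:(lra) eps he) as [d [hd Hd]].
    exists d; split; auto. intros y hy. rewrite phi_zero, Rminus_0_r, phi_abs. apply Hd.
    rewrite Rminus_0_r in hy. auto.
  - apply (derive_cont _ _ _ (phi_deriv q s hs)).
Qed.

Lemma phi_lip q a b m M : 1 < q -> 0 < m -> m <= Rabs a <= M -> m <= Rabs b <= M -> 0 < a * b ->
  Rabs (phi_p q a - phi_p q b) <= (q - 1) * (Rpower m (q - 2) + Rpower M (q - 2)) * Rabs (a - b).
Proof.
  intros hq hm ha hb hab.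
  assert (Hn : forall c, Rmin b a <= c <= Rmax b a -> c <> 0).
  { intros c hc. unfold Rmin, Rmax in hc. destruct (Rle_dec b a);
    destruct (Rlt_dec 0 a); [| |destruct (Rlt_dec 0 a)|];
    try (assert (0 < b) by nra); try (assert (b < 0) by nra); intro; subst; try lra;
    destruct (Req_dec a 0); subst; lra. }
  destruct (MVT_gen (phi_p q) b a (fun c => (q - 1) * Rpower (Rabs c) (q - 2))) as [c [hc Hc]].
  { intros x hx. apply phi_deriv. apply Hn. lra. }
  { intros x hx. apply continuity_pt_filterlim. apply phi_cont; auto. }
  rewrite Hc. rewrite Rabs_mult. rewrite Rabs_minus_sym.
  apply Rmult_le_compat_r. apply Rabs_pos.
  rewrite Rabs_right by (apply Rle_ge, Rmult_le_pos; [lra| left; apply Rpower_gt0]).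
  apply Rmult_le_compat_l. lra. apply Rpower_between; auto.
  assert (c <> 0) by (apply Hn; auto).
  unfold Rmin, Rmax in hc. destruct (Rle_dec b a).
  - destruct (Rlt_dec 0 b).
    + rewrite Rabs_right by lra. rewrite Rabs_right in ha, hb by nra. lra.
    + assert (a < 0) by (destruct (Req_dec b 0); [subst; nra| nra]).
      rewrite Rabs_left by lra. rewrite Rabs_left in ha by lra. rewrite Rabs_left in hb by (destruct (Req_dec b 0); [subst; nra|nra]). lra.
  - destruct (Rlt_dec 0 a).
    + rewrite Rabs_right by lra. rewrite Rabs_right in ha, hb by nra. lra.
    + assert (b < 0) by (destruct (Req_dec a 0); [subst; nra| nra]).
      rewrite Rabs_left by lra. rewrite Rabs_left in hb by lra. rewrite Rabs_left in ha by (destruct (Req_dec a 0); [subst; nra|nra]). lra.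
Qed.

Lemma apow_deriv q w : 1 < q -> is_derive (fun y => apow (Rabs y) q) w (q * phi_p q w).
Proof.
  intros hq. destruct (Rtotal_order w 0) as [h|[h|h]].
  - apply isdR_ext_loc with (fun y => Rpower (- y) q).
    { apply (loc_impl w (fun y => y < 0)). apply loc_neg; auto. intros y hy.
      rewrite apow_pos by (apply Rabs_pos_lt; lra). rewrite Rabs_left; auto. }
    rewrite phi_neg by auto.
    apply isdR_eq with (q * Rpower (- w) (q - 1) * (-1)). ring.
    apply (isdR_comp (fun y => Rpower y q) (fun y => - y)).
    apply isdR_eq with (- 1). ring. apply isdR_opp, isdR_id.
    apply is_derive_Reals. apply derivable_pt_lim_power. lra.
  - subst. rewrite phi_zero, Rmult_0_r. apply is_derive_Reals.
    intros eps he. destruct (apow_small (q - 1) ltac:(lra) eps he) as [d [hd Hd]].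
    exists (mkposreal d hd). intros h hn hh. simpl in hh.
    rewrite Rplus_0_l, Rabs_R0, apow_zero, Rminus_0_r, Rminus_0_r.
    rewrite apow_pos by (apply Rabs_pos_lt; auto).
    assert (E : Rpower (Rabs h) q = Rabs h * Rpower (Rabs h) (q - 1)).
    { replace q with (1 + (q - 1)) at 1 by ring. rewrite Rpower_plus, Rpower_1; auto. apply Rabs_pos_lt; auto. }
    rewrite E. unfold Rdiv. rewrite Rabs_mult, Rabs_mult, Rabs_inv. rewrite Rabs_Rabsolu.
    rewrite (Rabs_right (Rpower _ _)) by (left; apply Rpower_gt0).
    replace (Rabs h * Rpower (Rabs h) (q - 1) * / Rabs h) with (Rpower (Rabs h) (q - 1))
      by (field; apply Rabs_no_R0; auto).
    specialize (Hd h). rewrite apow_pos in Hd by (apply Rabs_pos_lt; auto). apply Hd.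
    auto.
  - apply isdR_ext_loc with (fun y => Rpower y q).
    { apply (loc_impl w (fun y => 0 < y)). apply loc_pos; auto. intros y hy.
      rewrite apow_pos by (apply Rabs_pos_lt; lra). rewrite Rabs_right; lra. }
    rewrite phi_pos by auto. apply is_derive_Reals. apply derivable_pt_lim_power. lra.
Qed.

Open Scope R_scope.

Lemma rcont_of_deriv (g : R -> R) (a l : R) : is_derive g a l -> rcont g a.
Proof. intros H. apply cont_rcont. apply (derive_cont g a l H). Qed.

Lemma rcont_comp (u G : R -> R) a : rcont u a -> continuous G (u a) -> rcont (fun x => G (u x)) a.
Proof.
  intros Hu HG eps he. destruct (eps_cont G (u a) HG eps he) as [d1 [hd1 H1]].
  destruct (Hu d1 hd1) as [d2 [hd2 H2]]. exists d2; split; auto.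
Qed.

Lemma rcont_minus (f g : R -> R) a : rcont f a -> rcont g a -> rcont (fun x => f x - g x) a.
Proof.
  intros Hf Hg eps he. destruct (Hf (eps/2) ltac:(lra)) as [d1 [hd1 H1]].
  destruct (Hg (eps/2) ltac:(lra)) as [d2 [hd2 H2]]. exists (Rmin d1 d2); split.
  apply Rmin_pos; auto. intros x hx. assert (hm1 := Rmin_l d1 d2). assert (hm2 := Rmin_r d1 d2).
  specialize (H1 x ltac:(lra)). specialize (H2 x ltac:(lra)).
  replace (f x - g x - (f a - g a)) with ((f x - f a) - (g x - g a)) by ring.
  eapply Rle_lt_trans. apply Rabs_triang. rewrite Rabs_Ropp. lra.
Qed.

Lemma rcont_abs (f : R -> R) a : rcont f a -> rcont (fun x => Rabs (f x)) a.
Proof.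
  intros Hf eps he. destruct (Hf eps he) as [d [hd H]]. exists d; split; auto.
  intros x hx. eapply Rle_lt_trans. apply Rabs_triang_inv2. apply H; auto.
Qed.

Lemma max_on (g : R -> R) a b : a <= b -> rcont g a -> (forall x, a < x <= b -> continuous g x) ->
  exists r, a <= r <= b /\ forall x, a <= x <= b -> g x <= g r.
Proof.
  intros hab Hr Hc. set (h := fun x => g (Rmax a x)).
  destruct (continuity_ab_maj h a b hab) as [r [Hr1 Hr2]].
  { intros c hc. apply continuity_pt_filterlim.
    destruct (Req_dec c a) as [->|hne].
    - apply cont_eps. intros eps he. destruct (Hr eps he) as [d [hd Hd']].
      exists d; split; auto. intros y hy. unfold h. rewrite (Rmax_left a a) by lra.
      destruct (Rle_dec y a).
      + rewrite Rmax_left by lra. rewrite Rminus_eq_0, Rabs_R0; auto.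
      + rewrite Rmax_right by lra. apply Hd'. apply Rabs_def2 in hy. lra.
    - apply contR_ext_loc with g.
      apply (loc_impl c (fun y => a < y)). apply loc_gt; lra. intros y hy. unfold h. rewrite Rmax_right; lra.
      apply Hc. lra. }
  exists r. split; auto. intros x hx. specialize (Hr1 x hx). unfold h in Hr1.
  rewrite !Rmax_right in Hr1 by lra. auto.
Qed.

Lemma deriv_bound (g dg : R -> R) a b K : a <= b ->
  (forall x, a < x < b -> is_derive g x (dg x)) -> rcont g a -> continuous g b ->
  (forall x, a < x < b -> Rabs (dg x) <= K) -> Rabs (g b - g a) <= K * (b - a).
Proof.
  intros hab Hd Hr Hb HK. destruct (Req_dec a b) as [->|hne].
  rewrite !Rminus_eq_0, Rabs_R0, Rmult_0_r. lra.
  destruct (mvt_right g dg a b ltac:(lra) Hd Hr Hb) as [c [hc Hc]].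
  rewrite Hc, Rabs_mult, (Rabs_right (b - a)) by lra. apply Rmult_le_compat_r. lra. apply HK; auto.
Qed.

Lemma deriv_nonneg (g dg : R -> R) a b : a <= b ->
  (forall x, a < x < b -> is_derive g x (dg x)) -> rcont g a -> continuous g b ->
  (forall x, a < x < b -> 0 <= dg x) -> g a <= g b.
Proof.
  intros hab Hd Hr Hb HK. destruct (Req_dec a b) as [->|hne]. lra.
  destruct (mvt_right g dg a b ltac:(lra) Hd Hr Hb) as [c [hc Hc]].
  assert (0 <= dg c) by (apply HK; auto). nra.
Qed.

Lemma right_deriv (g h : R -> R) a b : a < b ->
  (forall x, a < x < b -> is_derive g x (h x)) -> rcont g a -> rcont h a ->
  filterlim (fun t => (g (a + t) - g a) / t) (at_right 0) (locally (h a)).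
Proof.
  intros hab Hd Hg Hh. apply (proj2 (filterlim_locally _ (h a))). intros [e he].
  destruct (Hh e he) as [d [hd Hd']].
  exists (mkposreal (Rmin d (b - a)) ltac:(apply Rmin_pos; lra)). intros t Ht Htp.
  assert (Ht' : Rabs (t - 0) < Rmin d (b - a)) by exact Ht.
  rewrite Rminus_0_r, Rabs_right in Ht' by lra.
  assert (hm1 := Rmin_l d (b - a)). assert (hm2 := Rmin_r d (b - a)).
  destruct (mvt_right g h a (a + t) ltac:(lra)) as [c [hc Hc]].
  { intros x hx. apply Hd. lra. } auto.
  { apply (derive_cont g _ (h (a + t))). apply Hd. lra. }
  apply ballR. simpl. replace ((g (a + t) - g a) / t) with (h c).
  apply Hd'. lra. rewrite Hc. field. lra.
Qed.

Definition gprop (g : R -> R) : Prop :=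
  (forall s, continuous g s) /\ (forall s, s <= 0 -> g s = 0) /\ g 1 = 0 /\
  (forall s, 0 < s < 1 -> g s < 0) /\ (forall s, 1 < s -> 0 < g s).

Definition Gint (g : R -> R) (s : R) : R := RInt g 0 s.

Lemma G_deriv (g : R -> R) (s : R) : (forall x, continuous g x) -> is_derive (Gint g) s (g s).
Proof.
  intros Hc. apply (is_derive_RInt g (Gint g) 0 s).
  - exists (mkposreal 1 Rlt_0_1). intros y _. unfold Gint. apply (RInt_correct (V := R_CompleteNormedModule)).
    apply (ex_RInt_continuous (V := R_CompleteNormedModule)). intros; apply Hc.
  - apply Hc.
Qed.

Lemma G_cont (g : R -> R) (s : R) : (forall x, continuous g x) -> continuous (Gint g) s.
Proof. intros Hc. apply (derive_cont _ _ _ (G_deriv g s Hc)). Qed.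

Lemma G_zero (g : R -> R) : Gint g 0 = 0.
Proof. unfold Gint. rewrite RInt_point. reflexivity. Qed.

Lemma G_mvt (g : R -> R) (x y : R) : (forall s, continuous g s) -> x < y -> exists c, x < c < y /\ Gint g y - Gint g x = g c * (y - x).
Proof.
  intros Hc hxy. apply mvt_right; auto. intros; apply G_deriv; auto.
  apply cont_rcont, G_cont; auto. apply G_cont; auto.
Qed.

Lemma G_neg (g : R -> R) (s : R) : gprop g -> s <= 0 -> Gint g s = 0.
Proof.
  intros [Hc [H0 _]] hs. destruct (Req_dec s 0) as [->|hne]. apply G_zero.
  destruct (G_mvt g s 0 Hc ltac:(lra)) as [c [hc Hc']]. rewrite H0 in Hc' by lra. rewrite G_zero in Hc'. lra.
Qed.

Lemma G_dec (g : R -> R) (x y : R) : gprop g -> 0 <= x < y -> y <= 1 -> Gint g y < Gint g x.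
Proof.
  intros [Hc [H0 [H1 [Hneg Hpos]]]] hx hy. destruct (G_mvt g x y Hc ltac:(lra)) as [c [hc Hc']].
  assert (g c < 0) by (apply Hneg; lra). nra.
Qed.

Lemma G_inc (g : R -> R) (x y : R) : gprop g -> 1 <= x < y -> Gint g x < Gint g y.
Proof.
  intros [Hc [H0 [H1 [Hneg Hpos]]]] hx. destruct (G_mvt g x y Hc ltac:(lra)) as [c [hc Hc']].
  assert (0 < g c) by (apply Hpos; lra). nra.
Qed.

Lemma G_one_neg (g : R -> R) : gprop g -> Gint g 1 < 0.
Proof. intros Hg. rewrite <- (G_zero g). apply G_dec; auto; lra. Qed.

Lemma G_min (g : R -> R) (s : R) : gprop g -> s <> 1 -> Gint g 1 < Gint g s.
Proof.
  intros Hg hs. destruct (Rle_dec s 0).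
  - rewrite (G_neg g s Hg r). apply G_one_neg; auto.
  - destruct (Rlt_dec s 1). apply G_dec; auto; lra. apply G_inc; auto; lra.
Qed.

Lemma G_ge_min (g : R -> R) (s : R) : gprop g -> Gint g 1 <= Gint g s.
Proof. intros Hg. destruct (Req_dec s 1) as [->|hs]. lra. left; apply G_min; auto. Qed.

Lemma G_nonpos (g : R -> R) (s : R) : gprop g -> 0 <= s <= 1 -> Gint g s <= 0.
Proof.
  intros Hg hs. destruct (Req_dec s 0) as [->|hne]. rewrite G_zero; lra.
  left. rewrite <- (G_zero g). apply G_dec; auto; lra.
Qed.

Lemma G_lt0 (g : R -> R) (s : R) : gprop g -> 0 < s <= 1 -> Gint g s < 0.
Proof. intros Hg hs. rewrite <- (G_zero g). apply G_dec; auto; lra. Qed.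

Definition is_sol_g (p : R) (N : nat) (g : R -> R) (R1 d : R) (u v : R -> R) (rs : R) : Prop :=
  R1 < rs /\
  C1_on_Ico u R1 rs /\ C1_on_Ico v R1 rs /\
  u R1 = 1 - d /\ v R1 = 0 /\
  (forall r, R1 < r < rs -> 0 < r ->
     is_derive u r (phi_p_inv p (v r / r ^ (N - 1))) /\
     is_derive v r (- (r ^ (N - 1) * g (u r)))).

Lemma is_solution_g p N f R1 d u v rs :
  is_solution p N f R1 d u v rs <-> is_sol_g p N (fhat f) R1 d u v rs.
Proof. reflexivity. Qed.

Lemma C1_rcont (g : R -> R) (a b : R) : C1_on_Ico g a b -> rcont g a.
Proof.
  intros [g' [_ [Hq _]]]. apply filterlim_rcont.
  apply (proj2 (filterlim_locally _ (g a))). intros [e he].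
  destruct (proj1 (filterlim_locally _ (g' a)) Hq (mkposreal 1 Rlt_0_1)) as [[d1 hd1] H1].
  set (K := Rabs (g' a) + 1).
  assert (hK : 0 < K) by (unfold K; assert (0 <= Rabs (g' a)) by apply Rabs_pos; lra).
  exists (mkposreal (Rmin d1 (e / K)) ltac:(apply Rmin_pos; [auto| apply Rdiv_lt_0_compat; lra])).
  intros y Hy Hay. apply ballR. simpl in *.
  assert (Hy' : Rabs (y - a) < Rmin d1 (e / K)) by exact Hy.
  rewrite Rabs_right in Hy' by lra.
  assert (hm1 := Rmin_l d1 (e / K)). assert (hm2 := Rmin_r d1 (e / K)).
  specialize (H1 (y - a)). 
  assert (Hb : ball 0 d1 (y - a)) by (apply ballR; rewrite Rminus_0_r, Rabs_right; lra).
  specialize (H1 Hb ltac:(lra)).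
  replace (a + (y - a)) with y in H1 by ring.
  assert (H1' : Rabs ((g y - g a) / (y - a) - g' a) < 1) by exact H1. clear H1. rename H1' into H1.
  assert (Hq' : Rabs ((g y - g a) / (y - a)) <= K).
  { unfold K. assert (H2 := Rabs_triang_inv ((g y - g a) / (y - a)) (g' a)). lra. }
  unfold Rdiv in Hq'. rewrite Rabs_mult, Rabs_inv, (Rabs_right (y - a)) in Hq' by lra.
  assert (Rabs (g y - g a) <= K * (y - a)).
  { apply (Rmult_le_reg_r (/ (y - a))). apply Rinv_0_lt_compat; lra.
    rewrite Rmult_assoc, Rinv_r by lra. lra. }
  assert (K * (y - a) < e).
  { apply Rlt_le_trans with (K * (e / K)). apply Rmult_lt_compat_l; lra. right; field; lra. }
  lra.
Qed.

Section Sol.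
Variables (p : R) (N : nat) (g : R -> R) (R1 d : R) (u v : R -> R) (rs : R).
Hypothesis hp : 1 < p.
Hypothesis hR1 : 0 <= R1.
Hypothesis Hs : is_sol_g p N g R1 d u v rs.

Lemma sol_du r : R1 < r < rs -> is_derive u r (phi_p_inv p (v r / r ^ (N - 1))).
Proof. intros h. destruct Hs as [_ [_ [_ [_ [_ H]]]]]. apply H; auto. lra. Qed.
Lemma sol_dv r : R1 < r < rs -> is_derive v r (- (r ^ (N - 1) * g (u r))).
Proof. intros h. destruct Hs as [_ [_ [_ [_ [_ H]]]]]. apply H; auto. lra. Qed.
Lemma sol_u0 : u R1 = 1 - d.
Proof. destruct Hs as [_ [_ [_ [H _]]]]. auto. Qed.
Lemma sol_v0 : v R1 = 0.
Proof. destruct Hs as [_ [_ [_ [_ [H _]]]]]. auto. Qed.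
Lemma sol_rs : R1 < rs.
Proof. destruct Hs as [H _]. auto. Qed.
Lemma sol_cu r : R1 < r < rs -> continuous u r.
Proof. intros h. apply (derive_cont _ _ _ (sol_du r h)). Qed.
Lemma sol_cv r : R1 < r < rs -> continuous v r.
Proof. intros h. apply (derive_cont _ _ _ (sol_dv r h)). Qed.
Lemma sol_ru r : R1 <= r < rs -> rcont u r.
Proof.
  intros h. destruct (Req_dec r R1) as [->|hne].
  destruct Hs as [_ [H _]]. apply (C1_rcont _ _ _ H).
  apply cont_rcont, sol_cu; lra.
Qed.
Lemma sol_rv r : R1 <= r < rs -> rcont v r.
Proof.
  intros h. destruct (Req_dec r R1) as [->|hne].
  destruct Hs as [_ [_ [H _]]]. apply (C1_rcont _ _ _ H).
  apply cont_rcont, sol_cv; lra.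
Qed.
End Sol.

Open Scope R_scope.

Lemma conj_gt1 p : 1 < p -> 1 < conj_exp p.
Proof. intros hp. unfold conj_exp. apply (Rmult_lt_reg_r (p - 1)). lra. field_simplify; lra. Qed.

Lemma conj_m1 p : 1 < p -> conj_exp p - 1 = / (p - 1).
Proof. intros hp. unfold conj_exp. field. lra. Qed.

Lemma conj_prod p : 1 < p -> (p - 1) / p * conj_exp p = 1.
Proof. intros hp. unfold conj_exp. field. lra. Qed.

Lemma pow_pos_lt (r : R) n : 0 < r -> 0 < r ^ n.
Proof. intros. apply pow_lt; auto. Qed.

Lemma pow_le_mono (a b : R) n : 0 <= a <= b -> a ^ n <= b ^ n.
Proof. intros [h1 h2]. apply pow_incr; auto. Qed.

Lemma pow_diff_ge (r0 s : R) (N : nat) : 0 <= r0 <= s -> (1 <= N)%nat ->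
  s ^ (N - 1) * (s - r0) <= s ^ N - r0 ^ N.
Proof.
  intros [h1 h2] hN. destruct N as [|M]. lia. simpl. rewrite Nat.sub_0_r.
  assert (r0 ^ M <= s ^ M) by (apply pow_incr; lra).
  assert (0 <= r0 ^ M) by (apply pow_le; lra). nra.
Qed.

Section Energy.
Variables (p : R) (N : nat) (g : R -> R) (R1 d : R) (u v : R -> R) (rs : R).
Hypothesis hp : 1 < p.
Hypothesis hR1 : 0 <= R1.
Hypothesis Hg : gprop g.
Hypothesis Hs : is_sol_g p N g R1 d u v rs.

Let pp := conj_exp p.
Definition wfun (r : R) := v r / r ^ (N - 1).
Definition En (r : R) := (p - 1) / p * apow (Rabs (v r / r ^ (N - 1))) (conj_exp p) + Gint g (u r).
Definition Edot (r : R) := - (phi_p (conj_exp p) (v r / r ^ (N - 1)) * v r * (INR (N - 1) * r ^ Init.Nat.pred (N - 1)) / (r ^ (N - 1)) ^ 2).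

Lemma gcont : forall s, continuous g s.
Proof. destruct Hg as [H _]. auto. Qed.

Lemma En_deriv r : R1 < r < rs -> is_derive En r (Edot r).
Proof.
  intros hr. assert (r0 : 0 < r) by lra.
  assert (hX : 0 < r ^ (N - 1)) by (apply pow_lt; auto).
  assert (Hdw : is_derive (fun y => v y / y ^ (N - 1)) r
     ((- (r ^ (N - 1) * g (u r)) * r ^ (N - 1) - v r * (INR (N - 1) * 1 * r ^ Init.Nat.pred (N - 1))) / (r ^ (N - 1)) ^ 2)).
  { apply (is_derive_div v (fun y => y ^ (N - 1))). apply (sol_dv p N g R1 d u v rs); auto.
    apply (is_derive_pow (fun y => y)). apply isdR_id. lra. }
  unfold En, Edot.
  assert (Hpp := conj_gt1 p hp).
  apply isdR_eq with ((p - 1) / p * ((conj_exp p * phi_p (conj_exp p) (v r / r ^ (N - 1))) *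
     ((- (r ^ (N - 1) * g (u r)) * r ^ (N - 1) - v r * (INR (N - 1) * 1 * r ^ Init.Nat.pred (N - 1))) / (r ^ (N - 1)) ^ 2))
     + g (u r) * phi_p_inv p (v r / r ^ (N - 1))).
  - unfold phi_p_inv. set (P := phi_p (conj_exp p) (v r / r ^ (N - 1))).
    replace ((p - 1) / p * (conj_exp p * P * ((- (r ^ (N - 1) * g (u r)) * r ^ (N - 1) -
      v r * (INR (N - 1) * 1 * r ^ Init.Nat.pred (N - 1))) / (r ^ (N - 1)) ^ 2)))
    with (((p - 1) / p * conj_exp p) * (P * ((- (r ^ (N - 1) * g (u r)) * r ^ (N - 1) -
      v r * (INR (N - 1) * 1 * r ^ Init.Nat.pred (N - 1))) / (r ^ (N - 1)) ^ 2))) by ring.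
    rewrite conj_prod by auto. field. lra.
  - apply isdR_plus.
    + apply (is_derive_scal (fun y => apow (Rabs (v y / y ^ (N - 1))) (conj_exp p))).
      apply (isdR_comp (fun w => apow (Rabs w) (conj_exp p)) (fun y => v y / y ^ (N - 1))); auto.
      apply isdR_eq with (conj_exp p * phi_p (conj_exp p) (v r / r ^ (N - 1))). ring.
      apply apow_deriv; auto.
    + apply (isdR_comp (Gint g) u). apply (sol_du p N g R1 d u v rs); auto.
      apply G_deriv. apply gcont.
Qed.

Lemma Edot_nonpos r : 0 < r -> Edot r <= 0.
Proof.
  intros hr. unfold Edot. assert (hX : 0 < r ^ (N - 1)) by (apply pow_lt; auto).
  set (w := v r / r ^ (N - 1)).
  assert (Ev : v r = w * r ^ (N - 1)) by (unfold w; field; lra).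
  rewrite Ev. assert (H1 := phi_mul_nonneg (conj_exp p) w).
  assert (0 <= INR (N - 1)) by apply pos_INR.
  assert (0 <= r ^ Init.Nat.pred (N - 1)) by (apply pow_le; lra).
  assert (0 < (r ^ (N - 1)) ^ 2) by (apply pow_lt; auto).
  apply Ropp_le_cancel. rewrite Ropp_involutive, Ropp_0.
  unfold Rdiv. apply Rmult_le_pos; [|left; apply Rinv_0_lt_compat; auto].
  replace (phi_p (conj_exp p) w * (w * r ^ (N - 1)) * (INR (N - 1) * r ^ Init.Nat.pred (N - 1)))
    with ((w * phi_p (conj_exp p) w) * r ^ (N - 1) * (INR (N - 1) * r ^ Init.Nat.pred (N - 1))) by ring.
  apply Rmult_le_pos; [apply Rmult_le_pos|]; nra.
Qed.

Lemma v_incr_bound r0 x A : R1 <= r0 < x -> x < rs ->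
  (forall c, r0 < c < x -> Rabs (g (u c)) <= A) -> Rabs (v x - v r0) <= A * x ^ (N - 1) * (x - r0).
Proof.
  intros h1 h2 HA. replace (A * x ^ (N - 1) * (x - r0)) with ((A * x ^ (N - 1)) * (x - r0)) by ring.
  apply (deriv_bound v (fun c => - (c ^ (N - 1) * g (u c)))). lra.
  intros c hc. apply (sol_dv p N g R1 d u v rs); auto. lra.
  apply (sol_rv p N g R1 d u v rs); auto. lra.
  apply (sol_cv p N g R1 d u v rs); auto. lra.
  intros c hc. rewrite Rabs_Ropp, Rabs_mult, Rabs_right by (apply Rle_ge, pow_le; lra).
  assert (c ^ (N - 1) <= x ^ (N - 1)) by (apply pow_incr; lra).
  assert (0 <= Rabs (g (u c))) by apply Rabs_pos. assert (0 <= c ^ (N - 1)) by (apply pow_le; lra).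
  specialize (HA c hc). rewrite Rmult_comm. apply Rmult_le_compat; auto; lra.
Qed.

Lemma gu_local r0 : R1 <= r0 < rs -> exists dl A, 0 < dl /\ 0 <= A /\ r0 + dl < rs /\
  forall c, r0 <= c < r0 + dl -> Rabs (g (u c)) <= A.
Proof.
  intros h. destruct (eps_cont g (u r0) (gcont (u r0)) 1 Rlt_0_1) as [e [he He]].
  destruct (sol_ru p N g R1 d u v rs hR1 Hs r0 h e he) as [e2 [he2 He2]].
  exists (Rmin e2 ((rs - r0)/2)), (Rabs (g (u r0)) + 1). split. apply Rmin_pos; lra.
  split. assert (0 <= Rabs (g (u r0))) by apply Rabs_pos. lra.
  split. assert (Rmin e2 ((rs - r0)/2) <= (rs - r0)/2) by apply Rmin_r. lra.
  intros c hc. assert (Rmin e2 ((rs - r0)/2) <= e2) by apply Rmin_l.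
  specialize (He (u c) (He2 c ltac:(lra))). assert (H3 := Rabs_triang_inv (g (u c)) (g (u r0))). lra.
Qed.

Lemma w_small_R1 : forall eps, 0 < eps -> exists dl, 0 < dl /\ forall x, R1 < x < R1 + dl -> Rabs (v x / x ^ (N - 1)) < eps.
Proof.
  intros eps he. destruct (gu_local R1) as [dl [A [hdl [hA [hdr HA]]]]]. split; [lra| apply (sol_rs p N g R1 d u v rs Hs)].
  exists (Rmin dl (eps / (A + 1))). split. apply Rmin_pos; auto. apply Rdiv_lt_0_compat; lra.
  intros x hx. assert (hm1 := Rmin_l dl (eps / (A + 1))). assert (hm2 := Rmin_r dl (eps / (A + 1))).
  assert (H := v_incr_bound R1 x A ltac:(lra) ltac:(lra) ltac:(intros; apply HA; lra)).
  rewrite (sol_v0 p N g R1 d u v rs Hs), Rminus_0_r in H.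
  assert (hX : 0 < x ^ (N - 1)) by (apply pow_lt; lra).
  unfold Rdiv. rewrite Rabs_mult, Rabs_inv, (Rabs_right (x ^ (N - 1))) by lra.
  apply (Rmult_lt_reg_r (x ^ (N - 1))); auto. rewrite Rmult_assoc, Rinv_l by lra. rewrite Rmult_1_r.
  apply Rle_lt_trans with (A * x ^ (N - 1) * (x - R1)); auto.
  assert (x - R1 < eps / (A + 1)) by lra.
  assert (A * (x - R1) < eps).
  { apply Rle_lt_trans with ((A + 1) * (x - R1)). nra.
    replace eps with ((A + 1) * (eps / (A + 1))) by (field; lra). apply Rmult_lt_compat_l; lra. }
  nra.
Qed.

Lemma En_R1 : En R1 = Gint g (1 - d).
Proof.
  unfold En. rewrite (sol_v0 p N g R1 d u v rs Hs), (sol_u0 p N g R1 d u v rs Hs).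
  unfold Rdiv. rewrite Rmult_0_l, Rabs_R0, apow_zero. ring.
Qed.

Lemma En_rcont_R1 : rcont En R1.
Proof.
  intros eps he.
  assert (Hpp := conj_gt1 p hp).
  assert (HG : rcont (fun x => Gint g (u x)) R1).
  { apply rcont_comp. apply (sol_ru p N g R1 d u v rs); auto. split; [lra|apply (sol_rs p N g R1 d u v rs Hs)].
    apply G_cont, gcont. }
  destruct (HG (eps/2) ltac:(lra)) as [d1 [hd1 H1]].
  assert (hc : 0 < (p - 1) / p) by (apply Rdiv_lt_0_compat; lra).
  destruct (apow_small (conj_exp p) ltac:(lra) (eps / 2 / ((p - 1) / p))) as [d2 [hd2 H2]].
  { apply Rdiv_lt_0_compat; lra. }
  destruct (w_small_R1 d2 hd2) as [d3 [hd3 H3]].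
  exists (Rmin d1 d3). split. apply Rmin_pos; auto.
  intros x hx. assert (hm1 := Rmin_l d1 d3). assert (hm2 := Rmin_r d1 d3).
  destruct (Req_dec x R1) as [->|hne]. rewrite Rminus_eq_0, Rabs_R0; auto.
  rewrite En_R1. unfold En. specialize (H1 x ltac:(lra)).
  rewrite (sol_u0 p N g R1 d u v rs Hs) in H1.
  specialize (H2 _ (H3 x ltac:(lra))).
  assert (0 <= apow (Rabs (v x / x ^ (N - 1))) (conj_exp p)) by apply apow_ge0.
  assert (E : (p - 1) / p * apow (Rabs (v x / x ^ (N - 1))) (conj_exp p) < eps / 2).
  { apply (Rmult_lt_compat_l ((p-1)/p)) in H2; auto. replace ((p - 1) / p * (eps / 2 / ((p - 1) / p))) with (eps/2) in H2 by (field; lra). auto. }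
  replace ((p - 1) / p * apow (Rabs (v x / x ^ (N - 1))) (conj_exp p) + Gint g (u x) - Gint g (1 - d))
    with ((p - 1) / p * apow (Rabs (v x / x ^ (N - 1))) (conj_exp p) + (Gint g (u x) - Gint g (1 - d))) by ring.
  eapply Rle_lt_trans. apply Rabs_triang. rewrite Rabs_right by (apply Rle_ge, Rmult_le_pos; lra). lra.
Qed.

Lemma En_rcont r : R1 <= r < rs -> rcont En r.
Proof.
  intros h. destruct (Req_dec r R1) as [->|hne]. apply En_rcont_R1.
  apply (rcont_of_deriv En r (Edot r)). apply En_deriv; lra.
Qed.

Lemma En_mono a b : R1 <= a <= b -> b < rs -> En b <= En a.
Proof.
  intros hab hb. destruct (Req_dec a b) as [->|hne]. lra.
  destruct (mvt_right En Edot a b ltac:(lra)) as [c [hc Hc]].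
  intros x hx. apply En_deriv; lra. apply En_rcont; lra.
  apply (derive_cont En b (Edot b)). apply En_deriv; lra.
  assert (Edot c <= 0) by (apply Edot_nonpos; lra). nra.
Qed.

Lemma En_le r : R1 <= r < rs -> En r <= Gint g (1 - d).
Proof. intros h. rewrite <- En_R1. apply En_mono; lra. Qed.

Definition Wst := Rmax 1 (p / (p - 1) * (- Gint g 1)).

Lemma w_bound r : 0 <= d <= 1 -> R1 <= r < rs -> Rabs (v r / r ^ (N - 1)) <= Wst.
Proof.
  intros hd hr. assert (H := En_le r hr). unfold En in H.
  assert (HG1 := G_ge_min g (u r) Hg). assert (HG2 := G_nonpos g (1 - d) Hg ltac:(lra)).
  assert (hc : 0 < (p - 1) / p) by (apply Rdiv_lt_0_compat; lra).
  set (a := apow (Rabs (v r / r ^ (N - 1))) (conj_exp p)) in H.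
  assert (Ha : a <= p / (p - 1) * (- Gint g 1)).
  { apply (Rmult_le_reg_l ((p - 1) / p)); auto. replace ((p - 1) / p * (p / (p - 1) * - Gint g 1)) with (- Gint g 1) by (field; lra). lra. }
  destruct (Rle_dec (Rabs (v r / r ^ (N - 1))) Wst) as [|hn]; auto. exfalso.
  unfold Wst in hn. assert (h1 := Rmax_l 1 (p / (p - 1) * - Gint g 1)). assert (h2 := Rmax_r 1 (p / (p - 1) * - Gint g 1)).
  assert (Rabs (v r / r ^ (N - 1)) <= a).
  { unfold a. rewrite apow_pos by lra. apply Rpower_ge_self. assert (Hpp := conj_gt1 p hp). lra. lra. }
  lra.
Qed.

Definition Du := Rpower Wst (conj_exp p - 1).

Lemma Wst_ge1 : 1 <= Wst.
Proof. apply Rmax_l. Qed.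

Lemma du_bound r : 0 <= d <= 1 -> R1 <= r < rs -> Rabs (phi_p_inv p (v r / r ^ (N - 1))) <= Du.
Proof.
  intros hd hr. unfold phi_p_inv. rewrite phi_abs. unfold Du.
  assert (Hw := w_bound r hd hr). assert (Hpp := conj_gt1 p hp). assert (H1 := Wst_ge1).
  unfold apow. destruct (Rlt_dec 0 (Rabs (v r / r ^ (N - 1)))).
  apply Rpower_le_l; lra. left; apply Rpower_gt0.
Qed.

End Energy.

Open Scope R_scope.

Lemma cont_induction (Q : R -> Prop) a c : a < c -> Q a ->
  (forall r0, a <= r0 < c -> (forall x, a <= x <= r0 -> Q x) ->
     exists dl, 0 < dl /\ forall x, r0 <= x <= r0 + dl -> x < c -> Q x) ->
  (forall r0, a < r0 < c -> (forall x, a <= x < r0 -> Q x) -> Q r0) ->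
  forall x, a <= x < c -> Q x.
Proof.
  intros hac Qa Hext Hcl.
  set (A := fun r => r <= c /\ forall x, a <= x <= r -> x < c -> Q x).
  assert (HA : bound A) by (exists c; intros r [hr _]; auto).
  assert (HAa : exists r, A r).
  { exists a. split. lra. intros x hx _. replace x with a by lra. auto. }
  destruct (completeness A HA HAa) as [s [Hub Hlub]].
  assert (hsa : a <= s) by (apply Hub; split; [lra|intros x hx _; replace x with a by lra; auto]).
  assert (hsc : s <= c) by (apply Hlub; intros r [hr _]; auto).
  assert (Hbelow : forall x, a <= x < s -> Q x).
  { intros x hx. destruct (Classical_Prop.classic (exists r, A r /\ x < r)) as [[r [[hr1 hr2] hr3]]|hn].
    - apply hr2; lra.
    - exfalso. assert (s <= x). { apply Hlub. intros r hr. destruct (Rle_dec r x); auto. exfalso; apply hn; exists r; split; auto; lra. }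
      lra. }
  destruct (Req_dec s c) as [->|hne].
  - intros x hx. apply Hbelow; auto.
  - exfalso. assert (Qs : Q s).
    { destruct (Req_dec s a) as [->|]; auto. apply Hcl; [lra|]. auto. }
    destruct (Hext s ltac:(lra)) as [dl [hdl Hdl]].
    { intros x hx. destruct (Req_dec x s) as [->|]; auto. apply Hbelow; lra. }
    assert (A (Rmin (s + dl) c)).
    { split. apply Rmin_r. intros x hx hxc. assert (Rmin (s + dl) c <= s + dl) by apply Rmin_l.
      destruct (Rlt_dec x s). apply Hbelow; lra. apply Hdl; auto; lra. }
    assert (Rmin (s + dl) c <= s) by (apply Hub; auto).
    unfold Rmin in H0. destruct (Rle_dec (s + dl) c); lra.
Qed.

Lemma apow_mono x y e : 0 <= e -> 0 <= x <= y -> apow x e <= apow y e.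
Proof.
  intros he [h1 h2]. unfold apow. destruct (Rlt_dec 0 x); destruct (Rlt_dec 0 y).
  apply Rpower_le_l; lra. lra. left; apply Rpower_gt0. lra.
Qed.

Lemma apow_mult x y e : 0 <= x -> 0 <= y -> apow (x * y) e = apow x e * apow y e.
Proof.
  intros hx hy. destruct (Req_dec x 0) as [->|hx']. rewrite Rmult_0_l, apow_zero. ring.
  destruct (Req_dec y 0) as [->|hy']. rewrite Rmult_0_r, apow_zero. ring.
  rewrite !apow_pos by nra. rewrite Rpower_mult_distr; auto; lra.
Qed.

Lemma apow_apow x e f : 0 <= x -> apow (apow x e) f = apow x (e * f).
Proof.
  intros hx. destruct (Req_dec x 0) as [->|hx']. rewrite !apow_zero. reflexivity.
  rewrite (apow_pos x) by lra. rewrite apow_pos by apply Rpower_gt0. rewrite Rpower_mult.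
  rewrite apow_pos by lra. reflexivity.
Qed.

Lemma apow_one x : 0 <= x -> apow x 1 = x.
Proof. intros hx. destruct (Req_dec x 0) as [->|]. apply apow_zero. rewrite apow_pos by lra. apply Rpower_1; lra. Qed.

Lemma apow_le1 x e : 0 <= e -> 0 <= x <= 1 -> apow x e <= 1.
Proof.
  intros he hx. destruct (Req_dec x 0) as [->|]. rewrite apow_zero; lra.
  rewrite apow_pos by lra. unfold Rpower.
  assert (ln x <= 0). { destruct (Req_dec x 1) as [->|]. rewrite ln_1; lra. rewrite <- ln_1. left; apply ln_increasing; lra. }
  assert (e * ln x <= 0) by nra. rewrite <- exp_0.
  destruct (Req_dec (e * ln x) 0) as [E|]. rewrite E; lra. left; apply exp_increasing; lra.
Qed.

Lemma cont_left_zero (f : R -> R) a r0 : a < r0 -> continuous f r0 -> (forall y, a <= y < r0 -> f y = 0) -> f r0 = 0.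
Proof.
  intros har Hc H. destruct (Req_dec (f r0) 0) as [|hn]; auto. exfalso.
  destruct (eps_cont f r0 Hc (Rabs (f r0)) ltac:(apply Rabs_pos_lt; auto)) as [e [he He]].
  set (y := Rmax a (r0 - e/2)).
  assert (hy1 : a <= y) by apply Rmax_l. assert (hy2 : r0 - e/2 <= y) by apply Rmax_r.
  assert (hy3 : y < r0) by (unfold y; unfold Rmax; destruct (Rle_dec a (r0 - e/2)); lra).
  specialize (He y ltac:(rewrite Rabs_left by lra; lra)). rewrite H in He by lra.
  rewrite Rminus_0_l, Rabs_Ropp in He. lra.
Qed.

Section Uniq1.
Variables (p : R) (N : nat) (g : R -> R) (R1 d : R) (u v : R -> R) (rs : R).
Hypothesis hp : 1 < p.
Hypothesis hR1 : 0 <= R1.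
Hypothesis Hg : gprop g.
Hypothesis Hs : is_sol_g p N g R1 d u v rs.

Let vib := v_incr_bound p N g R1 d u v rs hR1 Hs.
Let Emono := En_mono p N g R1 d u v rs hp hR1 Hg Hs.

Lemma state_one r0 : R1 <= r0 < rs -> u r0 = 1 -> v r0 = 0 -> forall x, r0 <= x < rs -> u x = 1 /\ v x = 0.
Proof.
  intros hr0 hu hv x hx. assert (H := Emono r0 x ltac:(lra) ltac:(lra)).
  unfold En in H. rewrite hu, hv in H. replace (0 / r0 ^ (N - 1)) with 0 in H by (unfold Rdiv; ring). rewrite Rabs_R0, apow_zero, Rmult_0_r, Rplus_0_l in H.
  assert (ha := apow_ge0 (Rabs (v x / x ^ (N - 1))) (conj_exp p)).
  assert (hc : 0 < (p - 1) / p) by (apply Rdiv_lt_0_compat; lra).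
  assert (hG := G_ge_min g (u x) Hg).
  assert (Hu : u x = 1).
  { destruct (Req_dec (u x) 1) as [|hn]; auto. assert (H2 := G_min g (u x) Hg hn). nra. }
  split; auto. rewrite Hu in H.
  assert (Ha : apow (Rabs (v x / x ^ (N - 1))) (conj_exp p) = 0) by nra.
  destruct (Req_dec x r0) as [->|hne]; auto.
  assert (hx0 : 0 < x) by lra. assert (hX : 0 < x ^ (N - 1)) by (apply pow_lt; auto).
  destruct (Req_dec (v x) 0) as [|hn]; auto. exfalso.
  rewrite apow_pos in Ha. assert (H3 := Rpower_gt0 (Rabs (v x / x ^ (N - 1))) (conj_exp p)). lra.
  apply Rabs_pos_lt. unfold Rdiv. apply Rmult_integral_contrapositive. split; auto.
  apply Rinv_neq_0_compat. lra.
Qed.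

Variable K : R.
Hypothesis hK : 0 < K.
Hypothesis Hgrow : forall s, Rabs s <= 1 -> Rabs (g s) <= K * apow (Rabs s) (p - 1).

Lemma zero_step r0 : R1 <= r0 < rs -> u r0 = 0 -> v r0 = 0 ->
  exists dl, 0 < dl /\ forall x, r0 <= x <= r0 + dl -> x < rs -> u x = 0 /\ v x = 0.
Proof.
  intros hr0 hu hv.
  destruct (sol_ru p N g R1 d u v rs hR1 Hs r0 hr0 1 Rlt_0_1) as [d0 [hd0 Hd0]].
  rewrite hu in Hd0.
  set (dl := Rmin (d0 / 2) (Rmin (1/2) (1 / K))).
  assert (hdl1 : dl <= d0 / 2) by apply Rmin_l.
  assert (hdl2 : dl <= 1/2) by (eapply Rle_trans; [apply Rmin_r| apply Rmin_l]).
  assert (hdl3 : dl <= 1/K) by (eapply Rle_trans; [apply Rmin_r| apply Rmin_r]).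
  assert (hdl : 0 < dl) by (apply Rmin_pos; [lra| apply Rmin_pos; [lra| apply Rdiv_lt_0_compat; lra]]).
  exists dl. split; auto. intros x hx hxr.
  assert (Hpp := conj_gt1 p hp).
  destruct (Req_dec x r0) as [->|hne]. auto.
  destruct (max_on (fun y => Rabs (u y)) r0 x ltac:(lra)) as [rho [hrho Hrho]].
  { apply rcont_abs. apply (sol_ru p N g R1 d u v rs hR1 Hs r0 hr0). }
  { intros y hy. apply contR_abs. apply (sol_cu p N g R1 d u v rs hR1 Hs). lra. }
  set (M := Rabs (u rho)) in *.
  assert (hM1 : M <= 1).
  { unfold M. destruct (Req_dec rho r0) as [->|]. rewrite hu, Rabs_R0; lra.
    specialize (Hd0 rho ltac:(lra)). rewrite Rminus_0_r in Hd0. lra. }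
  assert (hM0 : 0 <= M) by apply Rabs_pos.
  assert (Hgu : forall c, r0 < c <= x -> Rabs (g (u c)) <= K * apow M (p - 1)).
  { intros c hc. assert (Rabs (u c) <= M) by (apply Hrho; lra).
    eapply Rle_trans. apply Hgrow. lra. apply Rmult_le_compat_l. lra.
    apply apow_mono. lra. split; [apply Rabs_pos|auto]. }
  assert (HM : M = 0).
  { destruct (Req_dec rho r0) as [E|hne2]. unfold M; rewrite E, hu, Rabs_R0; auto.
    destruct (mvt_right u (fun y => phi_p_inv p (v y / y ^ (N - 1))) r0 rho ltac:(lra)) as [xi [hxi Hxi]].
    { intros y hy. apply (sol_du p N g R1 d u v rs hR1 Hs). lra. }
    { apply (sol_ru p N g R1 d u v rs hR1 Hs). lra. }
    { apply (sol_cu p N g R1 d u v rs hR1 Hs). lra. }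
    rewrite hu, Rminus_0_r in Hxi.
    assert (Hv := vib r0 xi (K * apow M (p - 1)) ltac:(lra) ltac:(lra) ltac:(intros; apply Hgu; lra)).
    rewrite hv, Rminus_0_r in Hv.
    assert (hX : 0 < xi ^ (N - 1)) by (apply pow_lt; lra).
    assert (Hw : Rabs (v xi / xi ^ (N - 1)) <= (K * dl) * apow M (p - 1)).
    { unfold Rdiv. rewrite Rabs_mult, Rabs_inv, (Rabs_right (xi ^ (N - 1))) by lra.
      apply (Rmult_le_reg_r (xi ^ (N - 1))); auto. rewrite Rmult_assoc, Rinv_l, Rmult_1_r by lra.
      eapply Rle_trans. apply Hv. assert (0 <= apow M (p - 1)) by apply apow_ge0.
      assert (0 <= K * apow M (p - 1)) by (apply Rmult_le_pos; lra).
      replace (K * dl * apow M (p - 1) * xi ^ (N - 1)) with (K * apow M (p - 1) * xi ^ (N - 1) * dl) by ring.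
      apply Rmult_le_compat_l. apply Rmult_le_pos; lra. lra. }
    assert (Hd : Rabs (phi_p_inv p (v xi / xi ^ (N - 1))) <= M).
    { unfold phi_p_inv. rewrite phi_abs.
      eapply Rle_trans. apply apow_mono. lra. split. apply Rabs_pos. apply Hw.
      rewrite apow_mult by (try apply apow_ge0; apply Rmult_le_pos; lra).
      rewrite apow_apow by lra. replace ((p - 1) * (conj_exp p - 1)) with 1 by (rewrite conj_m1 by auto; field; lra).
      rewrite apow_one by lra.
      assert (apow (K * dl) (conj_exp p - 1) <= 1).
      { apply apow_le1. lra. split. apply Rmult_le_pos; lra.
        apply Rle_trans with (K * (1 / K)). apply Rmult_le_compat_l; lra. right; field; lra. }
      nra. }
    assert (M <= M * (rho - r0)).
    { unfold M at 1. rewrite Hxi, Rabs_mult, (Rabs_right (rho - r0)) by lra.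
      apply Rmult_le_compat_r; lra. }
    nra. }
  assert (Hux : u x = 0).
  { assert (Rabs (u x) <= M) by (apply Hrho; lra). rewrite HM in H. apply Rabs_eq_0. apply Rle_antisym; auto. apply Rabs_pos. }
  split; auto.
  assert (Hv := vib r0 x 0 ltac:(lra) ltac:(lra)).
  rewrite hv, Rminus_0_r, !Rmult_0_l in Hv. apply Rabs_eq_0, Rle_antisym; [|apply Rabs_pos]. apply Hv.
  intros c hc. assert (HH := Hgu c ltac:(lra)). rewrite HM, apow_zero, Rmult_0_r in HH. auto.
Qed.

Lemma d1_zero : d = 1 -> forall x, R1 <= x < rs -> u x = 0 /\ v x = 0.
Proof.
  intros hd. apply cont_induction. apply (sol_rs p N g R1 d u v rs Hs).
  split. rewrite (sol_u0 p N g R1 d u v rs Hs); lra. apply (sol_v0 p N g R1 d u v rs Hs).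
  - intros r0 hr0 HQ. destruct (HQ r0 ltac:(lra)) as [h1 h2]. apply zero_step; auto.
  - intros r0 hr0 HQ. split.
    + apply (cont_left_zero u R1 r0); [lra| apply (sol_cu p N g R1 d u v rs hR1 Hs); lra|].
      intros y hy; apply HQ; auto.
    + apply (cont_left_zero v R1 r0); [lra| apply (sol_cv p N g R1 d u v rs hR1 Hs); lra|].
      intros y hy; apply HQ; auto.
Qed.

End Uniq1.

Open Scope R_scope.

Section Two.
Variables (p : R) (N : nat) (g : R -> R) (R1 d : R) (u1 v1 u2 v2 : R -> R) (rs1 rs2 : R).
Hypothesis hp : 1 < p.
Hypothesis hR1 : 0 <= R1.
Hypothesis Hg : gprop g.
Hypothesis Hs1 : is_sol_g p N g R1 d u1 v1 rs1.
Hypothesis Hs2 : is_sol_g p N g R1 d u2 v2 rs2.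

Lemma contraction_core r0 dl L c Wm :
  R1 <= r0 -> 0 < dl -> r0 + dl < rs1 -> r0 + dl < rs2 -> u1 r0 = u2 r0 -> v1 r0 = v2 r0 ->
  0 <= L -> 0 < c -> 0 < Wm ->
  (forall s, r0 < s <= r0 + dl -> Rabs (g (u1 s) - g (u2 s)) <= L * Rabs (u1 s - u2 s)) ->
  (forall s, r0 < s <= r0 + dl -> 0 < (v1 s / s ^ (N - 1)) * (v2 s / s ^ (N - 1)) /\
      c * (s - r0) <= Rabs (v1 s / s ^ (N - 1)) <= Wm /\ c * (s - r0) <= Rabs (v2 s / s ^ (N - 1)) <= Wm) ->
  (conj_exp p - 1) * L * (Rpower c (conj_exp p - 2) * Rpower dl (conj_exp p - 1) + Rpower Wm (conj_exp p - 2) * dl) * dl < 1 ->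
  forall x, r0 <= x <= r0 + dl -> u1 x = u2 x /\ v1 x = v2 x.
Proof.
  intros h0 hdl hr1 hr2 hu hv hL hc hW H1 H2 H3 x hx.
  assert (Hpp := conj_gt1 p hp). set (q := conj_exp p) in *.
  destruct (Req_dec x r0) as [->|hne]. auto.
  assert (rc1 : forall y, r0 <= y <= r0 + dl -> rcont u1 y) by (intros; apply (sol_ru p N g R1 d u1 v1 rs1 hR1 Hs1); lra).
  assert (rc2 : forall y, r0 <= y <= r0 + dl -> rcont u2 y) by (intros; apply (sol_ru p N g R1 d u2 v2 rs2 hR1 Hs2); lra).
  assert (rcv1 : forall y, r0 <= y <= r0 + dl -> rcont v1 y) by (intros; apply (sol_rv p N g R1 d u1 v1 rs1 hR1 Hs1); lra).
  assert (rcv2 : forall y, r0 <= y <= r0 + dl -> rcont v2 y) by (intros; apply (sol_rv p N g R1 d u2 v2 rs2 hR1 Hs2); lra).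
  assert (cu1 : forall y, r0 < y <= r0 + dl -> continuous u1 y) by (intros; apply (sol_cu p N g R1 d u1 v1 rs1 hR1 Hs1); lra).
  assert (cu2 : forall y, r0 < y <= r0 + dl -> continuous u2 y) by (intros; apply (sol_cu p N g R1 d u2 v2 rs2 hR1 Hs2); lra).
  assert (cv1 : forall y, r0 < y <= r0 + dl -> continuous v1 y) by (intros; apply (sol_cv p N g R1 d u1 v1 rs1 hR1 Hs1); lra).
  assert (cv2 : forall y, r0 < y <= r0 + dl -> continuous v2 y) by (intros; apply (sol_cv p N g R1 d u2 v2 rs2 hR1 Hs2); lra).
  destruct (max_on (fun y => Rabs (u1 y - u2 y)) r0 x ltac:(lra)) as [rho [hrho Hrho]].
  { apply rcont_abs, rcont_minus; [apply rc1| apply rc2]; lra. }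
  { intros y hy. apply contR_abs, contR_minus; [apply cu1|apply cu2]; lra. }
  set (M := Rabs (u1 rho - u2 rho)) in *.
  assert (hM0 : 0 <= M) by apply Rabs_pos.
  assert (HV : forall xi, r0 < xi <= x -> Rabs ((v1 xi - v2 xi) - (v1 r0 - v2 r0)) <= (L * M * xi ^ (N - 1)) * (xi - r0)).
  { intros xi hxi. apply (deriv_bound (fun y => v1 y - v2 y) (fun y => - (y ^ (N - 1) * g (u1 y)) - - (y ^ (N - 1) * g (u2 y)))). lra.
    - intros y hy. apply isdR_minus. apply (sol_dv p N g R1 d u1 v1 rs1 hR1 Hs1); lra. apply (sol_dv p N g R1 d u2 v2 rs2 hR1 Hs2); lra.
    - apply rcont_minus; [apply rcv1|apply rcv2]; lra.
    - apply contR_minus; [apply cv1|apply cv2]; lra.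
    - intros y hy. replace (- (y ^ (N - 1) * g (u1 y)) - - (y ^ (N - 1) * g (u2 y))) with (- (y ^ (N - 1) * (g (u1 y) - g (u2 y)))) by ring.
      rewrite Rabs_Ropp, Rabs_mult, Rabs_right by (apply Rle_ge, pow_le; lra).
      assert (y ^ (N - 1) <= xi ^ (N - 1)) by (apply pow_incr; lra).
      assert (0 <= y ^ (N - 1)) by (apply pow_le; lra).
      assert (Rabs (g (u1 y) - g (u2 y)) <= L * M).
      { eapply Rle_trans. apply H1; lra. apply Rmult_le_compat_l; auto. apply Hrho; lra. }
      assert (0 <= Rabs (g (u1 y) - g (u2 y))) by apply Rabs_pos.
      replace (L * M * xi ^ (N - 1)) with (xi ^ (N - 1) * (L * M)) by ring.
      apply Rmult_le_compat; lra. }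
  assert (HM : M = 0).
  { destruct (Req_dec rho r0) as [E|hne2]. unfold M; rewrite E, hu, Rminus_eq_0, Rabs_R0; auto.
    destruct (mvt_right (fun y => u1 y - u2 y) (fun y => phi_p_inv p (v1 y / y ^ (N - 1)) - phi_p_inv p (v2 y / y ^ (N - 1))) r0 rho ltac:(lra)) as [xi [hxi Hxi]].
    { intros y hy. apply isdR_minus. apply (sol_du p N g R1 d u1 v1 rs1 hR1 Hs1); lra. apply (sol_du p N g R1 d u2 v2 rs2 hR1 Hs2); lra. }
    { apply rcont_minus; [apply rc1|apply rc2]; lra. }
    { apply contR_minus; [apply cu1|apply cu2]; lra. }
    rewrite hu, Rminus_eq_0, Rminus_0_r in Hxi.
    set (t := xi - r0).
    assert (ht : 0 < t) by (unfold t; lra).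
    assert (hX : 0 < xi ^ (N - 1)) by (apply pow_lt; lra).
    assert (Hw : Rabs (v1 xi / xi ^ (N - 1) - v2 xi / xi ^ (N - 1)) <= L * M * t).
    { specialize (HV xi ltac:(lra)). rewrite hv, Rminus_eq_0, Rminus_0_r in HV.
      replace (v1 xi / xi ^ (N - 1) - v2 xi / xi ^ (N - 1)) with ((v1 xi - v2 xi) / xi ^ (N - 1)) by (field; lra).
      unfold Rdiv. rewrite Rabs_mult, Rabs_inv, (Rabs_right (xi ^ (N - 1))) by lra.
      apply (Rmult_le_reg_r (xi ^ (N - 1))); auto. rewrite Rmult_assoc, Rinv_l, Rmult_1_r by lra.
      unfold t. nra. }
    destruct (H2 xi ltac:(lra)) as [Hs [[Hl1 Hu1] [Hl2 Hu2]]].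
    assert (Hphi := phi_lip q (v1 xi / xi ^ (N - 1)) (v2 xi / xi ^ (N - 1)) (c * t) Wm Hpp
                     ltac:(apply Rmult_lt_0_compat; lra) ltac:(split; auto) ltac:(split; auto) Hs).
    assert (Hrp : Rpower (c * t) (q - 2) * t <= Rpower c (q - 2) * Rpower dl (q - 1)).
    { rewrite <- Rpower_mult_distr by lra. rewrite Rmult_assoc.
      apply Rmult_le_compat_l. left; apply Rpower_gt0.
      replace (Rpower t (q - 2) * t) with (Rpower t (q - 1)).
      apply Rpower_le_l; unfold t in *; lra.
      replace (q - 1) with ((q - 2) + 1) by ring. rewrite Rpower_plus, Rpower_1 by lra. ring. }
    assert (Hrw : Rpower Wm (q - 2) * t <= Rpower Wm (q - 2) * dl).
    { apply Rmult_le_compat_l. left; apply Rpower_gt0. unfold t; lra. }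
    unfold phi_p_inv in Hxi. fold q in Hxi.
    assert (HD : M <= (q - 1) * L * (Rpower c (q - 2) * Rpower dl (q - 1) + Rpower Wm (q - 2) * dl) * dl * M).
    { unfold M at 1. rewrite Hxi, Rabs_mult, (Rabs_right (rho - r0)) by lra.
      assert (0 <= Rpower (c * t) (q - 2)) by (left; apply Rpower_gt0).
      assert (0 <= Rpower Wm (q - 2)) by (left; apply Rpower_gt0).
      assert (E1 : Rabs (phi_p q (v1 xi / xi ^ (N - 1)) - phi_p q (v2 xi / xi ^ (N - 1))) <=
              (q - 1) * L * M * (Rpower (c * t) (q - 2) * t + Rpower Wm (q - 2) * t)).
      { eapply Rle_trans. apply Hphi.
        replace ((q - 1) * L * M * (Rpower (c * t) (q - 2) * t + Rpower Wm (q - 2) * t))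
          with ((q - 1) * (Rpower (c * t) (q - 2) + Rpower Wm (q - 2)) * (L * M * t)) by ring.
        apply Rmult_le_compat_l. apply Rmult_le_pos; lra. auto. }
      assert (E2 : (q - 1) * L * M * (Rpower (c * t) (q - 2) * t + Rpower Wm (q - 2) * t) <=
                   (q - 1) * L * M * (Rpower c (q - 2) * Rpower dl (q - 1) + Rpower Wm (q - 2) * dl)).
      { apply Rmult_le_compat_l. apply Rmult_le_pos; [apply Rmult_le_pos|]; lra. lra. }
      assert (0 <= Rabs (phi_p q (v1 xi / xi ^ (N - 1)) - phi_p q (v2 xi / xi ^ (N - 1)))) by apply Rabs_pos.
      assert (0 <= (q - 1) * L * M * (Rpower c (q - 2) * Rpower dl (q - 1) + Rpower Wm (q - 2) * dl)) by lra.
      replace ((q - 1) * L * (Rpower c (q - 2) * Rpower dl (q - 1) + Rpower Wm (q - 2) * dl) * dl * M)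
        with ((q - 1) * L * M * (Rpower c (q - 2) * Rpower dl (q - 1) + Rpower Wm (q - 2) * dl) * dl) by ring.
      apply Rmult_le_compat; lra. }
    nra. }
  assert (Hux : u1 x = u2 x).
  { assert (Rabs (u1 x - u2 x) <= M) by (apply Hrho; lra). rewrite HM in H.
    assert (Rabs (u1 x - u2 x) = 0) by (apply Rle_antisym; auto; apply Rabs_pos).
    apply Rabs_eq_0 in H0. lra. }
  split; auto.
  specialize (HV x ltac:(lra)). rewrite HM, hv, Rminus_eq_0, Rminus_0_r, Rmult_0_r, !Rmult_0_l in HV.
  assert (Rabs (v1 x - v2 x) = 0) by (apply Rle_antisym; auto; apply Rabs_pos).
  apply Rabs_eq_0 in H. lra.
Qed.

End Two.

Lemma lower_gen (F dF : R -> R) (N : nat) r0 s a : (1 <= N)%nat -> 0 <= r0 < s -> 0 <= a -> F r0 = 0 ->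
  (forall y, r0 < y < s -> is_derive F y (dF y)) -> rcont F r0 -> continuous F s ->
  (forall y, r0 < y < s -> a * y ^ (N - 1) <= dF y) ->
  a / INR N * s ^ (N - 1) * (s - r0) <= F s.
Proof.
  intros hN hs ha H0 Hd Hr Hc Hb.
  assert (hNp : 0 < INR N) by (apply lt_0_INR; lia).
  set (h := fun y => F y - a * y ^ N / INR N).
  assert (Hh : h r0 <= h s).
  { apply (deriv_nonneg h (fun y => dF y - a * (INR N * 1 * y ^ Init.Nat.pred N) / INR N)). lra.
    - intros y hy. unfold h. apply isdR_minus. apply Hd; auto.
      auto_derive. auto. field. lra.
    - unfold h. apply rcont_minus; auto. apply cont_rcont. apply (derive_cont _ _ (a * (INR N * 1 * r0 ^ Init.Nat.pred N) / INR N)).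
      auto_derive. auto. field. lra.
    - unfold h. apply contR_minus; auto. apply (derive_cont _ _ (a * (INR N * 1 * s ^ Init.Nat.pred N) / INR N)).
      auto_derive. auto. field. lra.
    - intros y hy. rewrite <- Nat.sub_1_r. specialize (Hb y hy).
      replace (a * (INR N * 1 * y ^ (N - 1)) / INR N) with (a * y ^ (N - 1)) by (field; lra). lra. }
  unfold h in Hh. rewrite H0 in Hh.
  assert (Hp := pow_diff_ge r0 s N ltac:(lra) hN).
  assert (a * (s ^ (N - 1) * (s - r0)) <= a * (s ^ N - r0 ^ N)) by (apply Rmult_le_compat_l; lra).
  apply (Rmult_le_compat_r (/ INR N)) in H. 2: left; apply Rinv_0_lt_compat; lra.
  unfold Rdiv in *. nra.
Qed.

Lemma div_pow_bound (x s A t : R) (N : nat) : 0 < s -> Rabs x <= A * s ^ (N - 1) * t -> Rabs (x / s ^ (N - 1)) <= A * t.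
Proof.
  intros hs H. assert (hX : 0 < s ^ (N - 1)) by (apply pow_lt; auto).
  unfold Rdiv. rewrite Rabs_mult, Rabs_inv, (Rabs_right (s ^ (N - 1))) by lra.
  apply (Rmult_le_reg_r (s ^ (N - 1))); auto. rewrite Rmult_assoc, Rinv_l, Rmult_1_r by lra.
  replace (A * t * s ^ (N - 1)) with (A * s ^ (N - 1) * t) by ring. auto.
Qed.

Lemma div_pow_lower (x s c : R) (N : nat) : 0 < s -> c * s ^ (N - 1) <= x -> c <= x / s ^ (N - 1).
Proof.
  intros hs H. assert (hX : 0 < s ^ (N - 1)) by (apply pow_lt; auto).
  apply (Rmult_le_reg_r (s ^ (N - 1))); auto. unfold Rdiv. rewrite Rmult_assoc, Rinv_l, Rmult_1_r by lra. auto.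
Qed.

Lemma wcont (v : R -> R) (N : nat) r : 0 < r -> continuous v r -> continuous (fun y => v y / y ^ (N - 1)) r.
Proof.
  intros hr Hv. unfold Rdiv. apply contR_mult; auto. apply contR_inv. apply contR_pow, contR_id.
  apply Rgt_not_eq, pow_lt; auto.
Qed.

Lemma choose_small (q L C1 C2 : R) : 1 < q -> 0 <= L -> 0 <= C1 -> 0 <= C2 -> forall d0, 0 < d0 ->
  exists dl, 0 < dl /\ dl <= d0 /\ (q - 1) * L * (C1 * Rpower dl (q - 1) + C2 * dl) * dl < 1.
Proof.
  intros hq hL h1 h2 d0 hd0.
  set (eta := / (2 * ((q - 1) * (L + 1) * (C1 + C2 + 1)))).
  assert (hden : 0 < 2 * ((q - 1) * (L + 1) * (C1 + C2 + 1))) by (repeat apply Rmult_lt_0_compat; lra).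
  assert (heta : 0 < eta) by (apply Rinv_0_lt_compat; auto).
  destruct (Rpower_small (q - 1) ltac:(lra) eta heta) as [e [he He]].
  set (dl := Rmin (Rmin d0 1) (Rmin (e / 2) eta)).
  assert (hd1 : dl <= d0) by (eapply Rle_trans; [apply Rmin_l| apply Rmin_l]).
  assert (hd2 : dl <= 1) by (eapply Rle_trans; [apply Rmin_l| apply Rmin_r]).
  assert (hd3 : dl <= e / 2) by (eapply Rle_trans; [apply Rmin_r| apply Rmin_l]).
  assert (hd4 : dl <= eta) by (eapply Rle_trans; [apply Rmin_r| apply Rmin_r]).
  assert (hdl : 0 < dl) by (unfold dl; repeat apply Rmin_pos; lra).
  exists dl. split; auto. split; auto.
  assert (HR : Rpower dl (q - 1) < eta) by (apply He; lra).
  assert (0 < Rpower dl (q - 1)) by apply Rpower_gt0.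
  assert (E : C1 * Rpower dl (q - 1) + C2 * dl <= (C1 + C2) * eta) by nra.
  assert (E2 : (q - 1) * L * (C1 * Rpower dl (q - 1) + C2 * dl) * dl <= (q - 1) * L * ((C1 + C2) * eta) * 1).
  { apply Rmult_le_compat. apply Rmult_le_pos. apply Rmult_le_pos; lra. nra. lra.
    apply Rmult_le_compat_l. apply Rmult_le_pos; lra. auto. auto. }
  assert ((q - 1) * L * ((C1 + C2) * eta) < 1).
  { unfold eta. apply (Rmult_lt_reg_r (2 * ((q - 1) * (L + 1) * (C1 + C2 + 1)))); auto.
    rewrite Rmult_1_l. replace ((q - 1) * L * ((C1 + C2) * / (2 * ((q - 1) * (L + 1) * (C1 + C2 + 1)))) *
      (2 * ((q - 1) * (L + 1) * (C1 + C2 + 1)))) with ((q - 1) * L * (C1 + C2)) by (field; lra).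
    assert (0 < q - 1) by lra. nra. }
  lra.
Qed.

Section Two2.
Variables (p : R) (N : nat) (g : R -> R) (R1 d : R) (u1 v1 u2 v2 : R -> R) (rs1 rs2 : R).
Hypothesis hp : 1 < p.
Hypothesis hN : (1 <= N)%nat.
Hypothesis hR1 : 0 <= R1.
Hypothesis Hg : gprop g.
Hypothesis Hs1 : is_sol_g p N g R1 d u1 v1 rs1.
Hypothesis Hs2 : is_sol_g p N g R1 d u2 v2 rs2.
Hypothesis Hlip : forall a b, 0 < a -> a <= b -> exists L, 0 <= L /\
  forall x y, a <= x <= b -> a <= y <= b -> Rabs (g x - g y) <= L * Rabs (x - y).

Lemma local_step r0 : R1 <= r0 -> r0 < rs1 -> r0 < rs2 -> u1 r0 = u2 r0 -> v1 r0 = v2 r0 ->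
  0 < u1 r0 -> ~ (u1 r0 = 1 /\ v1 r0 = 0) ->
  exists dl, 0 < dl /\ forall x, r0 <= x <= r0 + dl -> u1 x = u2 x /\ v1 x = v2 x.
Proof.
  intros h0 hr1 hr2 hu hv hu0 hn.
  set (u0 := u1 r0) in *. set (v0 := v1 r0) in *.
  assert (Hpp := conj_gt1 p hp).
  destruct (sol_ru p N g R1 d u1 v1 rs1 hR1 Hs1 r0 ltac:(lra) (u0/2) ltac:(lra)) as [e1 [he1 He1]].
  destruct (sol_ru p N g R1 d u2 v2 rs2 hR1 Hs2 r0 ltac:(lra) (u0/2) ltac:(lra)) as [e2 [he2 He2]].
  rewrite <- hu in He2. fold u0 in He1, He2.
  set (da := Rmin (Rmin e1 e2) (Rmin ((rs1 - r0)/2) ((rs2 - r0)/2))).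
  assert (hda1 : da <= e1) by (eapply Rle_trans; [apply Rmin_l| apply Rmin_l]).
  assert (hda2 : da <= e2) by (eapply Rle_trans; [apply Rmin_l| apply Rmin_r]).
  assert (hda3 : da <= (rs1 - r0)/2) by (eapply Rle_trans; [apply Rmin_r| apply Rmin_l]).
  assert (hda4 : da <= (rs2 - r0)/2) by (eapply Rle_trans; [apply Rmin_r| apply Rmin_r]).
  assert (hda : 0 < da) by (unfold da; repeat apply Rmin_pos; lra).
  assert (Hu1r : forall s, r0 <= s < r0 + da -> u0 / 2 <= u1 s <= 3 * u0 / 2).
  { intros s hs. specialize (He1 s ltac:(lra)). apply Rabs_def2 in He1. lra. }
  assert (Hu2r : forall s, r0 <= s < r0 + da -> u0 / 2 <= u2 s <= 3 * u0 / 2).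
  { intros s hs. specialize (He2 s ltac:(lra)). apply Rabs_def2 in He2. lra. }
  destruct (Hlip (u0/2) (3 * u0/2) ltac:(lra) ltac:(lra)) as [L [hL HL]].
  assert (H1 : forall s, r0 < s < r0 + da -> Rabs (g (u1 s) - g (u2 s)) <= L * Rabs (u1 s - u2 s)).
  { intros s hs. apply HL; [apply Hu1r|apply Hu2r]; lra. }
  assert (Hb : exists c Wm db, 0 < c /\ 0 < Wm /\ 0 < db /\ db < da /\
     forall s, r0 < s <= r0 + db -> 0 < (v1 s / s ^ (N - 1)) * (v2 s / s ^ (N - 1)) /\
      c * (s - r0) <= Rabs (v1 s / s ^ (N - 1)) <= Wm /\ c * (s - r0) <= Rabs (v2 s / s ^ (N - 1)) <= Wm).
  { destruct (Req_dec v0 0) as [hv0|hv0].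
    -
      assert (hu1 : u0 <> 1) by (intro E; apply hn; split; auto).
      destruct Hg as [Hgc [Hg0 [Hg1 [Hgn Hgp]]]].
      assert (hg0 : g u0 <> 0).
      { destruct (Rlt_dec u0 1). assert (g u0 < 0) by (apply Hgn; lra). lra.
        assert (0 < g u0) by (apply Hgp; lra). lra. }
      set (a := Rabs (g u0) / 2).
      assert (ha : 0 < a) by (unfold a; assert (0 < Rabs (g u0)) by (apply Rabs_pos_lt; auto); lra).
      destruct (eps_cont g u0 (Hgc u0) a ha) as [e5 [he5 He5]].
      destruct (sol_ru p N g R1 d u1 v1 rs1 hR1 Hs1 r0 ltac:(lra) e5 he5) as [e6 [he6 He6]].
      destruct (sol_ru p N g R1 d u2 v2 rs2 hR1 Hs2 r0 ltac:(lra) e5 he5) as [e7 [he7 He7]].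
      rewrite <- hu in He7. fold u0 in He7.
      set (db := Rmin (Rmin (da / 2) 1) (Rmin (e6 / 2) (e7 / 2))).
      assert (hdb1 : db <= da / 2) by (eapply Rle_trans; [apply Rmin_l| apply Rmin_l]).
      assert (hdb2 : db <= 1) by (eapply Rle_trans; [apply Rmin_l| apply Rmin_r]).
      assert (hdb3 : db <= e6 / 2) by (eapply Rle_trans; [apply Rmin_r| apply Rmin_l]).
      assert (hdb4 : db <= e7 / 2) by (eapply Rle_trans; [apply Rmin_r| apply Rmin_r]).
      assert (hdb : 0 < db) by (unfold db; repeat apply Rmin_pos; lra).
      assert (G1 : forall y, r0 <= y <= r0 + db -> Rabs (g (u1 y) - g u0) < a) by (intros; apply He5, He6; lra).
      assert (G2 : forall y, r0 <= y <= r0 + db -> Rabs (g (u2 y) - g u0) < a) by (intros; apply He5, He7; lra).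
      exists (a / INR N), (3 * a), db.
      assert (hNp : 0 < INR N) by (apply lt_0_INR; lia).
      split. apply Rdiv_lt_0_compat; lra. split. lra. split; auto. split. lra.
      intros s hs. assert (hs0 : 0 < s) by lra.
      assert (Up : forall (u v : R -> R) rs, is_sol_g p N g R1 d u v rs -> r0 + da < rs -> v r0 = 0 ->
                (forall y, r0 <= y <= r0 + db -> Rabs (g (u y) - g u0) < a) ->
                Rabs (v s / s ^ (N - 1)) <= 3 * a * (s - r0)).
      { intros u v rs Hs Hrs Hv0 Gy. apply div_pow_bound; auto.
        assert (HH := v_incr_bound p N g R1 d u v rs hR1 Hs r0 s (3 * a) ltac:(lra) ltac:(lra)).
        rewrite Hv0, Rminus_0_r in HH. apply HH. intros c hc. specialize (Gy c ltac:(lra)).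
        assert (H3 := Rabs_triang_inv (g (u c)) (g u0)). unfold a in *. lra. }
      assert (Lo : forall (u v : R -> R) rs, is_sol_g p N g R1 d u v rs -> r0 + da < rs -> v r0 = 0 ->
                (forall y, r0 <= y <= r0 + db -> Rabs (g (u y) - g u0) < a) ->
                (g u0 < 0 -> a / INR N * (s - r0) <= v s / s ^ (N - 1)) /\
                (0 < g u0 -> a / INR N * (s - r0) <= - (v s / s ^ (N - 1)))).
      { intros u v rs Hs Hrs Hv0 Gy. split; intros hsg.
        - apply div_pow_lower; auto. rewrite Rmult_assoc, (Rmult_comm (s - r0)), <- Rmult_assoc.
          apply (lower_gen v (fun y => - (y ^ (N - 1) * g (u y))) N r0 s a); auto; try lra.
          + intros y hy. apply (sol_dv p N g R1 d u v rs hR1 Hs); lra.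
          + apply (sol_rv p N g R1 d u v rs hR1 Hs); lra.
          + apply (sol_cv p N g R1 d u v rs hR1 Hs); lra.
          + intros y hy. specialize (Gy y ltac:(lra)). apply Rabs_def2 in Gy.
            assert (g u0 = - (2 * a)) by (unfold a; rewrite Rabs_left by lra; field).
            assert (0 <= y ^ (N - 1)) by (apply pow_le; lra). nra.
        - replace (- (v s / s ^ (N - 1))) with ((- v s) / s ^ (N - 1)) by (field; apply Rgt_not_eq, pow_lt; lra).
          apply div_pow_lower; auto. rewrite Rmult_assoc, (Rmult_comm (s - r0)), <- Rmult_assoc.
          apply (lower_gen (fun y => - v y) (fun y => - - (y ^ (N - 1) * g (u y))) N r0 s a); auto; try lra.
          + intros y hy. apply isdR_opp. apply (sol_dv p N g R1 d u v rs hR1 Hs); lra.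
          + intros eps he. destruct (sol_rv p N g R1 d u v rs hR1 Hs r0 ltac:(lra) eps he) as [e [he' He']].
            exists e; split; auto. intros x hx. replace (- v x - - v r0) with (- (v x - v r0)) by ring.
            rewrite Rabs_Ropp; auto.
          + apply contR_opp. apply (sol_cv p N g R1 d u v rs hR1 Hs); lra.
          + intros y hy. specialize (Gy y ltac:(lra)). apply Rabs_def2 in Gy.
            assert (g u0 = 2 * a) by (unfold a; rewrite Rabs_right by lra; field).
            assert (0 <= y ^ (N - 1)) by (apply pow_le; lra). nra. }
      assert (hv1 : v1 r0 = 0) by auto. assert (hv2 : v2 r0 = 0) by (rewrite <- hv; auto).
      assert (U1 := Up u1 v1 rs1 Hs1 ltac:(lra) hv1 G1). assert (U2 := Up u2 v2 rs2 Hs2 ltac:(lra) hv2 G2).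
      destruct (Lo u1 v1 rs1 Hs1 ltac:(lra) hv1 G1) as [L1a L1b].
      destruct (Lo u2 v2 rs2 Hs2 ltac:(lra) hv2 G2) as [L2a L2b].
      assert (hc : 0 < a / INR N * (s - r0)) by (apply Rmult_lt_0_compat; [apply Rdiv_lt_0_compat|]; lra).
      assert (H3a : 3 * a * (s - r0) <= 3 * a) by nra.
      set (a1 := v1 s / s ^ (N - 1)) in *. set (a2 := v2 s / s ^ (N - 1)) in *.
      destruct (Rlt_dec (g u0) 0) as [hneg|hpos].
      + specialize (L1a hneg). specialize (L2a hneg).
        rewrite (Rabs_right a1) in * by lra. rewrite (Rabs_right a2) in * by lra.
        split. nra. lra.
      + assert (hpos' : 0 < g u0) by lra. specialize (L1b hpos'). specialize (L2b hpos').
        rewrite (Rabs_left a1) in * by lra. rewrite (Rabs_left a2) in * by lra.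
        split. nra. lra.
    -
      assert (hr0 : R1 < r0).
      { destruct (Req_dec r0 R1) as [E|]; [|lra]. exfalso. apply hv0. unfold v0. rewrite E.
        apply (sol_v0 p N g R1 d u1 v1 rs1 Hs1). }
      assert (hr00 : 0 < r0) by lra.
      assert (hX : 0 < r0 ^ (N - 1)) by (apply pow_lt; auto).
      set (w0 := v0 / r0 ^ (N - 1)).
      assert (hw0 : w0 <> 0).
      { unfold w0. unfold Rdiv. apply Rmult_integral_contrapositive. split; auto. apply Rinv_neq_0_compat; lra. }
      assert (haw : 0 < Rabs w0) by (apply Rabs_pos_lt; auto).
      assert (C1 := wcont v1 N r0 hr00 (sol_cv p N g R1 d u1 v1 rs1 hR1 Hs1 r0 ltac:(lra))).
      assert (C2 := wcont v2 N r0 hr00 (sol_cv p N g R1 d u2 v2 rs2 hR1 Hs2 r0 ltac:(lra))).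
      destruct (eps_cont _ r0 C1 (Rabs w0 / 2) ltac:(lra)) as [e3 [he3 He3]].
      destruct (eps_cont _ r0 C2 (Rabs w0 / 2) ltac:(lra)) as [e4 [he4 He4]].
      rewrite <- hv in He4. fold v0 in He3, He4. fold w0 in He3, He4.
      set (db := Rmin (Rmin (da / 2) 1) (Rmin (e3 / 2) (e4 / 2))).
      assert (hdb1 : db <= da / 2) by (eapply Rle_trans; [apply Rmin_l| apply Rmin_l]).
      assert (hdb2 : db <= 1) by (eapply Rle_trans; [apply Rmin_l| apply Rmin_r]).
      assert (hdb3 : db <= e3 / 2) by (eapply Rle_trans; [apply Rmin_r| apply Rmin_l]).
      assert (hdb4 : db <= e4 / 2) by (eapply Rle_trans; [apply Rmin_r| apply Rmin_r]).
      assert (hdb : 0 < db) by (unfold db; repeat apply Rmin_pos; lra).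
      exists (Rabs w0 / 2), (3 * Rabs w0 / 2), db.
      split. lra. split. lra. split; auto. split. lra.
      intros s hs.
      specialize (He3 s ltac:(rewrite Rabs_right; lra)). specialize (He4 s ltac:(rewrite Rabs_right; lra)).
      set (a1 := v1 s / s ^ (N - 1)) in *. set (a2 := v2 s / s ^ (N - 1)) in *.
      apply Rabs_def2 in He3. apply Rabs_def2 in He4.
      destruct (Rlt_dec 0 w0) as [wp|wn].
      + rewrite Rabs_right in * by lra. rewrite (Rabs_right a1) by lra. rewrite (Rabs_right a2) by lra.
        split. nra. split; split; nra.
      + rewrite Rabs_left in * by lra. rewrite (Rabs_left a1) by lra. rewrite (Rabs_left a2) by lra.
        split. nra. split; split; nra. }
  destruct Hb as [c [Wm [db [hc [hW [hdb [hdba Hb]]]]]]].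
  destruct (choose_small (conj_exp p) L (Rpower c (conj_exp p - 2)) (Rpower Wm (conj_exp p - 2)) Hpp hL
             ltac:(left; apply Rpower_gt0) ltac:(left; apply Rpower_gt0) db hdb) as [dl [hdl [hdl2 Hdl]]].
  exists dl. split; auto.
  apply (contraction_core p N g R1 d u1 v1 u2 v2 rs1 rs2 hp hR1 Hs1 Hs2 r0 dl L c Wm); auto; try lra.
  - intros s hs. apply H1. lra.
  - intros s hs. apply Hb. lra.
Qed.

End Two2.

Open Scope R_scope.

Theorem uniq_g (p : R) (N : nat) (g : R -> R) (R1 d : R) (u1 v1 u2 v2 : R -> R) (rs1 rs2 K : R) :
  1 < p -> (1 <= N)%nat -> 0 <= R1 -> gprop g -> 0 < K ->
  (forall s, Rabs s <= 1 -> Rabs (g s) <= K * apow (Rabs s) (p - 1)) ->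
  (forall a b, 0 < a -> a <= b -> exists L, 0 <= L /\
     forall x y, a <= x <= b -> a <= y <= b -> Rabs (g x - g y) <= L * Rabs (x - y)) ->
  0 <= d <= 1 ->
  is_sol_g p N g R1 d u1 v1 rs1 -> is_sol_g p N g R1 d u2 v2 rs2 ->
  forall r, R1 <= r -> r < rs1 -> r < rs2 -> u1 r = u2 r /\ v1 r = v2 r.
Proof.
  intros hp hN hR1 Hg hK Hgrow Hlip hd Hs1 Hs2.
  destruct (Req_dec d 1) as [hd1|hd1].
  { intros r h1 h2 h3.
    destruct (d1_zero p N g R1 d u1 v1 rs1 hp hR1 Hs1 K hK Hgrow hd1 r ltac:(lra)).
    destruct (d1_zero p N g R1 d u2 v2 rs2 hp hR1 Hs2 K hK Hgrow hd1 r ltac:(lra)). split; congruence. }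
  destruct (Req_dec d 0) as [hd0|hd0].
  { intros r h1 h2 h3.
    assert (E1 := sol_u0 p N g R1 d u1 v1 rs1 Hs1). assert (E2 := sol_u0 p N g R1 d u2 v2 rs2 Hs2).
    assert (F1 := sol_v0 p N g R1 d u1 v1 rs1 Hs1). assert (F2 := sol_v0 p N g R1 d u2 v2 rs2 Hs2).
    destruct (state_one p N g R1 d u1 v1 rs1 hp hR1 Hg Hs1 R1 ltac:(lra) ltac:(lra) F1 r ltac:(lra)).
    destruct (state_one p N g R1 d u2 v2 rs2 hp hR1 Hg Hs2 R1 ltac:(lra) ltac:(lra) F2 r ltac:(lra)). split; congruence. }
  assert (hR1s1 := sol_rs p N g R1 d u1 v1 rs1 Hs1). assert (hR1s2 := sol_rs p N g R1 d u2 v2 rs2 Hs2).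
  intros r h1 h2 h3.
  assert (hm1 := Rmin_l rs1 rs2). assert (hm2 := Rmin_r rs1 rs2).
  assert (Hr : R1 <= r < Rmin rs1 rs2) by (split; auto; unfold Rmin; destruct (Rle_dec rs1 rs2); lra).
  clear h1 h2 h3. revert r Hr.
  assert (Hmin : R1 < Rmin rs1 rs2) by (unfold Rmin; destruct (Rle_dec rs1 rs2); lra).
  apply (cont_induction (fun x => u1 x = u2 x /\ v1 x = v2 x) R1 (Rmin rs1 rs2) Hmin).
  - rewrite (sol_u0 p N g R1 d u1 v1 rs1 Hs1), (sol_u0 p N g R1 d u2 v2 rs2 Hs2).
    rewrite (sol_v0 p N g R1 d u1 v1 rs1 Hs1), (sol_v0 p N g R1 d u2 v2 rs2 Hs2). auto.
  - intros r0 hr0 HQ. destruct (HQ r0 ltac:(lra)) as [hu hv].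
    assert (hr1 : r0 < rs1) by lra. assert (hr2 : r0 < rs2) by lra.
    assert (hu0 : 0 < u1 r0).
    { destruct (Rlt_dec 0 (u1 r0)) as [|hn]; auto. exfalso.
      assert (HE := En_le p N g R1 d u1 v1 rs1 hp hR1 Hg Hs1 r0 ltac:(lra)). unfold En in HE.
      rewrite (G_neg g (u1 r0) Hg ltac:(lra)) in HE.
      assert (Hl := G_lt0 g (1 - d) Hg ltac:(lra)).
      assert (0 <= apow (Rabs (v1 r0 / r0 ^ (N - 1))) (conj_exp p)) by apply apow_ge0.
      assert (0 < (p - 1) / p) by (apply Rdiv_lt_0_compat; lra). nra. }
    destruct (Classical_Prop.classic (u1 r0 = 1 /\ v1 r0 = 0)) as [[e1 e2]|hn].
    + exists 1. split. lra. intros x hx hxc.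
      destruct (state_one p N g R1 d u1 v1 rs1 hp hR1 Hg Hs1 r0 ltac:(lra) e1 e2 x ltac:(lra)).
      destruct (state_one p N g R1 d u2 v2 rs2 hp hR1 Hg Hs2 r0 ltac:(lra) ltac:(lra) ltac:(lra) x ltac:(lra)).
      split; congruence.
    + destruct (local_step p N g R1 d u1 v1 u2 v2 rs1 rs2 hp hN hR1 Hg Hs1 Hs2 Hlip r0 ltac:(lra) hr1 hr2 hu hv hu0 hn)
        as [dl [hdl Hdl]].
      exists dl. split; [auto|]. intros x hx _. apply Hdl; auto.
  - intros r0 hr0 HQ. split.
    + assert (H := cont_left_zero (fun y => u1 y - u2 y) R1 r0 ltac:(lra)).
      simpl in H. assert (u1 r0 - u2 r0 = 0); [|lra]. apply H.
      apply contR_minus. apply (sol_cu p N g R1 d u1 v1 rs1 hR1 Hs1); lra. apply (sol_cu p N g R1 d u2 v2 rs2 hR1 Hs2); lra.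
      intros y hy. destruct (HQ y hy). lra.
    + assert (H := cont_left_zero (fun y => v1 y - v2 y) R1 r0 ltac:(lra)).
      simpl in H. assert (v1 r0 - v2 r0 = 0); [|lra]. apply H.
      apply contR_minus. apply (sol_cv p N g R1 d u1 v1 rs1 hR1 Hs1); lra. apply (sol_cv p N g R1 d u2 v2 rs2 hR1 Hs2); lra.
      intros y hy. destruct (HQ y hy). lra.
Qed.

Open Scope R_scope.

Section Fhat.
Variables (p : R) (f : R -> R).
Hypothesis hp : 1 < p.
Hypothesis Hreg : f_reg f.
Hypothesis Heq : f_eq f.
Hypothesis H0 : f_0 p f.

Lemma fhat_pos s : 0 <= s -> fhat f s = f s.
Proof. intros h. unfold fhat. destruct (Rle_dec 0 s); [auto|lra]. Qed.
Lemma fhat_neg s : s < 0 -> fhat f s = 0.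
Proof. intros h. unfold fhat. destruct (Rle_dec 0 s); [lra|auto]. Qed.

Lemma f_cont_pos s : 0 < s -> continuous f s.
Proof. intros h. destruct Hreg as [_ H]. destruct (H s h) as [[l Hl] _]. apply (derive_cont f s l Hl). Qed.

Lemma fhat_cont s : continuous (fhat f) s.
Proof.
  destruct (Rtotal_order s 0) as [h|[h|h]].
  - apply contR_ext_loc with (fun _ => 0). apply (loc_impl s (fun y => y < 0)). apply loc_neg; auto.
    intros y hy. rewrite fhat_neg; auto. apply contR_const.
  - subst. apply cont_eps. intros eps he. destruct Hreg as [Hr _].
    assert (Hr' := filterlim_rcont f 0 Hr). destruct (Hr' eps he) as [dl [hdl Hdl]].
    exists dl. split; auto. intros y hy. rewrite (fhat_pos 0) by lra. destruct Heq as [e0 _]. rewrite e0.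
    destruct (Rlt_dec y 0). rewrite fhat_neg by auto. rewrite Rminus_0_r, Rabs_R0; auto.
    rewrite fhat_pos by lra. rewrite <- e0. apply Hdl. rewrite Rminus_0_r in hy. apply Rabs_def2 in hy. lra.
  - apply contR_ext_loc with f. apply (loc_impl s (fun y => 0 < y)). apply loc_pos; auto.
    intros y hy. rewrite fhat_pos; lra. apply f_cont_pos; auto.
Qed.

Lemma fhat_gprop : gprop (fhat f).
Proof.
  destruct Heq as [e0 [e1 [Hn Hp]]].
  split. apply fhat_cont. split.
  intros s hs. destruct (Req_dec s 0) as [->|]. rewrite fhat_pos; lra. apply fhat_neg; lra.
  split. rewrite fhat_pos; lra. split.
  intros s hs. rewrite fhat_pos by lra. apply Hn; auto.
  intros s hs. rewrite fhat_pos by lra. apply Hp; auto.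
Qed.

Lemma fhat_lip : forall a b, 0 < a -> a <= b -> exists L, 0 <= L /\
     forall x y, a <= x <= b -> a <= y <= b -> Rabs (fhat f x - fhat f y) <= L * Rabs (x - y).
Proof.
  intros a b ha hab. destruct Hreg as [_ Hd].
  destruct (continuity_ab_maj (fun s => Rabs (Derive f s)) a b hab) as [m [Hm hm]].
  { intros c hc. apply continuity_pt_filterlim. apply contR_abs. apply Hd. lra. }
  exists (Rabs (Derive f m)). split. apply Rabs_pos.
  intros x y hx hy. rewrite !fhat_pos by lra.
  destruct (MVT_gen f y x (Derive f)) as [c [hc Hc]].
  { intros z hz. apply Derive_correct. apply Hd. unfold Rmin, Rmax in hz. destruct (Rle_dec y x); lra. }
  { intros z hz. apply continuity_pt_filterlim. apply f_cont_pos. unfold Rmin, Rmax in hz. destruct (Rle_dec y x); lra. }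
  rewrite Hc, Rabs_mult. apply Rmult_le_compat_r. apply Rabs_pos. apply Hm.
  unfold Rmin, Rmax in hc. destruct (Rle_dec y x); lra.
Qed.

Lemma fhat_bound a b : a <= b -> exists B, 0 <= B /\ forall s, a <= s <= b -> Rabs (fhat f s) <= B.
Proof.
  intros hab. destruct (continuity_ab_maj (fun s => Rabs (fhat f s)) a b hab) as [m [Hm hm]].
  { intros c hc. apply continuity_pt_filterlim. apply contR_abs. apply fhat_cont. }
  exists (Rabs (fhat f m)). split. apply Rabs_pos. auto.
Qed.

Lemma fhat_grow : exists K, 0 < K /\ forall s, Rabs s <= 1 -> Rabs (fhat f s) <= K * apow (Rabs s) (p - 1).
Proof.
  destruct H0 as [C0 [hC0 Hlim]].
  assert (Hl := proj1 (filterlim_locally _ (- C0)) Hlim (mkposreal 1 Rlt_0_1)).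
  destruct Hl as [[e he] He]. simpl in He.
  set (eta := Rmin (e / 2) 1).
  assert (heta : 0 < eta) by (apply Rmin_pos; lra).
  assert (heta1 : eta <= e / 2) by apply Rmin_l. assert (heta2 : eta <= 1) by apply Rmin_r.
  destruct (fhat_bound 0 1 ltac:(lra)) as [B [hB HB]].
  assert (hPe : 0 < Rpower eta (p - 1)) by apply Rpower_gt0.
  exists (C0 + 1 + B / Rpower eta (p - 1)). split.
  { assert (0 <= B / Rpower eta (p - 1)) by (apply Rdiv_le_0_compat; lra). lra. }
  intros s hs. destruct (Rle_dec s 0) as [hs0|hs0].
  { assert (0 <= B / Rpower eta (p - 1)) by (apply Rdiv_le_0_compat; lra).
    assert (0 <= apow (Rabs s) (p - 1)) by apply apow_ge0.
    destruct (Req_dec s 0) as [->|].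
    - rewrite fhat_pos by lra. destruct Heq as [e0 _]. rewrite e0, Rabs_R0, apow_zero. lra.
    - rewrite fhat_neg by lra. rewrite Rabs_R0. nra. }
  rewrite (Rabs_right s) in hs |- * by lra. rewrite apow_pos by lra. rewrite fhat_pos by lra.
  assert (hPs : 0 < Rpower s (p - 1)) by apply Rpower_gt0.
  assert (0 <= B / Rpower eta (p - 1)) by (apply Rdiv_le_0_compat; lra).
  destruct (Rlt_dec s eta) as [hse|hse].
  - specialize (He s). assert (Hb : ball 0 e s) by (apply ballR; rewrite Rminus_0_r, Rabs_right; lra).
    specialize (He Hb ltac:(lra)).
    assert (He' : Rabs (f s / Rpower s (p - 1) - - C0) < 1) by exact He.
    apply Rabs_def2 in He'.
    assert (HH : Rabs (f s / Rpower s (p - 1)) <= C0 + 1).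
    { apply Rabs_le. lra. }
    unfold Rdiv in HH. rewrite Rabs_mult, Rabs_inv, (Rabs_right (Rpower s (p - 1))) in HH by lra.
    assert (Rabs (f s) <= (C0 + 1) * Rpower s (p - 1)).
    { apply (Rmult_le_reg_r (/ Rpower s (p - 1))). apply Rinv_0_lt_compat; auto.
      rewrite Rmult_assoc, Rinv_r, Rmult_1_r by lra. auto. }
    nra.
  - assert (Rpower eta (p - 1) <= Rpower s (p - 1)) by (apply Rpower_le_l; lra).
    specialize (HB s ltac:(lra)). rewrite fhat_pos in HB by lra.
    assert (B <= B / Rpower eta (p - 1) * Rpower s (p - 1)).
    { unfold Rdiv. replace B with (B * / Rpower eta (p - 1) * Rpower eta (p - 1)) at 1 by (field; lra).
      apply Rmult_le_compat_l; [apply Rmult_le_pos; [auto| left; apply Rinv_0_lt_compat; auto] | auto]. }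
    nra.
Qed.

End Fhat.

Open Scope R_scope.

Lemma Rabs_le_inv' a b : Rabs a <= b -> - b <= a <= b.
Proof. intros H. assert (- a <= Rabs a) by (rewrite <- Rabs_Ropp; apply Rle_abs). assert (a <= Rabs a) by apply Rle_abs. lra. Qed.

Definition extr (s : nat -> nat) := forall n, (s n < s (S n))%nat.

Lemma extr_ge s : extr s -> forall n, (n <= s n)%nat.
Proof. intros H n. induction n. lia. specialize (H n). lia. Qed.

Lemma extr_mono s : extr s -> forall n m, (n <= m)%nat -> (s n <= s m)%nat.
Proof. intros H n m hnm. induction hnm. lia. specialize (H m). lia. Qed.

Lemma extr_comp s t : extr s -> extr t -> extr (fun n => s (t n)).
Proof.
  intros Hs Ht n. assert (H := Ht n). assert (H2 := extr_mono s Hs (S (t n)) (t (S n)) H).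
  specialize (Hs (t n)). lia.
Qed.

Lemma extr_id : extr (fun n => n).
Proof. intros n; lia. Qed.

Definition conv (u : nat -> R) (l : R) := forall eps, 0 < eps -> exists N, forall n, (N <= n)%nat -> Rabs (u n - l) < eps.

Lemma conv_extr u l s : extr s -> conv u l -> conv (fun n => u (s n)) l.
Proof.
  intros Hs H eps he. destruct (H eps he) as [N HN]. exists N. intros n hn. apply HN.
  assert (H1 := extr_ge s Hs n). lia.
Qed.

Lemma BW_extr (x : nat -> R) B : (forall n, Rabs (x n) <= B) -> exists s l, extr s /\ conv (fun n => x (s n)) l.
Proof.
  intros HB. destruct (Bolzano_Weierstrass x (fun c => - B <= c <= B) (compact_P3 (- B) B)) as [l Hl].
  { intros n. specialize (HB n). apply Rabs_le_inv' in HB. auto. }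
  assert (Hpick : forall m k : nat, exists p, (m <= p)%nat /\ Rabs (x p - l) < / (INR k + 1)).
  { intros m k. assert (hk : 0 < / (INR k + 1)) by (apply Rinv_0_lt_compat; assert (0 <= INR k) by apply pos_INR; lra).
    destruct (Hl (disc l (mkposreal _ hk)) m) as [p [hp Hp]].
    { exists (mkposreal _ hk). intros y hy. auto. }
    exists p. split; auto. }
  set (pick := fun m k => proj1_sig (constructive_indefinite_description _ (Hpick m k))).
  assert (Hpk : forall m k, (m <= pick m k)%nat /\ Rabs (x (pick m k) - l) < / (INR k + 1)).
  { intros m k. unfold pick. destruct (constructive_indefinite_description _ (Hpick m k)) as [p Hp]. auto. }
  set (s := fix s (n : nat) : nat := match n with O => pick O O | S n' => pick (S (s n')) (S n') end).
  exists s, l. split.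
  - intros n. simpl. destruct (Hpk (S (s n)) (S n)). lia.
  - intros eps he. destruct (archimed (/ eps)) as [h1 _].
    assert (0 < / eps) by (apply Rinv_0_lt_compat; auto).
    set (N := Z.to_nat (up (/ eps))). exists N. intros n hn.
    assert (Hs : Rabs (x (s n) - l) < / (INR n + 1)).
    { destruct n. simpl. apply (Hpk O O). simpl. apply (Hpk (S (s n)) (S n)). }
    eapply Rlt_le_trans. apply Hs.
    assert (INR N <= INR n) by (apply le_INR; auto).
    assert (/ eps < INR N + 1).
    { unfold N. rewrite INR_IZR_INZ. rewrite Z2Nat.id. lra.
      apply le_IZR. lra. }
    assert (0 < INR n + 1) by (assert (0 <= INR n) by apply pos_INR; lra).
    rewrite <- (Rinv_inv eps). apply Rinv_le_contravar. auto. lra.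
Qed.

Lemma nearest_int (n : nat) (y : R) : 0 <= y <= INR n -> exists i, (i <= n)%nat /\ Rabs (y - INR i) <= 1.
Proof.
  induction n as [|n IH]; intros hy.
  - exists O. split. lia. simpl in *. rewrite Rminus_0_r, Rabs_right; lra.
  - rewrite S_INR in hy. destruct (Rle_dec y (INR n)).
    + destruct (IH ltac:(lra)) as [i [hi Hi]]. exists i. split; auto.
    + exists (S n). split. lia. rewrite S_INR. rewrite Rabs_left1 by lra. lra.
Qed.

Section Asc.
Variables (h : nat -> R -> R) (a b B L : R).
Hypothesis hab : a <= b.
Hypothesis hL : 0 <= L.
Hypothesis HB : forall n x, a <= x <= b -> Rabs (h n x) <= B.
Hypothesis HL : forall n x y, a <= x <= b -> a <= y <= b -> Rabs (h n x - h n y) <= L * Rabs (x - y).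

Lemma finite_conv (pts : list R) : (forall x, In x pts -> a <= x <= b) -> forall s0 : nat -> nat,
  exists s, extr s /\ forall x, In x pts -> exists l, conv (fun n => h (s0 (s n)) x) l.
Proof.
  induction pts as [|x pts IH]; intros Hp s0.
  - exists (fun n => n). split. apply extr_id. intros x [].
  - destruct (IH ltac:(intros; apply Hp; right; auto) s0) as [s1 [Hs1 Hc1]].
    destruct (BW_extr (fun n => h (s0 (s1 n)) x) B) as [s2 [l [Hs2 Hc2]]].
    { intros n. apply HB. apply Hp. left; auto. }
    exists (fun n => s1 (s2 n)). split. apply extr_comp; auto.
    intros y [<-|hy]. exists l; auto.
    destruct (Hc1 y hy) as [l' Hl']. exists l'. apply (conv_extr (fun n => h (s0 (s1 n)) y) l' s2 Hs2 Hl').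
Qed.

Definition UC (k : nat -> R -> R) (eps : R) := exists N, forall n m, (N <= n)%nat -> (N <= m)%nat ->
  forall x, a <= x <= b -> Rabs (k n x - k m x) <= eps.

Lemma finite_N (pts : list R) (k : nat -> R -> R) eps : 0 < eps ->
  (forall x, In x pts -> exists l, conv (fun n => k n x) l) ->
  exists N, forall x, In x pts -> forall n m, (N <= n)%nat -> (N <= m)%nat -> Rabs (k n x - k m x) < eps.
Proof.
  intros he. induction pts as [|x pts IH]; intros Hc.
  - exists O. intros x [].
  - destruct IH as [N1 HN1]. intros; apply Hc; right; auto.
    destruct (Hc x (or_introl eq_refl)) as [l Hl]. destruct (Hl (eps/2) ltac:(lra)) as [N2 HN2].
    exists (max N1 N2). intros y [<-|hy] n m hn hm.
    + assert (H2 := HN2 n ltac:(lia)). assert (H3 := HN2 m ltac:(lia)).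
      replace (k n x - k m x) with ((k n x - l) - (k m x - l)) by ring.
      eapply Rle_lt_trans. apply Rabs_triang. rewrite Rabs_Ropp. lra.
    + apply HN1; auto; lia.
Qed.

Lemma level eps : 0 < eps -> forall s0 : nat -> nat, exists s, extr s /\ UC (fun n => h (s0 (s n))) eps.
Proof.
  intros he s0.
  destruct (archimed (3 * L * (b - a) / eps)) as [hK _].
  set (K := S (Z.to_nat (up (3 * L * (b - a) / eps)))).
  assert (hK1 : 3 * L * (b - a) / eps < INR K).
  { unfold K. rewrite S_INR. destruct (Z_le_gt_dec 0 (up (3 * L * (b - a) / eps))) as [hz|hz].
    - rewrite INR_IZR_INZ, Z2Nat.id by auto. lra.
    - assert (0 <= INR (Z.to_nat (up (3 * L * (b - a) / eps)))) by apply pos_INR.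
      assert (IZR (up (3 * L * (b - a) / eps)) < 0) by (apply IZR_lt; lia). lra. }
  assert (hKp : 0 < INR K) by (unfold K; rewrite S_INR; assert (0 <= INR (Z.to_nat (up (3 * L * (b - a) / eps)))) by apply pos_INR; lra).
  set (pts := map (fun i => a + (b - a) * INR i / INR K) (seq 0 (S K))).
  assert (Hpts : forall x, In x pts -> a <= x <= b).
  { intros x hx. unfold pts in hx. apply in_map_iff in hx. destruct hx as [i [<- hi]].
    apply in_seq in hi. assert (INR i <= INR K) by (apply le_INR; lia).
    assert (0 <= INR i) by apply pos_INR.
    assert (0 <= (b - a) * INR i / INR K <= b - a).
    { split. apply Rdiv_le_0_compat; [apply Rmult_le_pos|]; lra.
      apply (Rmult_le_reg_r (INR K)); auto. unfold Rdiv. rewrite Rmult_assoc, Rinv_l, Rmult_1_r by lra. nra. }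
    lra. }
  destruct (finite_conv pts Hpts s0) as [s [Hs Hc]].
  destruct (finite_N pts (fun n x => h (s0 (s n)) x) (eps / 3) ltac:(lra) Hc) as [N HN].
  exists s. split; auto. exists N. intros n m hn hm x hx.
  assert (Hnear : exists i, (i <= K)%nat /\ Rabs (x - (a + (b - a) * INR i / INR K)) <= (b - a) / INR K).
  { destruct (Req_dec a b) as [E|hne].
    - exists O. split. lia. rewrite E in *. replace x with b by lra.
      replace (b + (b - b) * INR 0 / INR K) with b by (field; lra). rewrite Rminus_eq_0, Rabs_R0.
      right. field. lra.
    - destruct (nearest_int K ((x - a) / (b - a) * INR K)) as [i [hi Hi]].
      { split. apply Rmult_le_pos. apply Rdiv_le_0_compat; lra. lra.
        rewrite <- (Rmult_1_l (INR K)) at 2. apply Rmult_le_compat_r. lra.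
        apply (Rmult_le_reg_r (b - a)). lra. unfold Rdiv. rewrite Rmult_assoc, Rinv_l by lra. lra. }
      exists i. split; auto.
      replace (x - (a + (b - a) * INR i / INR K)) with ((b - a) / INR K * ((x - a) / (b - a) * INR K - INR i)) by (field; split; lra).
      rewrite Rabs_mult, (Rabs_right ((b - a) / INR K)) by (apply Rle_ge, Rdiv_le_0_compat; lra).
      rewrite <- (Rmult_1_r ((b - a) / INR K)) at 2. apply Rmult_le_compat_l. apply Rdiv_le_0_compat; lra. auto. }
  destruct Hnear as [i [hi Hi]].
  set (xi := a + (b - a) * INR i / INR K) in *.
  assert (Hin : In xi pts). { unfold pts, xi. apply (in_map (fun i => a + (b - a) * INR i / INR K)). apply in_seq. lia. }
  assert (Hxi := Hpts xi Hin).
  assert (H1 := HN xi Hin n m hn hm). simpl in H1.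
  assert (H2 := HL (s0 (s n)) x xi hx Hxi). assert (H3 := HL (s0 (s m)) x xi hx Hxi).
  assert (HLe : L * Rabs (x - xi) <= eps / 3).
  { eapply Rle_trans. apply Rmult_le_compat_l. auto. apply Hi.
    apply (Rmult_le_reg_r (INR K)). auto. unfold Rdiv. rewrite Rmult_assoc, Rmult_assoc, Rinv_l, Rmult_1_r by lra.
    assert (3 * L * (b - a) * / eps * eps < INR K * eps) by (apply Rmult_lt_compat_r; auto).
    replace (3 * L * (b - a) * / eps * eps) with (3 * (L * (b - a))) in H by (field; lra). lra. }
  replace (h (s0 (s n)) x - h (s0 (s m)) x) with ((h (s0 (s n)) x - h (s0 (s n)) xi) + (h (s0 (s n)) xi - h (s0 (s m)) xi) - (h (s0 (s m)) x - h (s0 (s m)) xi)) by ring.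
  eapply Rle_trans. apply Rabs_triang. rewrite Rabs_Ropp.
  assert (Rabs (h (s0 (s n)) x - h (s0 (s n)) xi + (h (s0 (s n)) xi - h (s0 (s m)) xi)) <= Rabs (h (s0 (s n)) x - h (s0 (s n)) xi) + Rabs (h (s0 (s n)) xi - h (s0 (s m)) xi)) by apply Rabs_triang.
  lra.
Qed.

Definition lev (m : nat) (s0 : nat -> nat) : nat -> nat :=
  epsilon (inhabits (fun n => n)) (fun s => extr s /\ UC (fun n => h (s0 (s n))) (/ (INR m + 1))).

Lemma lev_spec m s0 : extr (lev m s0) /\ UC (fun n => h (s0 (lev m s0 n))) (/ (INR m + 1)).
Proof.
  unfold lev. apply epsilon_spec. apply level.
  apply Rinv_0_lt_compat. assert (0 <= INR m) by apply pos_INR. lra.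
Qed.

Fixpoint Phi (m : nat) : nat -> nat :=
  match m with
  | O => lev O (fun n => n)
  | S m' => fun n => Phi m' (lev (S m') (Phi m') n)
  end.

Lemma Phi_extr m : extr (Phi m).
Proof.
  induction m; simpl. apply (lev_spec O (fun n => n)).
  apply extr_comp; auto. apply lev_spec.
Qed.

Lemma Phi_UC m : UC (fun n => h (Phi m n)) (/ (INR m + 1)).
Proof. destruct m; simpl. apply (lev_spec O (fun n => n)). apply (lev_spec (S m) (Phi m)). Qed.

Lemma Phi_tail m dd n : exists k, (n <= k)%nat /\ Phi (m + dd) n = Phi m k.
Proof.
  revert n. induction dd; intros n. exists n. split. lia. rewrite Nat.add_0_r. auto.
  rewrite Nat.add_succ_r. simpl. destruct (IHdd (lev (S (m + dd)) (Phi (m + dd)) n)) as [k [hk Hk]].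
  exists k. split; auto. assert (H := extr_ge _ (proj1 (lev_spec (S (m + dd)) (Phi (m + dd)))) n). lia.
Qed.

Definition psi (n : nat) := Phi n n.

Lemma psi_extr : extr psi.
Proof.
  intros n. unfold psi. simpl. assert (H := proj1 (lev_spec (S n) (Phi n))).
  assert (H1 := extr_ge _ H (S n)). assert (H2 := extr_mono _ (Phi_extr n) (S n) (lev (S n) (Phi n) (S n)) H1).
  assert (H3 := Phi_extr n n). lia.
Qed.

Lemma psi_UC m : UC (fun n => h (psi n)) (/ (INR m + 1)).
Proof.
  destruct (Phi_UC m) as [N HN]. exists (max m N). intros n n' hn hn' x hx. unfold psi.
  destruct (Phi_tail m (n - m) n) as [k [hk Hk]]. destruct (Phi_tail m (n' - m) n') as [k' [hk' Hk']].
  replace (m + (n - m))%nat with n in Hk by lia. replace (m + (n' - m))%nat with n' in Hk' by lia.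
  rewrite Hk, Hk'. apply HN; auto; lia.
Qed.

Definition alim (x : R) : R := epsilon (inhabits 0) (fun l => conv (fun n => h (psi n) x) l).

Lemma alim_conv x : a <= x <= b -> conv (fun n => h (psi n) x) (alim x).
Proof.
  intros hx. unfold alim. apply epsilon_spec.
  assert (Hc : Cauchy_crit (fun n => h (psi n) x)).
  { intros eps he. destruct (archimed (/ eps)) as [hA _].
    set (m := Z.to_nat (up (/ eps))).
    assert (hm : / (INR m + 1) < eps).
    { assert (0 < / eps) by (apply Rinv_0_lt_compat; auto).
      assert (/ eps < INR m + 1).
      { unfold m. destruct (Z_le_gt_dec 0 (up (/ eps))).
        rewrite INR_IZR_INZ, Z2Nat.id by auto. lra.
        assert (IZR (up (/ eps)) < 0) by (apply IZR_lt; lia). lra. }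
      rewrite <- (Rinv_inv eps). apply Rinv_lt_contravar. apply Rmult_lt_0_compat; lra. auto. }
    destruct (psi_UC m) as [N HN]. exists N. intros n n' hn hn'. unfold Rdist.
    eapply Rle_lt_trans. apply HN; auto. auto. }
  destruct (Rcomplete.R_complete _ Hc) as [l Hl]. exists l. intros eps he. destruct (Hl eps he) as [N HN].
  exists N. intros n hn. apply HN. lia.
Qed.

Theorem ascoli : exists (s : nat -> nat) (ph : R -> R), extr s /\
  forall eps, 0 < eps -> exists N, forall n, (N <= n)%nat -> forall x, a <= x <= b -> Rabs (h (s n) x - ph x) <= eps.
Proof.
  exists psi, alim. split. apply psi_extr.
  intros eps he. destruct (archimed (/ eps)) as [hA _].
  set (m := Z.to_nat (up (/ eps))).
  assert (hm : / (INR m + 1) < eps).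
  { assert (0 < / eps) by (apply Rinv_0_lt_compat; auto).
    assert (/ eps < INR m + 1).
    { unfold m. destruct (Z_le_gt_dec 0 (up (/ eps))).
      rewrite INR_IZR_INZ, Z2Nat.id by auto. lra.
      assert (IZR (up (/ eps)) < 0) by (apply IZR_lt; lia). lra. }
    rewrite <- (Rinv_inv eps). apply Rinv_lt_contravar. apply Rmult_lt_0_compat; lra. auto. }
  destruct (psi_UC m) as [N HN]. exists N. intros n hn x hx.
  destruct (Rle_dec (Rabs (h (psi n) x - alim x)) eps) as [|hn']; auto. exfalso.
  set (eta := Rabs (h (psi n) x - alim x) - / (INR m + 1)).
  assert (heta : 0 < eta) by (unfold eta; lra).
  destruct (alim_conv x hx eta heta) as [N2 HN2].
  specialize (HN2 (max N N2) ltac:(lia)). specialize (HN n (max N N2) hn ltac:(lia) x hx).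
  assert (Rabs (h (psi n) x - alim x) <= Rabs (h (psi n) x - h (psi (max N N2)) x) + Rabs (h (psi (max N N2)) x - alim x)).
  { replace (h (psi n) x - alim x) with ((h (psi n) x - h (psi (max N N2)) x) + (h (psi (max N N2)) x - alim x)) by ring.
    apply Rabs_triang. }
  unfold eta in HN2. lra.
Qed.

End Asc.

Open Scope R_scope.

Definition uconv (Y : nat -> R -> R) (z : R -> R) (S : R -> Prop) :=
  forall eps, 0 < eps -> exists N, forall n, (N <= n)%nat -> forall y, S y -> Rabs (Y n y - z y) <= eps.

Lemma unif_comp (F : R -> R) (Y : nat -> R -> R) (z : R -> R) (S : R -> Prop) M :
  (forall x, continuous F x) -> uconv Y z S -> (forall y, S y -> Rabs (z y) <= M) ->
  uconv (fun n y => F (Y n y)) (fun y => F (z y)) S.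
Proof.
  intros HF HY HM eps he.
  destruct (Heine F (fun c => - (Rabs M + 1) <= c <= Rabs M + 1) (compact_P3 _ _)) with (mkposreal eps he) as [[dl hdl] Hdl].
  { intros x _. apply continuity_pt_filterlim. apply HF. }
  destruct (HY (Rmin (dl / 2) (1/2)) ltac:(apply Rmin_pos; lra)) as [N HN].
  exists N. intros n hn y hy. specialize (HN n hn y hy). specialize (HM y hy).
  assert (h1 := Rmin_l (dl/2) (1/2)). assert (h2 := Rmin_r (dl/2) (1/2)).
  assert (hM := Rle_abs M).
  left. apply (Hdl (Y n y) (z y)); simpl.
  - apply Rabs_le_inv'. replace (Y n y) with ((Y n y - z y) + z y) by ring.
    eapply Rle_trans. apply Rabs_triang. lra.
  - apply Rabs_le_inv'. lra.
  - lra.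
Qed.

Lemma uconv_scale (Y : nat -> R -> R) (z k : R -> R) (S : R -> Prop) C :
  0 < C -> uconv Y z S -> (forall y, S y -> Rabs (k y) <= C) -> uconv (fun n y => k y * Y n y) (fun y => k y * z y) S.
Proof.
  intros hC HY Hk eps he. destruct (HY (eps / C) ltac:(apply Rdiv_lt_0_compat; lra)) as [N HN].
  exists N. intros n hn y hy. rewrite <- Rmult_minus_distr_l, Rabs_mult.
  specialize (HN n hn y hy). specialize (Hk y hy).
  apply Rle_trans with (C * (eps / C)). apply Rmult_le_compat; auto; apply Rabs_pos.
  right; field; lra.
Qed.

Lemma deriv_limit (G Hd : nat -> R -> R) (gl hl : R -> R) (x0 c1 c2 : R) :
  c1 < x0 < c2 -> (forall n y, c1 < y < c2 -> is_derive (G n) y (Hd n y)) ->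
  (forall y, c1 < y < c2 -> conv (fun n => G n y) (gl y)) ->
  uconv Hd hl (fun y => c1 < y < c2) -> continuous hl x0 -> is_derive gl x0 (hl x0).
Proof.
  intros hx HG Hc Hu Hh. apply is_derive_Reals. intros eps he.
  destruct (eps_cont hl x0 Hh (eps/4) ltac:(lra)) as [dc [hdc Hdc]].
  set (dl := Rmin dc (Rmin (x0 - c1) (c2 - x0))).
  assert (h1 : dl <= dc) by apply Rmin_l.
  assert (h2 : dl <= x0 - c1) by (eapply Rle_trans; [apply Rmin_r|apply Rmin_l]).
  assert (h3 : dl <= c2 - x0) by (eapply Rle_trans; [apply Rmin_r|apply Rmin_r]).
  assert (hdl : 0 < dl) by (unfold dl; repeat apply Rmin_pos; lra).
  exists (mkposreal dl hdl). intros h hh0 hh. simpl in hh.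
  assert (hha : 0 < Rabs h) by (apply Rabs_pos_lt; auto).
  apply Rabs_def2 in hh as hh'.
  set (eta := eps / 8 * Rabs h).
  assert (heta : 0 < eta) by (unfold eta; apply Rmult_lt_0_compat; lra).
  destruct (Hc (x0 + h) ltac:(lra) eta heta) as [N1 HN1].
  destruct (Hc x0 ltac:(lra) eta heta) as [N2 HN2].
  destruct (Hu (eps/8) ltac:(lra)) as [N3 HN3].
  set (n := max N1 (max N2 N3)).
  specialize (HN1 n ltac:(lia)). specialize (HN2 n ltac:(lia)). simpl in HN1, HN2.
  destruct (MVT_gen (G n) x0 (x0 + h) (Hd n)) as [c [hc Hcc]].
  { intros y hy. apply HG. unfold Rmin, Rmax in hy. destruct (Rle_dec x0 (x0 + h)); lra. }
  { intros y hy. apply continuity_pt_filterlim. apply (derive_cont _ _ (Hd n y)). apply HG.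
    unfold Rmin, Rmax in hy. destruct (Rle_dec x0 (x0 + h)); lra. }
  assert (hc' : c1 < c < c2 /\ Rabs (c - x0) < dc).
  { unfold Rmin, Rmax in hc. destruct (Rle_dec x0 (x0 + h)); split; try lra; apply Rabs_def1; lra. }
  specialize (HN3 n ltac:(lia) c ltac:(lra)).
  specialize (Hdc c ltac:(lra)).
  replace (x0 + h - x0) with h in Hcc by ring.
  assert (E : (gl (x0 + h) - gl x0) / h - hl x0 =
    ((gl (x0 + h) - G n (x0 + h)) - (gl x0 - G n x0)) / h + (Hd n c - hl c) + (hl c - hl x0)).
  { assert (E2 : Hd n c = (G n (x0 + h) - G n x0) / h) by (rewrite Hcc; field; auto).
    rewrite E2. field. auto. }
  rewrite E.
  eapply Rle_lt_trans. apply Rabs_triang.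
  eapply Rle_lt_trans. apply Rplus_le_compat_r. apply Rabs_triang.
  assert (Rabs (((gl (x0 + h) - G n (x0 + h)) - (gl x0 - G n x0)) / h) <= eps / 4).
  { unfold Rdiv. rewrite Rabs_mult, Rabs_inv.
    apply (Rmult_le_reg_r (Rabs h)); auto. rewrite Rmult_assoc, Rinv_l, Rmult_1_r by lra.
    eapply Rle_trans. apply Rabs_triang. rewrite Rabs_Ropp.
    rewrite (Rabs_minus_sym (gl (x0 + h))), (Rabs_minus_sym (gl x0)). unfold eta in *. lra. }
  lra.
Qed.

Lemma conv_lip (U : nat -> R -> R) (u : R -> R) x y K :
  conv (fun n => U n x) (u x) -> conv (fun n => U n y) (u y) ->
  (forall n, Rabs (U n x - U n y) <= K) -> Rabs (u x - u y) <= K.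
Proof.
  intros Hx Hy HK. destruct (Rle_dec (Rabs (u x - u y)) K) as [|hn]; auto. exfalso.
  set (eta := (Rabs (u x - u y) - K) / 2).
  assert (heta : 0 < eta) by (unfold eta; lra).
  destruct (Hx eta heta) as [N1 H1]. destruct (Hy eta heta) as [N2 H2].
  specialize (H1 (max N1 N2) ltac:(lia)). specialize (H2 (max N1 N2) ltac:(lia)).
  specialize (HK (max N1 N2)).
  assert (Rabs (u x - u y) <= Rabs (U (max N1 N2) x - U (max N1 N2) y) + Rabs (U (max N1 N2) x - u x) + Rabs (U (max N1 N2) y - u y)).
  { replace (u x - u y) with ((U (max N1 N2) x - U (max N1 N2) y) - (U (max N1 N2) x - u x) + (U (max N1 N2) y - u y)) by ring.
    eapply Rle_trans. apply Rabs_triang. apply Rplus_le_compat_r.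
    eapply Rle_trans. apply Rabs_triang. rewrite Rabs_Ropp. lra. }
  unfold eta in *. lra.
Qed.

Lemma uconv_conv (Y : nat -> R -> R) z (S : R -> Prop) y : uconv Y z S -> S y -> conv (fun n => Y n y) (z y).
Proof.
  intros H hy eps he. destruct (H (eps/2) ltac:(lra)) as [N HN]. exists N. intros n hn.
  specialize (HN n hn y hy). lra.
Qed.

Lemma rcont_mult (f g : R -> R) a : rcont f a -> rcont g a -> rcont (fun x => f x * g x) a.
Proof.
  intros Hf Hg eps he.
  set (Mf := Rabs (f a) + 1). set (Mg := Rabs (g a) + 1).
  assert (hMf : 0 < Mf) by (unfold Mf; assert (0 <= Rabs (f a)) by apply Rabs_pos; lra).
  assert (hMg : 0 < Mg) by (unfold Mg; assert (0 <= Rabs (g a)) by apply Rabs_pos; lra).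
  destruct (Hf (Rmin 1 (eps / (2 * Mg))) ltac:(apply Rmin_pos; [lra|apply Rdiv_lt_0_compat; lra])) as [d1 [hd1 H1]].
  destruct (Hg (eps / (2 * Mf)) ltac:(apply Rdiv_lt_0_compat; lra)) as [d2 [hd2 H2]].
  exists (Rmin d1 d2). split. apply Rmin_pos; auto. intros x hx.
  assert (hm1 := Rmin_l d1 d2). assert (hm2 := Rmin_r d1 d2).
  specialize (H1 x ltac:(lra)). specialize (H2 x ltac:(lra)).
  assert (hr1 := Rmin_l 1 (eps / (2 * Mg))). assert (hr2 := Rmin_r 1 (eps / (2 * Mg))).
  replace (f x * g x - f a * g a) with (f x * (g x - g a) + g a * (f x - f a)) by ring.
  eapply Rle_lt_trans. apply Rabs_triang. rewrite !Rabs_mult.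
  assert (Rabs (f x) <= Mf).
  { unfold Mf. replace (f x) with ((f x - f a) + f a) by ring. eapply Rle_trans. apply Rabs_triang. lra. }
  assert (Rabs (g a) <= Mg) by (unfold Mg; lra).
  assert (Rabs (f x) * Rabs (g x - g a) <= Mf * (eps / (2 * Mf))).
  { apply Rmult_le_compat; try apply Rabs_pos; lra. }
  assert (Rabs (g a) * Rabs (f x - f a) <= Mg * (eps / (2 * Mg))).
  { apply Rmult_le_compat; try apply Rabs_pos; lra. }
  replace (Mf * (eps / (2 * Mf))) with (eps / 2) in H3 by (field; lra).
  replace (Mg * (eps / (2 * Mg))) with (eps / 2) in H4 by (field; lra).
  assert (Rabs (g x - g a) < eps / (2 * Mf)) by auto.
  assert (Rabs (f x) * Rabs (g x - g a) < eps / 2 \/ Rabs (f x) * Rabs (g x - g a) <= eps / 2) by lra.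
  destruct (Req_dec (Rabs (f x) * Rabs (g x - g a) + Rabs (g a) * Rabs (f x - f a)) eps).
  - exfalso.
    assert (Rabs (f x) * Rabs (g x - g a) < eps / 2).
    { destruct (Req_dec (Rabs (f x)) 0) as [E|E]. rewrite E; lra.
      apply Rle_lt_trans with (Mf * Rabs (g x - g a)). apply Rmult_le_compat_r; [apply Rabs_pos|lra].
      replace (eps / 2) with (Mf * (eps / (2 * Mf))) by (field; lra). apply Rmult_lt_compat_l; lra. }
    lra.
  - assert (Rabs (f x) * Rabs (g x - g a) < eps / 2).
    { destruct (Req_dec (Rabs (f x)) 0) as [E|E]. rewrite E; lra.
      apply Rle_lt_trans with (Mf * Rabs (g x - g a)). apply Rmult_le_compat_r; [apply Rabs_pos|lra].
      replace (eps / 2) with (Mf * (eps / (2 * Mf))) by (field; lra). apply Rmult_lt_compat_l; lra. }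
    lra.
Qed.

Lemma lip_cont (u : R -> R) a b K r : a < r < b -> 0 <= K ->
  (forall x y, a <= x <= b -> a <= y <= b -> Rabs (u x - u y) <= K * Rabs (x - y)) -> continuous u r.
Proof.
  intros hr hK H. apply cont_eps. intros eps he.
  exists (Rmin (eps / (K + 1)) (Rmin (r - a) (b - r))). split.
  repeat apply Rmin_pos; try lra. apply Rdiv_lt_0_compat; lra.
  intros y hy. assert (h1 := Rmin_l (eps / (K + 1)) (Rmin (r - a) (b - r))).
  assert (h2 := Rmin_r (eps / (K + 1)) (Rmin (r - a) (b - r))).
  assert (h3 := Rmin_l (r - a) (b - r)). assert (h4 := Rmin_r (r - a) (b - r)).
  apply Rabs_def2 in hy as hy'.
  eapply Rle_lt_trans. apply H; lra.
  apply Rle_lt_trans with (K * (eps / (K + 1))). apply Rmult_le_compat_l; lra.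
  apply Rlt_le_trans with ((K + 1) * (eps / (K + 1))). apply Rmult_lt_compat_r. apply Rdiv_lt_0_compat; lra. lra.
  right; field; lra.
Qed.

Lemma lip_rcont (u : R -> R) a b K : a < b -> 0 <= K ->
  (forall x y, a <= x <= b -> a <= y <= b -> Rabs (u x - u y) <= K * Rabs (x - y)) -> rcont u a.
Proof.
  intros hab hK H eps he. exists (Rmin (eps / (K + 1)) (b - a)). split.
  apply Rmin_pos; try lra. apply Rdiv_lt_0_compat; lra.
  intros x hx. assert (h1 := Rmin_l (eps / (K + 1)) (b - a)). assert (h2 := Rmin_r (eps / (K + 1)) (b - a)).
  eapply Rle_lt_trans. apply H; lra. rewrite Rabs_right by lra.
  apply Rle_lt_trans with (K * (eps / (K + 1))). apply Rmult_le_compat_l; lra.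
  apply Rlt_le_trans with ((K + 1) * (eps / (K + 1))). apply Rmult_lt_compat_r. apply Rdiv_lt_0_compat; lra. lra.
  right; field; lra.
Qed.

Lemma limit_sol (p : R) (N : nat) (g : R -> R) (R1 b d : R) (U V A Bd : nat -> R -> R) (u v : R -> R) (Lu Bv : R) :
  1 < p -> 0 <= R1 -> R1 < b -> (forall s, continuous g s) -> 0 <= Lu ->
  u R1 = 1 - d -> v R1 = 0 ->
  (forall x, R1 <= x <= b -> conv (fun n => U n x) (u x)) ->
  (forall x, R1 <= x <= b -> conv (fun n => V n x) (v x)) ->
  (forall n x y, R1 <= x <= b -> R1 <= y <= b -> Rabs (U n x - U n y) <= Lu * Rabs (x - y)) ->
  (forall n x y, R1 <= x <= b -> R1 <= y <= b -> Rabs (V n x - V n y) <= Lu * Rabs (x - y)) ->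
  (forall n y, R1 < y < b -> is_derive (U n) y (A n y) /\ is_derive (V n) y (Bd n y)) ->
  (forall c1 c2, R1 < c1 -> c1 < c2 -> c2 < b ->
     uconv A (fun y => phi_p_inv p (v y / y ^ (N - 1))) (fun y => c1 < y < c2) /\
     uconv Bd (fun y => - (y ^ (N - 1) * g (u y))) (fun y => c1 < y < c2)) ->
  (forall x, R1 < x < b -> Rabs (v x) <= Bv * x ^ (N - 1) * (x - R1)) ->
  is_sol_g p N g R1 d u v b.
Proof.
  intros hp hR1 hb Hgc hLu Hu0 Hv0 HcU HcV HLU HLV Hd Hf Hvb.
  assert (Lip_u : forall x y, R1 <= x <= b -> R1 <= y <= b -> Rabs (u x - u y) <= Lu * Rabs (x - y)).
  { intros x y hx hy. apply (conv_lip U u x y); auto. }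
  assert (Lip_v : forall x y, R1 <= x <= b -> R1 <= y <= b -> Rabs (v x - v y) <= Lu * Rabs (x - y)).
  { intros x y hx hy. apply (conv_lip V v x y); auto. }
  assert (Cu : forall r, R1 < r < b -> continuous u r) by (intros; apply (lip_cont u R1 b Lu); auto).
  assert (Cv : forall r, R1 < r < b -> continuous v r) by (intros; apply (lip_cont v R1 b Lu); auto).
  assert (Ru : rcont u R1) by (apply (lip_rcont u R1 b Lu); auto).
  assert (Rv : rcont v R1) by (apply (lip_rcont v R1 b Lu); auto).
  assert (Fu_c : forall r, R1 < r < b -> continuous (fun y => phi_p_inv p (v y / y ^ (N - 1))) r).
  { intros r hr. unfold phi_p_inv. apply contR_comp. apply wcont. lra. apply Cv; auto. apply phi_cont, conj_gt1; auto. }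
  assert (Fv_c : forall r, R1 < r < b -> continuous (fun y => - (y ^ (N - 1) * g (u y))) r).
  { intros r hr. apply contR_opp, contR_mult. apply contR_pow, contR_id. apply contR_comp. apply Cu; auto. apply Hgc. }
  assert (Du : forall r, R1 < r < b -> is_derive u r (phi_p_inv p (v r / r ^ (N - 1)))).
  { intros r hr. destruct (Hf ((R1 + r) / 2) ((r + b) / 2) ltac:(lra) ltac:(lra) ltac:(lra)) as [H1 _].
    apply (deriv_limit U A u (fun y => phi_p_inv p (v y / y ^ (N - 1))) r ((R1 + r) / 2) ((r + b) / 2)); auto. lra.
    intros n y hy. apply Hd. lra. intros y hy. apply HcU. lra. }
  assert (Dv : forall r, R1 < r < b -> is_derive v r (- (r ^ (N - 1) * g (u r)))).
  { intros r hr. destruct (Hf ((R1 + r) / 2) ((r + b) / 2) ltac:(lra) ltac:(lra) ltac:(lra)) as [_ H2].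
    apply (deriv_limit V Bd v (fun y => - (y ^ (N - 1) * g (u y))) r ((R1 + r) / 2) ((r + b) / 2)); auto. lra.
    intros n y hy. apply Hd. lra. intros y hy. apply HcV. lra. }
  assert (RFu : rcont (fun y => phi_p_inv p (v y / y ^ (N - 1))) R1).
  { intros eps he. assert (Hpc := phi_cont (conj_exp p) 0 (conj_gt1 p hp)).
    destruct (eps_cont _ 0 Hpc eps he) as [e [he' He]].
    exists (Rmin (e / (Rabs Bv + 1)) (b - R1)). split. apply Rmin_pos; [apply Rdiv_lt_0_compat|]; try lra.
    assert (0 <= Rabs Bv) by apply Rabs_pos. lra.
    intros x hx. unfold phi_p_inv. rewrite Hv0. replace (0 / R1 ^ (N - 1)) with 0 by (unfold Rdiv; ring).
    apply He. rewrite Rminus_0_r.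
    destruct (Req_dec x R1) as [->|hne]. rewrite Hv0. unfold Rdiv. rewrite Rmult_0_l, Rabs_R0. lra.
    assert (h1 := Rmin_l (e / (Rabs Bv + 1)) (b - R1)). assert (h2 := Rmin_r (e / (Rabs Bv + 1)) (b - R1)).
    assert (hB := Rle_abs Bv). assert (0 <= Rabs Bv) by apply Rabs_pos.
    assert (HH := Hvb x ltac:(lra)).
    assert (HH2 : Rabs (v x) <= Rabs Bv * x ^ (N - 1) * (x - R1)).
    { eapply Rle_trans. apply HH. apply Rmult_le_compat_r. lra. apply Rmult_le_compat_r. apply pow_le; lra. auto. }
    apply div_pow_bound in HH2; [|lra].
    eapply Rle_lt_trans. apply HH2.
    apply Rle_lt_trans with ((Rabs Bv + 1) * (x - R1)). nra.
    apply Rlt_le_trans with ((Rabs Bv + 1) * (e / (Rabs Bv + 1))). apply Rmult_lt_compat_l; lra.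
    right; field; lra. }
  assert (RFv : rcont (fun y => - (y ^ (N - 1) * g (u y))) R1).
  { intros eps he. assert (H := rcont_mult (fun y => y ^ (N - 1)) (fun y => g (u y)) R1).
    destruct H with eps as [e [he' He]]; auto.
    apply cont_rcont. apply contR_pow, contR_id. apply rcont_comp; auto.
    exists e. split; auto. intros x hx. specialize (He x hx). simpl in He.
    replace (- (x ^ (N - 1) * g (u x)) - - (R1 ^ (N - 1) * g (u R1))) with (- (x ^ (N - 1) * g (u x) - R1 ^ (N - 1) * g (u R1))) by ring.
    rewrite Rabs_Ropp. auto. }
  refine (conj hb (conj _ (conj _ (conj Hu0 (conj Hv0 _))))).
  - exists (fun y => phi_p_inv p (v y / y ^ (N - 1))). split. intros r hr. split; auto.
    split. apply (right_deriv u (fun y => phi_p_inv p (v y / y ^ (N - 1))) R1 b); auto.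
    apply (rcont_filterlim (fun y => phi_p_inv p (v y / y ^ (N - 1)))); auto.
  - exists (fun y => - (y ^ (N - 1) * g (u y))). split. intros r hr. split; auto.
    split. apply (right_deriv v (fun y => - (y ^ (N - 1) * g (u y))) R1 b); auto.
    apply (rcont_filterlim (fun y => - (y ^ (N - 1) * g (u y)))); auto.
  - intros r hr _. split; auto.
Qed.

Open Scope R_scope.

Lemma prim_deriv (f : R -> R) a x : (forall z, continuous f z) -> is_derive (fun y => RInt f a y) x (f x).
Proof.
  intros Hc. apply (is_derive_RInt f (fun y => RInt f a y) a x).
  - exists (mkposreal 1 Rlt_0_1). intros y _. apply (RInt_correct (V := R_CompleteNormedModule)).
    apply (ex_RInt_continuous (V := R_CompleteNormedModule)). intros; apply Hc.
  - apply Hc.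
Qed.

Lemma prim_cont (f : R -> R) a x : (forall z, continuous f z) -> continuous (fun y => RInt f a y) x.
Proof. intros Hc. apply (derive_cont _ _ _ (prim_deriv f a x Hc)). Qed.

Lemma prim_zero (f : R -> R) a : RInt f a a = 0.
Proof. rewrite RInt_point. reflexivity. Qed.

Lemma Rmax_cont a x : continuous (fun y => Rmax a y) x.
Proof.
  apply cont_eps. intros eps he. exists eps. split; auto. intros y hy.
  unfold Rmax. destruct (Rle_dec a y); destruct (Rle_dec a x); apply Rabs_def2 in hy;
  apply Rabs_def1; lra.
Qed.

Section Tonelli.
Variables (p : R) (N : nat) (R1 u0 : R) (g : R -> R) (h : R).
Hypothesis hp : 1 < p.
Hypothesis hR1 : 0 <= R1.
Hypothesis hh : 0 < h.
Hypothesis Hgc : forall s, continuous g s.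

Definition FU (V : R -> R) (r : R) := phi_p_inv p (V (r - h) / r ^ (N - 1)).
Definition FV (U : R -> R) (r : R) := - (r ^ (N - 1) * g (U (r - h))).

Definition step (UV : (R -> R) * (R -> R)) : (R -> R) * (R -> R) :=
  (fun x => u0 + RInt (FU (snd UV)) R1 (Rmax R1 x), fun x => RInt (FV (fst UV)) R1 (Rmax R1 x)).

Fixpoint Iter (j : nat) : (R -> R) * (R -> R) :=
  match j with
  | O => (fun _ => u0, fun _ => 0)
  | S j' => step (Iter j')
  end.

Definition Inv (UV : (R -> R) * (R -> R)) :=
  (forall x, continuous (fst UV) x) /\ (forall x, continuous (snd UV) x) /\
  (forall y, y <= R1 -> fst UV y = u0 /\ snd UV y = 0).

Lemma FU_cont V : (forall x, continuous V x) -> (forall y, y <= R1 -> V y = 0) -> forall z, continuous (FU V) z.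
Proof.
  intros Hc H0 z. unfold FU, phi_p_inv. destruct (Rlt_dec z (R1 + h)) as [hz|hz].
  - apply contR_ext_loc with (fun _ => 0). apply (loc_impl z (fun y => y < R1 + h)). apply loc_lt; auto.
    intros y hy. rewrite H0 by lra. unfold Rdiv. rewrite Rmult_0_l. rewrite phi_zero. auto.
    apply contR_const.
  - apply contR_comp; [|apply phi_cont, conj_gt1; auto].
    unfold Rdiv. apply contR_mult. apply (contR_comp (fun y => y - h) V). apply contR_minus. apply contR_id. apply contR_const. apply Hc.
    apply contR_inv. apply contR_pow, contR_id. apply Rgt_not_eq, pow_lt. lra.
Qed.

Lemma FV_cont U : (forall x, continuous U x) -> forall z, continuous (FV U) z.
Proof.
  intros Hc z. unfold FV. apply contR_opp, contR_mult. apply contR_pow, contR_id.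
  apply contR_comp. apply (contR_comp (fun y => y - h) U). apply contR_minus. apply contR_id. apply contR_const. apply Hc.
  apply Hgc.
Qed.

Lemma step_inv UV : Inv UV -> Inv (step UV).
Proof.
  intros [Hu [Hv H0]]. unfold step, Inv; simpl.
  assert (CU := FU_cont (snd UV) Hv (fun y hy => proj2 (H0 y hy))).
  assert (CV := FV_cont (fst UV) Hu).
  split; [|split].
  - intros x. apply contR_plus. apply contR_const. apply (contR_comp (fun y => Rmax R1 y) (fun y => RInt (FU (snd UV)) R1 y)).
    apply Rmax_cont. apply prim_cont; auto.
  - intros x. apply (contR_comp (fun y => Rmax R1 y) (fun y => RInt (FV (fst UV)) R1 y)).
    apply Rmax_cont. apply prim_cont; auto.
  - intros y hy. rewrite Rmax_left by lra. rewrite !prim_zero. split; ring.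
Qed.

Lemma Iter_inv j : Inv (Iter j).
Proof.
  induction j. unfold Inv; simpl. split. intros; apply contR_const. split. intros; apply contR_const. auto.
  simpl. apply step_inv; auto.
Qed.

Lemma step_deriv UV r : Inv UV -> R1 < r ->
  is_derive (fst (step UV)) r (FU (snd UV) r) /\ is_derive (snd (step UV)) r (FV (fst UV) r).
Proof.
  intros [Hu [Hv H0]] hr.
  assert (CU := FU_cont (snd UV) Hv (fun y hy => proj2 (H0 y hy))).
  assert (CV := FV_cont (fst UV) Hu).
  assert (Hl : locally r (fun y => Rmax R1 y = y)).
  { apply (loc_impl r (fun y => R1 < y)). apply loc_gt; auto. intros y hy. apply Rmax_right; lra. }
  unfold step; simpl. split.
  - apply isdR_ext_loc with (fun y => u0 + RInt (FU (snd UV)) R1 y).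
    apply (loc_impl r _ _ Hl). intros y hy. rewrite hy. auto.
    apply isdR_eq with (0 + FU (snd UV) r). ring. apply isdR_plus. apply isdR_const. apply prim_deriv; auto.
  - apply isdR_ext_loc with (fun y => RInt (FV (fst UV)) R1 y).
    apply (loc_impl r _ _ Hl). intros y hy. rewrite hy. auto.
    apply prim_deriv; auto.
Qed.

Lemma Iter_stab j : forall x, x <= R1 + INR j * h -> fst (Iter (S j)) x = fst (Iter j) x /\ snd (Iter (S j)) x = snd (Iter j) x.
Proof.
  induction j; intros x hx.
  - simpl in hx. rewrite Rmult_0_l, Rplus_0_r in hx. simpl. unfold step; simpl.
    rewrite Rmax_left by lra. rewrite !prim_zero. split; ring.
  - assert (E1 : fst (Iter (S (S j))) x = u0 + RInt (FU (snd (Iter (S j)))) R1 (Rmax R1 x)) by reflexivity.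
    assert (E2 : fst (Iter (S j)) x = u0 + RInt (FU (snd (Iter j))) R1 (Rmax R1 x)) by reflexivity.
    assert (E3 : snd (Iter (S (S j))) x = RInt (FV (fst (Iter (S j)))) R1 (Rmax R1 x)) by reflexivity.
    assert (E4 : snd (Iter (S j)) x = RInt (FV (fst (Iter j))) R1 (Rmax R1 x)) by reflexivity.
    rewrite E1, E2, E3, E4. rewrite S_INR in hx.
    assert (Hy : forall y, Rmin R1 (Rmax R1 x) < y < Rmax R1 (Rmax R1 x) -> y - h <= R1 + INR j * h).
    { intros y hy. unfold Rmin, Rmax in hy. destruct (Rle_dec R1 x); destruct (Rle_dec R1 (Rmax R1 x)); unfold Rmax in *;
        destruct (Rle_dec R1 x); lra. }
    split.
    + f_equal. apply RInt_ext. intros y hy. unfold FU. rewrite (proj2 (IHj (y - h) (Hy y hy))). auto.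
    + apply RInt_ext. intros y hy. unfold FV. rewrite (proj1 (IHj (y - h) (Hy y hy))). auto.
Qed.

End Tonelli.

Section Tonelli2.
Variables (p : R) (N : nat) (R1 u0 : R) (g : R -> R) (h b B : R) (J : nat).
Hypothesis hp : 1 < p.
Hypothesis hR1 : 0 <= R1.
Hypothesis hh : 0 < h.
Hypothesis Hgc : forall s, continuous g s.
Hypothesis hb : R1 < b.
Hypothesis hJ : b <= R1 + INR J * h.
Hypothesis HB : forall s, Rabs (g s) <= B.

Definition TU := fst (Iter p N R1 u0 g h (S J)).
Definition TV := snd (Iter p N R1 u0 g h (S J)).

Lemma T_inv : Inv R1 u0 (TU, TV).
Proof. apply (Iter_inv p N R1 u0 g h hp hR1 hh Hgc (S J)). Qed.

Lemma TU_cont x : continuous TU x.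
Proof. apply (proj1 T_inv). Qed.
Lemma TV_cont x : continuous TV x.
Proof. apply (proj1 (proj2 T_inv)). Qed.
Lemma T_left y : y <= R1 -> TU y = u0 /\ TV y = 0.
Proof. apply (proj2 (proj2 T_inv)). Qed.

Lemma T_deriv r : R1 < r < b ->
  is_derive TU r (phi_p_inv p (TV (r - h) / r ^ (N - 1))) /\ is_derive TV r (- (r ^ (N - 1) * g (TU (r - h)))).
Proof.
  intros hr. destruct (step_deriv p N R1 u0 g h hp hR1 hh Hgc (Iter p N R1 u0 g h J) r (Iter_inv p N R1 u0 g h hp hR1 hh Hgc J) ltac:(lra)) as [H1 H2].
  destruct (Iter_stab p N R1 u0 g h J (r - h) ltac:(lra)) as [E1 E2].
  unfold TU, TV. change (Iter p N R1 u0 g h (S J)) with (step p N R1 u0 g h (Iter p N R1 u0 g h J)).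
  unfold FU, FV in *. simpl in E1, E2. split.
  - rewrite <- E2 in H1. auto.
  - rewrite <- E1 in H2. auto.
Qed.

Lemma TV_bound x : R1 <= x <= b -> Rabs (TV x) <= B * x ^ (N - 1) * (x - R1).
Proof.
  intros hx. destruct (Req_dec x R1) as [->|hne]. rewrite (proj2 (T_left R1 ltac:(lra))), Rabs_R0, Rminus_eq_0. lra.
  replace (TV x) with (TV x - TV R1) by (rewrite (proj2 (T_left R1 ltac:(lra))); ring).
  replace (B * x ^ (N - 1) * (x - R1)) with ((B * x ^ (N - 1)) * (x - R1)) by ring.
  apply (deriv_bound TV (fun c => - (c ^ (N - 1) * g (TU (c - h))))). lra.
  intros c hc. apply T_deriv. lra. apply cont_rcont, TV_cont. apply TV_cont.
  intros c hc. rewrite Rabs_Ropp, Rabs_mult, Rabs_right by (apply Rle_ge, pow_le; lra).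
  assert (c ^ (N - 1) <= x ^ (N - 1)) by (apply pow_incr; lra). assert (0 <= c ^ (N - 1)) by (apply pow_le; lra).
  specialize (HB (TU (c - h))). assert (0 <= Rabs (g (TU (c - h)))) by apply Rabs_pos.
  rewrite Rmult_comm. apply Rmult_le_compat; lra.
Qed.

Definition LV := b ^ (N - 1) * B.
Definition Wb := apow (B * (b - R1)) (conj_exp p - 1).

Lemma B_nonneg : 0 <= B.
Proof. eapply Rle_trans. apply Rabs_pos. apply (HB 0). Qed.

Lemma TV_lip x y : R1 <= x <= y -> y <= b -> Rabs (TV y - TV x) <= LV * (y - x).
Proof.
  intros hx hy. destruct (Req_dec x y) as [->|hne]. rewrite !Rminus_eq_0, Rabs_R0. lra.
  apply (deriv_bound TV (fun c => - (c ^ (N - 1) * g (TU (c - h))))). lra.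
  intros c hc. apply T_deriv. lra. apply cont_rcont, TV_cont. apply TV_cont.
  intros c hc. unfold LV. rewrite Rabs_Ropp, Rabs_mult, Rabs_right by (apply Rle_ge, pow_le; lra).
  assert (c ^ (N - 1) <= b ^ (N - 1)) by (apply pow_incr; lra). assert (0 <= c ^ (N - 1)) by (apply pow_le; lra).
  specialize (HB (TU (c - h))). assert (0 <= Rabs (g (TU (c - h)))) by apply Rabs_pos.
  apply Rmult_le_compat; lra.
Qed.

Lemma TV_lip_ext x y : x <= y -> R1 <= y <= b -> Rabs (TV y - TV x) <= LV * (y - x).
Proof.
  intros hxy hy. destruct (Rle_dec R1 x). apply TV_lip; lra.
  rewrite (proj2 (T_left x ltac:(lra))). replace (TV y - 0) with (TV y - TV R1) by (rewrite (proj2 (T_left R1 ltac:(lra))); ring).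
  eapply Rle_trans. apply TV_lip; lra. apply Rmult_le_compat_l. unfold LV. apply Rmult_le_pos. apply pow_le; lra. apply B_nonneg. lra.
Qed.

Lemma TU_dbound r : R1 < r < b -> Rabs (phi_p_inv p (TV (r - h) / r ^ (N - 1))) <= Wb.
Proof.
  intros hr. unfold phi_p_inv, Wb. rewrite phi_abs. assert (Hpp := conj_gt1 p hp).
  apply apow_mono. lra. split. apply Rabs_pos.
  destruct (Rle_dec (r - h) R1).
  - rewrite (proj2 (T_left (r - h) r0)). unfold Rdiv. rewrite Rmult_0_l, Rabs_R0. apply Rmult_le_pos. apply B_nonneg. lra.
  - apply div_pow_bound. lra. eapply Rle_trans. apply TV_bound. lra.
    assert ((r - h) ^ (N - 1) <= r ^ (N - 1)) by (apply pow_incr; lra).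
    assert (0 <= (r - h) ^ (N - 1)) by (apply pow_le; lra). assert (hB := B_nonneg).
    replace (B * r ^ (N - 1) * (b - R1)) with (B * (r ^ (N - 1) * (b - R1))) by ring.
    rewrite Rmult_assoc. apply Rmult_le_compat_l; auto. apply Rmult_le_compat; lra.
Qed.

Lemma Wb_nonneg : 0 <= Wb.
Proof. apply apow_ge0. Qed.

Lemma TU_lip x y : R1 <= x <= y -> y <= b -> Rabs (TU y - TU x) <= Wb * (y - x).
Proof.
  intros hx hy. destruct (Req_dec x y) as [->|hne]. rewrite !Rminus_eq_0, Rabs_R0. lra.
  apply (deriv_bound TU (fun c => phi_p_inv p (TV (c - h) / c ^ (N - 1)))). lra.
  intros c hc. apply T_deriv. lra. apply cont_rcont, TU_cont. apply TU_cont.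
  intros c hc. apply TU_dbound. lra.
Qed.

Lemma TU_lip_ext x y : x <= y -> R1 <= y <= b -> Rabs (TU y - TU x) <= Wb * (y - x).
Proof.
  intros hxy hy. destruct (Rle_dec R1 x). apply TU_lip; lra.
  rewrite (proj1 (T_left x ltac:(lra))). replace (TU y - u0) with (TU y - TU R1) by (rewrite (proj1 (T_left R1 ltac:(lra))); ring).
  eapply Rle_trans. apply TU_lip; lra. apply Rmult_le_compat_l. apply Wb_nonneg. lra.
Qed.

Lemma TU_bound x : R1 <= x <= b -> Rabs (TU x) <= Rabs u0 + Wb * (b - R1).
Proof.
  intros hx. replace (TU x) with ((TU x - TU R1) + u0) by (rewrite (proj1 (T_left R1 ltac:(lra))); ring).
  eapply Rle_trans. apply Rabs_triang. assert (H := TU_lip R1 x ltac:(lra) ltac:(lra)).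
  assert (Wb * (x - R1) <= Wb * (b - R1)) by (apply Rmult_le_compat_l; [apply Wb_nonneg|lra]). lra.
Qed.

Lemma TV_bound2 x : R1 <= x <= b -> Rabs (TV x) <= LV * (b - R1).
Proof.
  intros hx. replace (TV x) with (TV x - TV R1) by (rewrite (proj2 (T_left R1 ltac:(lra))); ring).
  eapply Rle_trans. apply TV_lip; lra. apply Rmult_le_compat_l. unfold LV. apply Rmult_le_pos. apply pow_le; lra. apply B_nonneg. lra.
Qed.

End Tonelli2.

Open Scope R_scope.

Lemma uconv_ext (Y Y' : nat -> R -> R) (z z' : R -> R) (S : R -> Prop) :
  (forall n y, S y -> Y n y = Y' n y) -> (forall y, S y -> z y = z' y) -> uconv Y z S -> uconv Y' z' S.
Proof.
  intros H1 H2 H eps he. destruct (H eps he) as [N HN]. exists N. intros n hn y hy.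
  rewrite <- H1, <- H2 by auto. auto.
Qed.

Lemma uconv_sub (Y : nat -> R -> R) (z : R -> R) (S S' : R -> Prop) :
  (forall y, S' y -> S y) -> uconv Y z S -> uconv Y z S'.
Proof. intros HS H eps he. destruct (H eps he) as [N HN]. exists N. intros n hn y hy. apply HN; auto. Qed.

Lemma conv_bound (a : nat -> R) l C : conv a l -> (forall n, Rabs (a n) <= C) -> Rabs l <= C.
Proof.
  intros Hc HC. destruct (Rle_dec (Rabs l) C) as [|hn]; auto. exfalso.
  destruct (Hc (Rabs l - C) ltac:(lra)) as [N HN]. specialize (HN N (le_n N)). specialize (HC N).
  assert (Rabs l <= Rabs (a N) + Rabs (a N - l)).
  { replace l with (a N - (a N - l)) at 1 by ring. eapply Rle_trans. apply Rabs_triang. rewrite Rabs_Ropp. lra. }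
  lra.
Qed.

Lemma conv_const_eq (a : nat -> R) l c : conv a l -> (forall n, a n = c) -> l = c.
Proof.
  intros Hc Ha. assert (H := conv_bound (fun n => a n - c) (l - c) 0).
  assert (Rabs (l - c) <= 0).
  { apply H. intros eps he. destruct (Hc eps he) as [N HN]. exists N. intros n hn.
    replace (a n - c - (l - c)) with (a n - l) by ring. auto.
    intros n. rewrite Ha, Rminus_eq_0, Rabs_R0. lra. }
  assert (Rabs (l - c) = 0) by (apply Rle_antisym; auto; apply Rabs_pos). apply Rabs_eq_0 in H1. lra.
Qed.

Lemma small_inv eps : 0 < eps -> exists n0 : nat, forall n, (n0 <= n)%nat -> / (INR n + 1) <= eps.
Proof.
  intros he. destruct (archimed (/ eps)) as [hA _].
  exists (Z.to_nat (up (/ eps))). intros n hn.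
  assert (0 < / eps) by (apply Rinv_0_lt_compat; auto).
  assert (/ eps < INR n + 1).
  { apply le_INR in hn. destruct (Z_le_gt_dec 0 (up (/ eps))).
    rewrite INR_IZR_INZ, Z2Nat.id in hn by auto. lra.
    assert (IZR (up (/ eps)) < 0) by (apply IZR_lt; lia). lra. }
  rewrite <- (Rinv_inv eps). left. apply Rinv_lt_contravar. apply Rmult_lt_0_compat; lra. auto.
Qed.

Lemma uconv_delay (W : nat -> R -> R) (w : R -> R) (hn : nat -> R) (R1 b Lw c1 c2 : R) :
  R1 < c1 -> c2 <= b -> 0 <= Lw ->
  (forall eps, 0 < eps -> exists N, forall n, (N <= n)%nat -> forall x, R1 <= x <= b -> Rabs (W n x - w x) <= eps) ->
  (forall n x y, x <= y -> R1 <= y <= b -> Rabs (W n y - W n x) <= Lw * (y - x)) ->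
  (forall n, 0 < hn n) -> (forall eps, 0 < eps -> exists N, forall n, (N <= n)%nat -> hn n <= eps) ->
  uconv (fun n y => W n (y - hn n)) w (fun y => c1 < y < c2).
Proof.
  intros h1 h2 hL Hc Hl Hh Hs eps he.
  destruct (Hc (eps / 2) ltac:(lra)) as [N1 HN1].
  destruct (Hs (eps / (2 * (Lw + 1))) ltac:(apply Rdiv_lt_0_compat; lra)) as [N2 HN2].
  exists (max N1 N2). intros n hnn y hy.
  specialize (HN1 n ltac:(lia) y ltac:(lra)). specialize (HN2 n ltac:(lia)).
  specialize (Hl n (y - hn n) y ltac:(specialize (Hh n); lra) ltac:(lra)).
  replace (W n (y - hn n) - w y) with (- (W n y - W n (y - hn n)) + (W n y - w y)) by ring.
  eapply Rle_trans. apply Rabs_triang. rewrite Rabs_Ropp.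
  replace (y - (y - hn n)) with (hn n) in Hl by ring.
  assert (Lw * hn n <= eps / 2).
  { apply Rle_trans with ((Lw + 1) * (eps / (2 * (Lw + 1)))).
    apply Rmult_le_compat; try lra. specialize (Hh n); lra. right; field; lra. }
  lra.
Qed.

Lemma sym_lip (f : R -> R) a b L : (forall x y, a <= x <= y -> y <= b -> Rabs (f y - f x) <= L * (y - x)) ->
  forall x y, a <= x <= b -> a <= y <= b -> Rabs (f x - f y) <= L * Rabs (x - y).
Proof.
  intros H x y hx hy. destruct (Rle_dec x y).
  - rewrite Rabs_minus_sym, (Rabs_minus_sym x), (Rabs_right (y - x)) by lra. apply H; lra.
  - rewrite (Rabs_right (x - y)) by lra. apply H; lra.
Qed.

Section Exist.
Variables (p : R) (N : nat) (R1 b d : R) (g : R -> R) (B : R).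
Hypothesis hp : 1 < p.
Hypothesis hR1 : 0 <= R1.
Hypothesis hb : R1 < b.
Hypothesis Hgc : forall s, continuous g s.
Hypothesis HB : forall s, Rabs (g s) <= B.

Let u0 := 1 - d.
Let M := Z.to_nat (up (b - R1)).
Definition hk (k : nat) := / (INR k + 1).
Let Jk (k : nat) := (S k * M)%nat.

Lemma hk_pos k : 0 < hk k.
Proof. unfold hk. apply Rinv_0_lt_compat. assert (0 <= INR k) by apply pos_INR. lra. Qed.

Lemma hJk k : b <= R1 + INR (Jk k) * hk k.
Proof.
  unfold Jk, hk. rewrite mult_INR, S_INR.
  replace ((INR k + 1) * INR M * / (INR k + 1)) with (INR M) by (field; assert (0 <= INR k) by apply pos_INR; lra).
  destruct (archimed (b - R1)) as [hA _]. unfold M.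
  rewrite INR_IZR_INZ, Z2Nat.id. lra. apply le_IZR. lra.
Qed.

Let Uk k := TU p N R1 u0 g (hk k) (Jk k).
Let Vk k := TV p N R1 u0 g (hk k) (Jk k).
Let Wbb := Wb p R1 b B.
Let LVV := LV N b B.

Lemma Uk_lip k : forall x y, R1 <= x <= b -> R1 <= y <= b -> Rabs (Uk k x - Uk k y) <= Wbb * Rabs (x - y).
Proof. apply sym_lip. intros x y hx hy. apply (TU_lip p N R1 u0 g (hk k) b B (Jk k) hp hR1 (hk_pos k) Hgc hb (hJk k) HB); lra. Qed.
Lemma Vk_lip k : forall x y, R1 <= x <= b -> R1 <= y <= b -> Rabs (Vk k x - Vk k y) <= LVV * Rabs (x - y).
Proof. apply sym_lip. intros x y hx hy. apply (TV_lip p N R1 u0 g (hk k) b B (Jk k) hp hR1 (hk_pos k) Hgc (hJk k) HB); lra. Qed.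

Theorem exist_bounded : exists u v, is_sol_g p N g R1 d u v b.
Proof.
  assert (hB0 : 0 <= B) by (eapply Rle_trans; [apply Rabs_pos| apply (HB 0)]).
  assert (hW0 : 0 <= Wbb) by apply Wb_nonneg.
  assert (hL0 : 0 <= LVV) by (unfold LVV, LV; apply Rmult_le_pos; [apply pow_le; lra| auto]).
  destruct (ascoli Uk R1 b (Rabs u0 + Wbb * (b - R1)) Wbb ltac:(lra) hW0) as [s1 [u [Hs1 Hu]]].
  { intros n x hx. apply (TU_bound p N R1 u0 g (hk n) b B (Jk n) hp hR1 (hk_pos n) Hgc hb (hJk n) HB); auto. }
  { intros n x y hx hy. apply Uk_lip; auto. }
  destruct (ascoli (fun n => Vk (s1 n)) R1 b (LVV * (b - R1)) LVV ltac:(lra) hL0) as [s2 [v [Hs2 Hv]]].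
  { intros n x hx. apply (TV_bound2 p N R1 u0 g (hk (s1 n)) b B (Jk (s1 n)) hp hR1 (hk_pos _) Hgc hb (hJk _) HB); auto. }
  { intros n x y hx hy. apply Vk_lip; auto. }
  set (kap := fun n => s1 (s2 n)).
  assert (Hkap : extr kap) by (unfold kap; apply (extr_comp s1 s2); auto).
  assert (Hu' : forall eps, 0 < eps -> exists N0, forall n, (N0 <= n)%nat -> forall x, R1 <= x <= b -> Rabs (Uk (kap n) x - u x) <= eps).
  { intros eps he. destruct (Hu eps he) as [N0 HN0]. exists N0. intros n hn x hx. apply HN0; auto.
    assert (H := extr_ge s2 Hs2 n). lia. }
  assert (HcU : forall x, R1 <= x <= b -> conv (fun n => Uk (kap n) x) (u x)).
  { intros x hx eps he. destruct (Hu' (eps/2) ltac:(lra)) as [N0 HN0]. exists N0. intros n hn.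
    specialize (HN0 n hn x hx). lra. }
  assert (HcV : forall x, R1 <= x <= b -> conv (fun n => Vk (kap n) x) (v x)).
  { intros x hx eps he. destruct (Hv (eps/2) ltac:(lra)) as [N0 HN0]. exists N0. intros n hn.
    specialize (HN0 n hn x hx). unfold kap. lra. }
  assert (Hu0 : u R1 = 1 - d).
  { apply (conv_const_eq _ _ _ (HcU R1 ltac:(lra))). intros n.
    exact (proj1 (T_left p N R1 u0 g (hk (kap n)) (Jk (kap n)) hp hR1 (hk_pos _) Hgc R1 ltac:(lra))). }
  assert (Hv0 : v R1 = 0).
  { apply (conv_const_eq _ _ _ (HcV R1 ltac:(lra))). intros n.
    exact (proj2 (T_left p N R1 u0 g (hk (kap n)) (Jk (kap n)) hp hR1 (hk_pos _) Hgc R1 ltac:(lra))). }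
  assert (Hub : forall y, R1 <= y <= b -> Rabs (u y) <= Rabs u0 + Wbb * (b - R1)).
  { intros y hy. apply (conv_bound _ _ _ (HcU y hy)). intros n.
    exact (TU_bound p N R1 u0 g (hk (kap n)) b B (Jk (kap n)) hp hR1 (hk_pos _) Hgc hb (hJk _) HB y hy). }
  assert (Hvb : forall y, R1 <= y <= b -> Rabs (v y) <= LVV * (b - R1)).
  { intros y hy. apply (conv_bound _ _ _ (HcV y hy)). intros n.
    exact (TV_bound2 p N R1 u0 g (hk (kap n)) b B (Jk (kap n)) hp hR1 (hk_pos _) Hgc hb (hJk _) HB y hy). }
  assert (Hhs : forall eps, 0 < eps -> exists N0, forall n, (N0 <= n)%nat -> hk (kap n) <= eps).
  { intros eps he. destruct (small_inv eps he) as [n0 Hn0]. exists n0. intros n hn. apply Hn0.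
    assert (H := extr_ge kap Hkap n). lia. }
  exists u, v.
  assert (HLu : 0 <= Rmax Wbb LVV) by (apply Rle_trans with Wbb; auto; apply Rmax_l).
  apply (limit_sol p N g R1 b d (fun n => Uk (kap n)) (fun n => Vk (kap n))
     (fun n y => phi_p_inv p (Vk (kap n) (y - hk (kap n)) / y ^ (N - 1)))
     (fun n y => - (y ^ (N - 1) * g (Uk (kap n) (y - hk (kap n))))) u v (Rmax Wbb LVV) B
     hp hR1 hb Hgc HLu Hu0 Hv0 HcU HcV).
  - intros n x y hx hy. eapply Rle_trans. apply Uk_lip; auto. apply Rmult_le_compat_r. apply Rabs_pos. apply Rmax_l.
  - intros n x y hx hy. eapply Rle_trans. apply Vk_lip; auto. apply Rmult_le_compat_r. apply Rabs_pos. apply Rmax_r.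
  - intros n y hy. exact (T_deriv p N R1 u0 g (hk (kap n)) b (Jk (kap n)) hp hR1 (hk_pos _) Hgc (hJk _) y hy).
  - intros c1 c2 hc1 hc12 hc2. assert (hc0 : 0 < c1) by lra.
    assert (hX : 0 < c1 ^ (N - 1)) by (apply pow_lt; auto).
    split.
    + assert (H1 := uconv_delay (fun n => Vk (kap n)) v (fun n => hk (kap n)) R1 b LVV c1 c2 hc1 ltac:(lra) hL0 Hv).
      assert (H1' : uconv (fun n y => Vk (kap n) (y - hk (kap n))) v (fun y => c1 < y < c2)).
      { apply H1. intros n x y hxy hy.
        exact (TV_lip_ext p N R1 u0 g (hk (kap n)) b B (Jk (kap n)) hp hR1 (hk_pos _) Hgc hb (hJk _) HB x y hxy hy).
        intros n; apply hk_pos. auto. }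
      assert (H2 : uconv (fun n y => / y ^ (N - 1) * Vk (kap n) (y - hk (kap n))) (fun y => / y ^ (N - 1) * v y) (fun y => c1 < y < c2)).
      { apply (uconv_scale _ _ _ _ (/ c1 ^ (N - 1))). apply Rinv_0_lt_compat; auto. exact H1'.
        intros y hy. rewrite Rabs_right by (left; apply Rinv_0_lt_compat, pow_lt; lra).
        apply Rinv_le_contravar; auto. apply pow_incr; lra. }
      assert (H3 := unif_comp (phi_p (conj_exp p)) _ _ _ (/ c1 ^ (N - 1) * (LVV * (b - R1)))
                   (fun x => phi_cont (conj_exp p) x (conj_gt1 p hp)) H2).
      apply (uconv_ext (fun n y => phi_p (conj_exp p) (/ y ^ (N - 1) * Vk (kap n) (y - hk (kap n))))
                       _ (fun y => phi_p (conj_exp p) (/ y ^ (N - 1) * v y))).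
      * intros n y hy. unfold phi_p_inv, Rdiv. rewrite Rmult_comm. reflexivity.
      * intros y hy. unfold phi_p_inv, Rdiv. rewrite Rmult_comm. reflexivity.
      * apply H3. intros y hy. rewrite Rabs_mult. rewrite Rabs_right by (left; apply Rinv_0_lt_compat, pow_lt; lra).
        apply Rmult_le_compat. left; apply Rinv_0_lt_compat, pow_lt; lra. apply Rabs_pos.
        apply Rinv_le_contravar; auto. apply pow_incr; lra. apply Hvb; lra.
    + assert (K1 := uconv_delay (fun n => Uk (kap n)) u (fun n => hk (kap n)) R1 b Wbb c1 c2 hc1 ltac:(lra) hW0 Hu').
      assert (K1' : uconv (fun n y => Uk (kap n) (y - hk (kap n))) u (fun y => c1 < y < c2)).
      { apply K1. intros n x y hxy hy.
        exact (TU_lip_ext p N R1 u0 g (hk (kap n)) b B (Jk (kap n)) hp hR1 (hk_pos _) Hgc hb (hJk _) HB x y hxy hy).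
        intros n; apply hk_pos. auto. }
      assert (K2 := unif_comp g _ _ _ (Rabs u0 + Wbb * (b - R1)) Hgc K1' ltac:(intros y hy; apply Hub; lra)).
      assert (K3 : uconv (fun n y => - (y ^ (N - 1)) * g (Uk (kap n) (y - hk (kap n)))) (fun y => - (y ^ (N - 1)) * g (u y)) (fun y => c1 < y < c2)).
      { apply (uconv_scale _ _ _ _ (b ^ (N - 1) + 1)). assert (0 <= b ^ (N - 1)) by (apply pow_le; lra). lra.
        exact K2. intros y hy. rewrite Rabs_Ropp, Rabs_right by (apply Rle_ge, pow_le; lra).
        assert (y ^ (N - 1) <= b ^ (N - 1)) by (apply pow_incr; lra). lra. }
      apply (uconv_ext (fun n y => - (y ^ (N - 1)) * g (Uk (kap n) (y - hk (kap n)))) _ (fun y => - (y ^ (N - 1)) * g (u y))).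
      * intros n y hy. ring.
      * intros y hy. ring.
      * exact K3.
  - intros x hx. apply (conv_bound _ _ _ (HcV x ltac:(lra))). intros n.
    exact (TV_bound p N R1 u0 g (hk (kap n)) b B (Jk (kap n)) hp hR1 (hk_pos _) Hgc (hJk _) HB x ltac:(lra)).
Qed.
End Exist.

Open Scope R_scope.

Lemma sol_g_ext p N (g1 g2 : R -> R) R1 d u v rs : is_sol_g p N g1 R1 d u v rs ->
  (forall r, R1 < r < rs -> g1 (u r) = g2 (u r)) -> is_sol_g p N g2 R1 d u v rs.
Proof.
  intros [h1 [h2 [h3 [h4 [h5 h6]]]]] He. split; auto. split; auto. split; auto. split; auto. split; auto.
  intros r hr hr0. destruct (h6 r hr hr0) as [A1 A2]. split; auto. rewrite <- He; auto.
Qed.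

Lemma Rmin_cont a x : continuous (fun y => Rmin y a) x.
Proof.
  apply cont_eps. intros eps he. exists eps. split; auto. intros y hy.
  unfold Rmin. destruct (Rle_dec y a); destruct (Rle_dec x a); apply Rabs_def2 in hy;
  apply Rabs_def1; lra.
Qed.

Section ExistF.
Variables (p : R) (N : nat) (f : R -> R) (R1 R2 d : R).
Hypothesis hp : 1 < p.
Hypothesis hR1 : 0 <= R1.
Hypothesis hR12 : R1 < R2.
Hypothesis Hreg : f_reg f.
Hypothesis Heq : f_eq f.
Hypothesis hd : 0 <= d <= 1.

Theorem exist_f : exists u v, is_sol_g p N (fhat f) R1 d u v (R2 + 1).
Proof.
  set (b := R2 + 1).
  set (D0 := Du p (fhat f)).
  assert (hD0 : 0 <= D0) by (unfold D0, Du; left; apply Rpower_gt0).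
  set (U0 := 2 + D0 * (b - R1)).
  assert (hU0 : 2 <= U0) by (unfold U0, b; assert (0 <= D0 * (R2 + 1 - R1)) by (apply Rmult_le_pos; lra); lra).
  set (gt := fun s => fhat f (Rmin s U0)).
  assert (Hgf := fhat_gprop f Hreg Heq).
  assert (Hgt_c : forall s, continuous gt s).
  { intros s. unfold gt. apply contR_comp. apply Rmin_cont. apply fhat_cont; auto. }
  destruct (fhat_bound f Hreg Heq 0 U0 ltac:(lra)) as [B [hB HB]].
  assert (HBt : forall s, Rabs (gt s) <= B).
  { intros s. unfold gt. destruct (Rle_dec 0 (Rmin s U0)).
    apply HB. split; auto. apply Rmin_r. rewrite fhat_neg by lra. rewrite Rabs_R0; auto. }
  assert (Hgt : gprop gt).
  { destruct Hgf as [_ [H0 [H1 [Hn Hp]]]]. split; auto. split; [|split; [|split]].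
    - intros s hs. unfold gt. rewrite Rmin_left by lra. auto.
    - unfold gt. rewrite Rmin_left by lra. auto.
    - intros s hs. unfold gt. rewrite Rmin_left by lra. auto.
    - intros s hs. unfold gt. apply Hp. unfold Rmin; destruct (Rle_dec s U0); lra. }
  destruct (exist_bounded p N R1 b d gt B hp hR1 ltac:(unfold b; lra) Hgt_c HBt) as [u [v Hs]].
  exists u, v.
  assert (HG1 : Gint gt 1 = Gint (fhat f) 1).
  { unfold Gint. apply RInt_ext. intros x hx. unfold Rmin in hx. destruct (Rle_dec 0 1); [|lra].
    unfold gt. rewrite Rmin_left; auto. rewrite Rmax_right in hx by lra. lra. }
  assert (HDu : Du p gt = D0) by (unfold D0, Du, Wst; rewrite HG1; auto).
  apply (sol_g_ext p N gt (fhat f) R1 d u v b Hs).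
  intros r hr. unfold gt. rewrite Rmin_left; auto.
  assert (Hb := deriv_bound u (fun y => phi_p_inv p (v y / y ^ (N - 1))) R1 r D0 ltac:(lra)).
  assert (Hur : Rabs (u r - u R1) <= D0 * (r - R1)).
  { apply Hb.
    - intros x hx. apply (sol_du p N gt R1 d u v b hR1 Hs); lra.
    - apply (sol_ru p N gt R1 d u v b hR1 Hs); lra.
    - apply (sol_cu p N gt R1 d u v b hR1 Hs); lra.
    - intros x hx. rewrite <- HDu. apply (du_bound p N gt R1 d u v b hp hR1 Hgt Hs); auto; lra. }
  rewrite (sol_u0 p N gt R1 d u v b Hs) in Hur. apply Rabs_le_inv' in Hur.
  assert (D0 * (r - R1) <= D0 * (b - R1)) by (apply Rmult_le_compat_l; lra).
  unfold U0. lra.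
Qed.
End ExistF.

Open Scope R_scope.

Lemma is_lim_conv (a : nat -> R) (l : R) : is_lim_seq a l -> conv a l.
Proof.
  intros H. apply is_lim_seq_spec in H. intros eps he. destruct (H (mkposreal eps he)) as [N HN].
  exists N. intros n hn. apply HN; auto.
Qed.

Lemma conv_unique (a : nat -> R) l1 l2 : conv a l1 -> conv a l2 -> l1 = l2.
Proof.
  intros H1 H2. destruct (Req_dec l1 l2) as [|hn]; auto. exfalso.
  set (e := Rabs (l1 - l2) / 2). assert (he : 0 < e) by (unfold e; assert (0 < Rabs (l1 - l2)) by (apply Rabs_pos_lt; lra); lra).
  destruct (H1 e he) as [N1 HN1]. destruct (H2 e he) as [N2 HN2].
  specialize (HN1 (max N1 N2) ltac:(lia)). specialize (HN2 (max N1 N2) ltac:(lia)).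
  assert (Rabs (l1 - l2) <= Rabs (a (max N1 N2) - l1) + Rabs (a (max N1 N2) - l2)).
  { replace (l1 - l2) with (- (a (max N1 N2) - l1) + (a (max N1 N2) - l2)) by ring.
    eapply Rle_trans. apply Rabs_triang. rewrite Rabs_Ropp. lra. }
  unfold e in *. lra.
Qed.

Section SolFacts.
Variables (p : R) (N : nat) (g : R -> R) (R1 R2 d : R) (u v : R -> R) (rs : R).
Hypothesis hp : 1 < p.
Hypothesis hR1 : 0 <= R1.
Hypothesis hR12 : R1 < R2.
Hypothesis Hg : gprop g.
Hypothesis hd : 0 <= d <= 1.
Hypothesis hrs : R2 < rs.
Hypothesis Hs : is_sol_g p N g R1 d u v rs.

Lemma sf_ulip x y : R1 <= x <= R2 -> R1 <= y <= R2 -> Rabs (u x - u y) <= Du p g * Rabs (x - y).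
Proof.
  apply (sym_lip u R1 R2). intros a c ha hc. destruct (Req_dec a c) as [->|hne].
  rewrite !Rminus_eq_0, Rabs_R0. lra.
  apply (deriv_bound u (fun y => phi_p_inv p (v y / y ^ (N - 1)))). lra.
  intros z hz. apply (sol_du p N g R1 d u v rs hR1 Hs); lra.
  apply (sol_ru p N g R1 d u v rs hR1 Hs); lra.
  apply (sol_cu p N g R1 d u v rs hR1 Hs); lra.
  intros z hz. apply (du_bound p N g R1 d u v rs hp hR1 Hg Hs); auto; lra.
Qed.

Lemma sf_ubound x : R1 <= x <= R2 -> Rabs (u x) <= 1 + Du p g * (R2 - R1).
Proof.
  intros hx. assert (H := sf_ulip x R1 hx ltac:(lra)). rewrite (sol_u0 p N g R1 d u v rs Hs) in H.
  rewrite (Rabs_right (x - R1)) in H by lra.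
  replace (u x) with ((u x - (1 - d)) + (1 - d)) by ring. eapply Rle_trans. apply Rabs_triang.
  rewrite (Rabs_right (1 - d)) by lra.
  assert (Du p g * (x - R1) <= Du p g * (R2 - R1)) by (apply Rmult_le_compat_l; [unfold Du; left; apply Rpower_gt0|lra]).
  lra.
Qed.

Variable Bf : R.
Hypothesis HBf : forall s, Rabs s <= 1 + Du p g * (R2 - R1) -> Rabs (g s) <= Bf.

Lemma sf_vlip x y : R1 <= x <= R2 -> R1 <= y <= R2 -> Rabs (v x - v y) <= R2 ^ (N - 1) * Bf * Rabs (x - y).
Proof.
  apply (sym_lip v R1 R2). intros a c ha hc. destruct (Req_dec a c) as [->|hne].
  rewrite !Rminus_eq_0, Rabs_R0. lra.
  apply (deriv_bound v (fun y => - (y ^ (N - 1) * g (u y)))). lra.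
  intros z hz. apply (sol_dv p N g R1 d u v rs hR1 Hs); lra.
  apply (sol_rv p N g R1 d u v rs hR1 Hs); lra.
  apply (sol_cv p N g R1 d u v rs hR1 Hs); lra.
  intros z hz. rewrite Rabs_Ropp, Rabs_mult, Rabs_right by (apply Rle_ge, pow_le; lra).
  assert (z ^ (N - 1) <= R2 ^ (N - 1)) by (apply pow_incr; lra). assert (0 <= z ^ (N - 1)) by (apply pow_le; lra).
  assert (Rabs (g (u z)) <= Bf) by (apply HBf, sf_ubound; lra).
  apply Rmult_le_compat; auto; try lra. apply Rabs_pos.
Qed.

Lemma sf_vbound x : R1 < x <= R2 -> Rabs (v x) <= Bf * x ^ (N - 1) * (x - R1).
Proof.
  intros hx. assert (H := v_incr_bound p N g R1 d u v rs hR1 Hs R1 x Bf ltac:(lra) ltac:(lra)).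
  rewrite (sol_v0 p N g R1 d u v rs Hs), Rminus_0_r in H. apply H.
  intros c hc. apply HBf, sf_ubound; lra.
Qed.

End SolFacts.

Lemma left_lim_eq (f1 f2 : R -> R) a r0 K : a < r0 -> 0 <= K ->
  (forall y, a <= y < r0 -> f1 y = f2 y) ->
  (forall y, a <= y <= r0 -> Rabs (f1 y - f1 r0) <= K * (r0 - y)) -> continuous f2 r0 -> f1 r0 = f2 r0.
Proof.
  intros har hK Heq Hl Hc. destruct (Req_dec (f1 r0) (f2 r0)) as [|hn]; auto. exfalso.
  set (e := Rabs (f1 r0 - f2 r0) / 2). assert (he : 0 < e) by (unfold e; assert (0 < Rabs (f1 r0 - f2 r0)) by (apply Rabs_pos_lt; lra); lra).
  destruct (eps_cont f2 r0 Hc e he) as [dl [hdl Hdl]].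
  set (y := Rmax a (r0 - Rmin (dl / 2) (e / (K + 1)))).
  assert (hm1 := Rmin_l (dl / 2) (e / (K + 1))). assert (hm2 := Rmin_r (dl / 2) (e / (K + 1))).
  assert (hmp : 0 < Rmin (dl / 2) (e / (K + 1))) by (apply Rmin_pos; [lra| apply Rdiv_lt_0_compat; lra]).
  assert (hy1 : a <= y) by apply Rmax_l. assert (hy2 : r0 - Rmin (dl / 2) (e / (K + 1)) <= y) by apply Rmax_r.
  assert (hy3 : y < r0) by (unfold y, Rmax; destruct (Rle_dec a (r0 - Rmin (dl / 2) (e / (K + 1)))); lra).
  specialize (Hdl y ltac:(rewrite Rabs_left by lra; lra)). specialize (Hl y ltac:(lra)). rewrite Heq in Hl by lra.
  assert (K * (r0 - y) <= e).
  { apply Rle_trans with ((K + 1) * (e / (K + 1))). apply Rmult_le_compat; lra. right; field; lra. }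
  assert (Rabs (f1 r0 - f2 r0) <= Rabs (f2 y - f1 r0) + Rabs (f2 y - f2 r0)).
  { replace (f1 r0 - f2 r0) with (- (f2 y - f1 r0) + (f2 y - f2 r0)) by ring.
    eapply Rle_trans. apply Rabs_triang. rewrite Rabs_Ropp. lra. }
  unfold e in *. lra.
Qed.

Section ContDep.
Variables (p : R) (N : nat) (f : R -> R) (R1 R2 : R).
Hypothesis hp : 1 < p.
Hypothesis hN : (1 <= N)%nat.
Hypothesis hR1 : 0 <= R1.
Hypothesis hR12 : R1 < R2.
Hypothesis Hreg : f_reg f.
Hypothesis Heq : f_eq f.
Hypothesis Hf0 : f_0 p f.

Theorem cont_dep (dn : nat -> R) (d : R) (U V : nat -> R -> R) (rsn : nat -> R) (u v : R -> R) (rs : R) :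
  (forall n, 0 < dn n < 1) -> is_lim_seq dn d -> 0 <= d <= 1 ->
  (forall n, R2 < rsn n /\ is_solution p N f R1 (dn n) (U n) (V n) (rsn n)) ->
  R2 < rs -> is_solution p N f R1 d u v rs ->
  forall eps, 0 < eps -> exists n0 : nat, forall n, (n0 <= n)%nat ->
    forall r, R1 <= r <= R2 -> Rabs (U n r - u r) < eps /\ Rabs (V n r - v r) < eps.
Proof.
  intros Hdn Hlim hd HUV hrs Hs eps he.
  set (g := fhat f).
  assert (Hg : gprop g) by (apply fhat_gprop; auto).
  set (D0 := Du p g). assert (hD0 : 0 <= D0) by (unfold D0, Du; left; apply Rpower_gt0).
  set (Ub := 1 + D0 * (R2 - R1)).
  destruct (fhat_bound f Hreg Heq (- Ub) Ub ltac:(unfold Ub; assert (0 <= D0 * (R2 - R1)) by (apply Rmult_le_pos; lra); lra)) as [Bf [hBf HBf]].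
  assert (HBf' : forall s, Rabs s <= 1 + Du p g * (R2 - R1) -> Rabs (g s) <= Bf).
  { intros s hs. apply HBf. apply Rabs_le_inv'. auto. }
  set (LVc := R2 ^ (N - 1) * Bf). assert (hLVc : 0 <= LVc) by (unfold LVc; apply Rmult_le_pos; [apply pow_le; lra|auto]).
  assert (Hsn : forall n, is_sol_g p N g R1 (dn n) (U n) (V n) (rsn n)) by (intros n; apply (HUV n)).
  assert (hrsn : forall n, R2 < rsn n) by (intros n; apply (HUV n)).
  assert (hdn : forall n, 0 <= dn n <= 1) by (intros n; specialize (Hdn n); lra).
  destruct (Classical_Prop.classic (exists n0 : nat, forall n, (n0 <= n)%nat ->
    forall r, R1 <= r <= R2 -> Rabs (U n r - u r) < eps /\ Rabs (V n r - v r) < eps)) as [|Hno]; auto.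
  exfalso.
  set (bad := fun n => exists r, R1 <= r <= R2 /\ ~ (Rabs (U n r - u r) < eps /\ Rabs (V n r - v r) < eps)).
  assert (Hbad : forall n0, exists n, (n0 <= n)%nat /\ bad n).
  { intros n0. apply Classical_Prop.NNPP. intro hn. apply Hno. exists n0. intros n hn0 r hr.
    apply Classical_Prop.NNPP. intro hc. apply hn. exists n. split; auto. exists r. split; auto. }
  set (pickb := fun n0 => proj1_sig (constructive_indefinite_description _ (Hbad n0))).
  assert (Hpb : forall n0, (n0 <= pickb n0)%nat /\ bad (pickb n0)).
  { intros n0. unfold pickb. destruct (constructive_indefinite_description _ (Hbad n0)) as [n Hn]. auto. }
  set (tau := fix tau (k : nat) : nat := match k with O => pickb O | S k' => pickb (S (tau k')) end).
  assert (Htau : extr tau).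
  { intros k. simpl. destruct (Hpb (S (tau k))). lia. }
  assert (Htb : forall k, bad (tau k)).
  { intros k. destruct k; simpl. apply (Hpb O). apply (Hpb (S (tau k))). }
  destruct (ascoli (fun k => U (tau k)) R1 R2 Ub D0 ltac:(lra) hD0) as [s1 [ut [Hs1 Hut]]].
  { intros n x hx. apply (sf_ubound p N g R1 R2 (dn (tau n)) (U (tau n)) (V (tau n)) (rsn (tau n))); auto. }
  { intros n x y hx hy. apply (sf_ulip p N g R1 R2 (dn (tau n)) (U (tau n)) (V (tau n)) (rsn (tau n))); auto. }
  destruct (ascoli (fun k => V (tau (s1 k))) R1 R2 (LVc * (R2 - R1)) LVc ltac:(lra) hLVc) as [s2 [vt [Hs2 Hvt]]].
  { intros n x hx. assert (H := sf_vlip p N g R1 R2 (dn (tau (s1 n))) (U (tau (s1 n))) (V (tau (s1 n))) (rsn (tau (s1 n))) hp hR1 hR12 Hg (hdn _) (hrsn _) (Hsn _) Bf HBf' x R1 hx ltac:(lra)).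
    rewrite (sol_v0 p N g R1 _ _ _ _ (Hsn _)), Rminus_0_r, (Rabs_right (x - R1)) in H by lra.
    eapply Rle_trans. apply H. unfold LVc. apply Rmult_le_compat_l. apply Rmult_le_pos; [apply pow_le; lra| auto]. lra. }
  { intros n x y hx hy. apply (sf_vlip p N g R1 R2 (dn (tau (s1 n))) (U (tau (s1 n))) (V (tau (s1 n))) (rsn (tau (s1 n)))); auto. }
  set (kap := fun k => tau (s1 (s2 k))).
  assert (Hkap : extr kap) by (unfold kap; apply (extr_comp tau (fun k => s1 (s2 k))); auto; apply (extr_comp s1 s2); auto).
  assert (Hu' : forall e, 0 < e -> exists N0, forall n, (N0 <= n)%nat -> forall x, R1 <= x <= R2 -> Rabs (U (kap n) x - ut x) <= e).
  { intros e he'. destruct (Hut e he') as [N0 HN0]. exists N0. intros n hn x hx. apply HN0; auto.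
    assert (H := extr_ge s2 Hs2 n). lia. }
  assert (Hv' : forall e, 0 < e -> exists N0, forall n, (N0 <= n)%nat -> forall x, R1 <= x <= R2 -> Rabs (V (kap n) x - vt x) <= e).
  { intros e he'. destruct (Hvt e he') as [N0 HN0]. exists N0. intros n hn x hx. apply HN0; auto. }
  assert (HcU : forall x, R1 <= x <= R2 -> conv (fun n => U (kap n) x) (ut x)).
  { intros x hx e he'. destruct (Hu' (e/2) ltac:(lra)) as [N0 HN0]. exists N0. intros n hn.
    specialize (HN0 n hn x hx). lra. }
  assert (HcV : forall x, R1 <= x <= R2 -> conv (fun n => V (kap n) x) (vt x)).
  { intros x hx e he'. destruct (Hv' (e/2) ltac:(lra)) as [N0 HN0]. exists N0. intros n hn.
    specialize (HN0 n hn x hx). lra. }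
  assert (Hu0 : ut R1 = 1 - d).
  { apply (conv_unique (fun n => U (kap n) R1)). apply HcU; lra.
    assert (Hc := conv_extr dn d kap Hkap (is_lim_conv dn d Hlim)).
    intros e he'. destruct (Hc e he') as [N0 HN0]. exists N0. intros n hn.
    rewrite (sol_u0 p N g R1 _ _ _ _ (Hsn (kap n))). replace (1 - dn (kap n) - (1 - d)) with (- (dn (kap n) - d)) by ring.
    rewrite Rabs_Ropp. apply HN0; auto. }
  assert (Hv0 : vt R1 = 0).
  { apply (conv_const_eq _ _ _ (HcV R1 ltac:(lra))). intros n. apply (sol_v0 p N g R1 _ _ _ _ (Hsn (kap n))). }
  assert (Hub : forall y, R1 <= y <= R2 -> Rabs (ut y) <= Ub).
  { intros y hy. apply (conv_bound _ _ _ (HcU y hy)). intros n.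
    apply (sf_ubound p N g R1 R2 (dn (kap n)) (U (kap n)) (V (kap n)) (rsn (kap n))); auto. }
  assert (Hvb : forall y, R1 <= y <= R2 -> Rabs (vt y) <= LVc * (R2 - R1)).
  { intros y hy. apply (conv_bound _ _ _ (HcV y hy)). intros n.
    assert (H := sf_vlip p N g R1 R2 (dn (kap n)) (U (kap n)) (V (kap n)) (rsn (kap n)) hp hR1 hR12 Hg (hdn _) (hrsn _) (Hsn _) Bf HBf' y R1 hy ltac:(lra)).
    rewrite (sol_v0 p N g R1 _ _ _ _ (Hsn _)), Rminus_0_r, (Rabs_right (y - R1)) in H by lra.
    eapply Rle_trans. apply H. unfold LVc. apply Rmult_le_compat_l. apply Rmult_le_pos; [apply pow_le; lra| auto]. lra. }
  assert (HLu : 0 <= Rmax D0 LVc) by (apply Rle_trans with D0; auto; apply Rmax_l).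
  assert (Hgc : forall s, continuous g s) by (destruct Hg; auto).
  assert (Hst : is_sol_g p N g R1 d ut vt R2).
  { apply (limit_sol p N g R1 R2 d (fun n => U (kap n)) (fun n => V (kap n))
     (fun n y => phi_p_inv p (V (kap n) y / y ^ (N - 1)))
     (fun n y => - (y ^ (N - 1) * g (U (kap n) y))) ut vt (Rmax D0 LVc) Bf
     hp hR1 hR12 Hgc HLu Hu0 Hv0 HcU HcV).
    - intros n x y hx hy. eapply Rle_trans.
      apply (sf_ulip p N g R1 R2 (dn (kap n)) (U (kap n)) (V (kap n)) (rsn (kap n))); auto.
      apply Rmult_le_compat_r. apply Rabs_pos. apply Rmax_l.
    - intros n x y hx hy. eapply Rle_trans.
      apply (sf_vlip p N g R1 R2 (dn (kap n)) (U (kap n)) (V (kap n)) (rsn (kap n)) hp hR1 hR12 Hg (hdn _) (hrsn _) (Hsn _) Bf HBf'); auto.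
      apply Rmult_le_compat_r. apply Rabs_pos. apply Rmax_r.
    - intros n y hy. split. apply (sol_du p N g R1 _ _ _ _ hR1 (Hsn (kap n))). specialize (hrsn (kap n)). lra.
      apply (sol_dv p N g R1 _ _ _ _ hR1 (Hsn (kap n))). specialize (hrsn (kap n)). lra.
    - intros c1 c2 hc1 hc12 hc2. assert (hc0 : 0 < c1) by lra.
      assert (hX : 0 < c1 ^ (N - 1)) by (apply pow_lt; auto).
      assert (HV1 : uconv (fun n => V (kap n)) vt (fun y => c1 < y < c2)).
      { intros e he'. destruct (Hv' e he') as [N0 HN0]. exists N0. intros n hn y hy. apply HN0; auto; lra. }
      assert (HU1 : uconv (fun n => U (kap n)) ut (fun y => c1 < y < c2)).
      { intros e he'. destruct (Hu' e he') as [N0 HN0]. exists N0. intros n hn y hy. apply HN0; auto; lra. }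
      split.
      + assert (H2 : uconv (fun n y => / y ^ (N - 1) * V (kap n) y) (fun y => / y ^ (N - 1) * vt y) (fun y => c1 < y < c2)).
        { apply (uconv_scale _ _ _ _ (/ c1 ^ (N - 1))). apply Rinv_0_lt_compat; auto. exact HV1.
          intros y hy. rewrite Rabs_right by (left; apply Rinv_0_lt_compat, pow_lt; lra).
          apply Rinv_le_contravar; auto. apply pow_incr; lra. }
        assert (H3 := unif_comp (phi_p (conj_exp p)) _ _ _ (/ c1 ^ (N - 1) * (LVc * (R2 - R1)))
                     (fun x => phi_cont (conj_exp p) x (conj_gt1 p hp)) H2).
        apply (uconv_ext (fun n y => phi_p (conj_exp p) (/ y ^ (N - 1) * V (kap n) y))
                         _ (fun y => phi_p (conj_exp p) (/ y ^ (N - 1) * vt y))).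
        * intros n y hy. unfold phi_p_inv, Rdiv. rewrite Rmult_comm. reflexivity.
        * intros y hy. unfold phi_p_inv, Rdiv. rewrite Rmult_comm. reflexivity.
        * apply H3. intros y hy. rewrite Rabs_mult. rewrite Rabs_right by (left; apply Rinv_0_lt_compat, pow_lt; lra).
          apply Rmult_le_compat. left; apply Rinv_0_lt_compat, pow_lt; lra. apply Rabs_pos.
          apply Rinv_le_contravar; auto. apply pow_incr; lra. apply Hvb; lra.
      + assert (K2 := unif_comp g _ _ _ Ub Hgc HU1 ltac:(intros y hy; apply Hub; lra)).
        assert (K3 : uconv (fun n y => - (y ^ (N - 1)) * g (U (kap n) y)) (fun y => - (y ^ (N - 1)) * g (ut y)) (fun y => c1 < y < c2)).
        { apply (uconv_scale _ _ _ _ (R2 ^ (N - 1) + 1)). assert (0 <= R2 ^ (N - 1)) by (apply pow_le; lra). lra.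
          exact K2. intros y hy. rewrite Rabs_Ropp, Rabs_right by (apply Rle_ge, pow_le; lra).
          assert (y ^ (N - 1) <= R2 ^ (N - 1)) by (apply pow_incr; lra). lra. }
        apply (uconv_ext (fun n y => - (y ^ (N - 1)) * g (U (kap n) y)) _ (fun y => - (y ^ (N - 1)) * g (ut y))).
        * intros n y hy. ring.
        * intros y hy. ring.
        * exact K3.
    - intros x hx. apply (conv_bound _ _ _ (HcV x ltac:(lra))). intros n.
      apply (sf_vbound p N g R1 R2 (dn (kap n)) (U (kap n)) (V (kap n)) (rsn (kap n)) hp hR1 hR12 Hg (hdn _) (hrsn _) (Hsn _) Bf HBf'). lra. }
  destruct (fhat_grow p f hp Hreg Heq Hf0) as [K [hK HK]].
  assert (Hlip := fhat_lip f Hreg).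
  assert (Heqs : forall r, R1 <= r < R2 -> ut r = u r /\ vt r = v r).
  { intros r hr. apply (uniq_g p N g R1 d ut vt u v R2 rs K hp hN hR1 Hg hK HK Hlip hd Hst Hs); lra. }
  assert (LipU : forall x y, R1 <= x <= R2 -> R1 <= y <= R2 -> Rabs (ut x - ut y) <= Rmax D0 LVc * Rabs (x - y)).
  { intros x y hx hy. apply (conv_lip (fun n => U (kap n)) ut x y); auto.
    intros n. eapply Rle_trans. apply (sf_ulip p N g R1 R2 (dn (kap n)) (U (kap n)) (V (kap n)) (rsn (kap n))); auto.
    apply Rmult_le_compat_r. apply Rabs_pos. apply Rmax_l. }
  assert (LipV : forall x y, R1 <= x <= R2 -> R1 <= y <= R2 -> Rabs (vt x - vt y) <= Rmax D0 LVc * Rabs (x - y)).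
  { intros x y hx hy. apply (conv_lip (fun n => V (kap n)) vt x y); auto.
    intros n. eapply Rle_trans. apply (sf_vlip p N g R1 R2 (dn (kap n)) (U (kap n)) (V (kap n)) (rsn (kap n)) hp hR1 hR12 Hg (hdn _) (hrsn _) (Hsn _) Bf HBf'); auto.
    apply Rmult_le_compat_r. apply Rabs_pos. apply Rmax_r. }
  assert (HeqU : forall r, R1 <= r <= R2 -> ut r = u r).
  { intros r hr. destruct (Req_dec r R2) as [->|hne]. 2: apply Heqs; lra.
    apply (left_lim_eq ut u R1 R2 (Rmax D0 LVc)); auto.
    intros y hy. apply Heqs; lra.
    intros y hy. rewrite <- (Rabs_right (R2 - y)) by lra.
    rewrite Rabs_minus_sym. apply LipU; lra.
    apply (sol_cu p N g R1 d u v rs hR1 Hs); lra. }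
  assert (HeqV : forall r, R1 <= r <= R2 -> vt r = v r).
  { intros r hr. destruct (Req_dec r R2) as [->|hne]. 2: apply Heqs; lra.
    apply (left_lim_eq vt v R1 R2 (Rmax D0 LVc)); auto.
    intros y hy. apply Heqs; lra.
    intros y hy. rewrite <- (Rabs_right (R2 - y)) by lra.
    rewrite Rabs_minus_sym. apply LipV; lra.
    apply (sol_cv p N g R1 d u v rs hR1 Hs); lra. }
  destruct (Hu' (eps/2) ltac:(lra)) as [N1 HN1]. destruct (Hv' (eps/2) ltac:(lra)) as [N2 HN2].
  destruct (Htb (s1 (s2 (max N1 N2)))) as [r [hr Hr]]. apply Hr.
  specialize (HN1 (max N1 N2) ltac:(lia) r hr). specialize (HN2 (max N1 N2) ltac:(lia) r hr).
  unfold kap in HN1, HN2. rewrite HeqU in HN1 by auto. rewrite HeqV in HN2 by auto. split; lra.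
Qed.

End ContDep.

Open Scope R_scope.

Theorem lemma2p2 (p : R) (N : nat) (R1 R2 : R) (f : R -> R) :
  1 < p -> (1 <= N)%nat -> 0 <= R1 -> R1 < R2 ->
  f_reg f -> f_eq f -> f_0 p f -> f_1 p f ->
  (forall d, 0 <= d <= 1 ->
     (exists (u v : R -> R) (rs : R), R2 < rs /\ is_solution p N f R1 d u v rs) /\
     (forall (u1 v1 : R -> R) (rs1 : R) (u2 v2 : R -> R) (rs2 : R),
        is_solution p N f R1 d u1 v1 rs1 ->
        is_solution p N f R1 d u2 v2 rs2 ->
        forall r, R1 <= r -> r < rs1 -> r < rs2 ->
          u1 r = u2 r /\ v1 r = v2 r)) /\
  (forall (dn : nat -> R) (d : R) (U V : nat -> R -> R) (rsn : nat -> R)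
          (u v : R -> R) (rs : R),
     (forall n, 0 < dn n < 1) -> is_lim_seq dn d -> 0 <= d <= 1 ->
     (forall n, R2 < rsn n /\ is_solution p N f R1 (dn n) (U n) (V n) (rsn n)) ->
     R2 < rs -> is_solution p N f R1 d u v rs ->
     forall eps, 0 < eps -> exists n0 : nat, forall n, (n0 <= n)%nat ->
       forall r, R1 <= r <= R2 ->
         Rabs (U n r - u r) < eps /\ Rabs (V n r - v r) < eps).
Proof.
  intros hp hN hR1 hR12 Hreg Heq Hf0 Hf1. split.
  - intros d hd. split.
    + destruct (exist_f p N f R1 R2 d hp hR1 hR12 Hreg Heq hd) as [u [v Hs]].
      exists u, v, (R2 + 1). split. lra. exact Hs.
    + intros u1 v1 rs1 u2 v2 rs2 H1 H2 r hr h1 h2.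
      destruct (fhat_grow p f hp Hreg Heq Hf0) as [K [hK HK]].
      exact (uniq_g p N (fhat f) R1 d u1 v1 u2 v2 rs1 rs2 K hp hN hR1 (fhat_gprop f Hreg Heq) hK HK
               (fhat_lip f Hreg) hd H1 H2 r hr h1 h2).
  - intros dn d U V rsn u v rs Hdn Hlim hd HUV hrs Hs eps he.
    exact (cont_dep p N f R1 R2 hp hN hR1 hR12 Hreg Heq Hf0 dn d U V rsn u v rs Hdn Hlim hd HUV hrs Hs eps he).
Qed.
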